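(* There exists a $GDD(3,K_4^{(3)}+e,gn)$ of type $g^n$ for each $(g,n)\in\{(5,4),(5,6),(10,5)\}$.
   Context: $K_4^{(3)}+e$ denotes the 3-uniform hypergraph with vertex set $\{1,2,3,4,5\}$ and edge set $\{\{1,2,3\},\{1,2,4\},\{1,3,4\},\{2,3,4\},\{3,4,5\}\}$. A $GDD(3,K_4^{(3)}+e,gn)$ of type $g^n$ is a triple $(X,\mathcal{G},\mathcal{B})$ where $|X|=gn$, $\mathcal{G}$ is a partition of $X$ into $n$ groups of size $g$, and $\mathcal{B}$ is a collection of hypergraphs on subsets of $X$ (blocks), each isomorphic to $K_4^{(3)}+e$, such that each edge of each block meets each group in at most one point, and each 3-subset of $X$ with points in three distinct groups is an edge of exactly one block. *)

(* Defs.v *)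
From mathcomp Require Import all_boot.
Set Implicit Arguments. Unset Strict Implicit. Unset Printing Implicit Defensive.

(* Vertices 1..5 of K_4^(3)+e are encoded as 0..4 in 'I_5. *)
Definition v (k : nat) : 'I_5 := inord k.

Definition K4e_edges : {set {set 'I_5}} :=
  [set [set v 0; v 1; v 2]; [set v 0; v 1; v 3]; [set v 0; v 2; v 3];
       [set v 1; v 2; v 3]; [set v 2; v 3; v 4]].

Definition hypergraph (X : finType) := ({set X} * {set {set X}})%type.

Definition iso_K4e (X : finType) (H : hypergraph X) : Prop :=
  exists f : 'I_5 -> X,
    [/\ injective f, H.1 = f @: setT & H.2 = [set f @: e | e : {set 'I_5} in K4e_edges]].

Definition transversal_to (X : finType) (G : {set {set X}}) (T : {set X}) : bool :=
  [forall A in G, #|T :&: A| <= 1].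

Definition is_GDD_K4e (g n : nat) (X : finType) (G : {set {set X}})
    (B : seq (hypergraph X)) : Prop :=
  [/\ #|X| = g * n,
      partition G [set: X],
      #|G| = n
    & (forall A, A \in G -> #|A| = g)] /\
  [/\ (forall H, H \in B -> iso_K4e H),
      (forall H e, H \in B -> e \in H.2 -> transversal_to G e)
    & (forall T : {set X}, #|T| = 3 -> transversal_to G T ->
         count (fun H : hypergraph X => T \in H.2) B = 1)].

Definition GDD_K4e_exists (g n : nat) : Prop :=
  exists (X : finType) (G : {set {set X}}) (B : seq (hypergraph X)),
    is_GDD_K4e g n G B.

(* Main.v *)
Require Import Defs.
From mathcomp Require Import all_boot.
From mathcomp Require Import zify.
Set Implicit Arguments. Unset Strict Implicit. Unset Printing Implicit Defensive.

Section Grp.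
Variables n g : nat.
Definition XT := ('I_n.+1 * 'I_g.+1)%type.
Definition grp (i : 'I_n.+1) : {set XT} := [set x : XT | x.1 == i].
Definition GG : {set {set XT}} := [set grp i | i : 'I_n.+1].

Lemma grp_inj : injective grp.
Proof.
move=> i j /setP /(_ (i, ord0)); rewrite !inE eqxx => /esym/eqP.
done.
Qed.

Lemma card_GG : #|GG| = n.+1.
Proof. by rewrite card_imset ?card_ord //; apply: grp_inj. Qed.

Lemma card_grp i : #|grp i| = g.+1.
Proof.
have -> : grp i = setX [set i] setT by apply/setP=> -[x y]; rewrite !inE andbT.
by rewrite cardsX cards1 cardsT card_ord mul1n.
Qed.

Lemma part_GG : partition GG [set: XT].
Proof.
apply/and3P; split.
- apply/eqP/setP=> x; rewrite inE; apply/bigcupP; exists (grp x.1).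
    by apply: imset_f. by rewrite inE.
- apply/trivIsetP=> A B /imsetP[i _ ->] /imsetP[j _ ->] ne.
  have nij : i != j by apply: contraNneq ne => ->.
  rewrite -setI_eq0; apply/eqP/setP=> x; rewrite !inE.
  by apply/andP=> -[/eqP -> /eqP e]; rewrite e eqxx in nij.
- apply/imsetP=> -[i _ /setP /(_ (i, ord0))]; rewrite !inE eqxx. done.
Qed.

Lemma transP (T : {set XT}) :
  transversal_to GG T <-> (forall x y, x \in T -> y \in T -> x.1 = y.1 -> x = y).
Proof.
split.
- move=> /forall_inP H x y xT yT e.
  have /H /card_le1_eqP : grp x.1 \in GG by apply/imsetP; exists x.1.
  apply; rewrite !inE ?xT ?yT /= ?e eqxx //.
- move=> H; apply/forall_inP=> A /imsetP[i _ ->].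
  apply/card_le1_eqP=> x y; rewrite !inE => /andP[xT /eqP ex] /andP[yT /eqP ey].
  by apply: H => //; rewrite ex ey.
Qed.
End Grp.

Definition pt := (nat * nat)%type.
Definition lexle (p q : pt) : bool := (p.1 < q.1) || ((p.1 == q.1) && (p.2 <= q.2)).

Lemma lexle_total : total lexle.
Proof. move=> [a b] [c d]; rewrite /lexle /=; lia. Qed.
Lemma lexle_trans : transitive lexle.
Proof. move=> [a b] [c d] [e f]; rewrite /lexle /=; lia. Qed.
Lemma lexle_anti : antisymmetric lexle.
Proof. move=> [a b] [c d]; rewrite /lexle /= => H; apply/eqP; rewrite xpair_eqE; lia. Qed.

Fixpoint lexs (s t : seq pt) : bool :=
  match s, t with
  | [::], _ => true
  | _ :: _, [::] => false
  | x :: s', y :: t' => (lexle x y && (x != y)) || ((x == y) && lexs s' t')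
  end.

Lemma count_flat (F : seq pt -> seq (seq pt)) c s :
  uniq (flatten (map F s)) -> count (fun x => c \in F x) s = count_mem c (flatten (map F s)).
Proof.
elim: s => //= x s IH; rewrite cat_uniq count_cat => /and3P[u1 _ u2].
by rewrite count_uniq_mem // IH.
Qed.

Section Blocks.
Variables n g : nat.
Local Notation X := (XT n g).
Definition cp (x : X) : pt := (val x.1, val x.2).
Lemma cp_inj : injective cp.
Proof. by move=> [a b] [c d] [/val_inj -> /val_inj ->]. Qed.
Definition code (S : {set X}) : seq pt := sort lexle (map cp (enum S)).
Lemma mem_code S x : (cp x \in code S) = (x \in S).
Proof. by rewrite mem_sort (mem_map cp_inj) mem_enum. Qed.
Lemma code_inj : injective code.
Proof. by move=> S1 S2 e; apply/setP=> x; rewrite -!mem_code e. Qed.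
Lemma code3 a b c : uniq [:: a; b; c] -> code [set a; b; c] = sort lexle [:: cp a; cp b; cp c].
Proof.
move=> u; rewrite /code; apply/(perm_sortP lexle_total lexle_trans lexle_anti).
rewrite (_ : [:: cp a; cp b; cp c] = map cp [:: a; b; c]) //.
apply: perm_map; apply: uniq_perm => //; first exact: enum_uniq.
by move=> x; rewrite mem_enum !inE orbA.
Qed.

Definition nth0 (b : seq pt) k := nth (0,0) b k.
Definition mkf (b : seq pt) (i : 'I_5) : X := (inord (nth0 b i).1, inord (nth0 b i).2).
Definition mkH b : hypergraph X := (mkf b @: setT, [set mkf b @: e | e : {set 'I_5} in K4e_edges]).
Definition edges_nat (b : seq pt) : seq (seq pt) :=
  let p := nth0 b in
  [:: sort lexle [:: p 0; p 1; p 2]; sort lexle [:: p 0; p 1; p 3]; sort lexle [:: p 0; p 2; p 3];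
      sort lexle [:: p 1; p 2; p 3]; sort lexle [:: p 2; p 3; p 4]].
Definition inrange (p : pt) := (p.1 < n.+1) && (p.2 < g.+1).
Definition blk_ok (b : seq pt) :=
  let p k := (nth0 b k).1 in
  [&& size b == 5, all inrange b, uniq b,
      [&& p 0 != p 1, p 0 != p 2, p 0 != p 3, p 1 != p 2, p 1 != p 3 & p 2 != p 3],
      p 4 != p 2 & p 4 != p 3].

Section OneBlock.
Variable b : seq pt.
Hypothesis ok : blk_ok b.

Lemma cp_mkf (i : 'I_5) : cp (mkf b i) = nth0 b i.
Proof.
case/and5P: ok => /eqP sz /allP ir _ _ _.
have /ir /andP[h1 h2] : nth0 b i \in b by apply: mem_nth; rewrite sz.
by rewrite /cp /mkf /= !inordK //; case: (nth0 b i).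
Qed.

Lemma cp_mkfv k : k < 5 -> cp (mkf b (v k)) = nth0 b k.
Proof. by move=> lk; rewrite cp_mkf /v inordK. Qed.

Lemma mkf_inj : injective (mkf b).
Proof.
case/and5P: ok => /eqP sz _ u _ _ i j /(congr1 cp); rewrite !cp_mkf => /eqP.
by rewrite /nth0 nth_uniq ?sz // => /eqP /val_inj.
Qed.

Lemma grp_ne k l : k < 5 -> l < 5 -> (nth0 b k).1 != (nth0 b l).1 ->
  (mkf b (v k)).1 != (mkf b (v l)).1.
Proof.
move=> lk ll; apply: contra => /eqP e; apply/eqP.
by rewrite -(cp_mkfv lk) -(cp_mkfv ll); exact: (congr1 val e).
Qed.

Lemma H2_eq : (mkH b).2 =
  [set [set mkf b (v 0); mkf b (v 1); mkf b (v 2)];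
       [set mkf b (v 0); mkf b (v 1); mkf b (v 3)];
       [set mkf b (v 0); mkf b (v 2); mkf b (v 3)];
       [set mkf b (v 1); mkf b (v 2); mkf b (v 3)];
       [set mkf b (v 2); mkf b (v 3); mkf b (v 4)]].
Proof. by rewrite /mkH /K4e_edges !(imsetU, imsetU1, imset_set1). Qed.

Lemma code_e k l m : k < 5 -> l < 5 -> m < 5 -> uniq [:: k; l; m] ->
  code [set mkf b (v k); mkf b (v l); mkf b (v m)] = sort lexle [:: nth0 b k; nth0 b l; nth0 b m].
Proof.
move=> lk ll lm u; rewrite code3 ?cp_mkfv //.
have vi : forall x y, x < 5 -> y < 5 -> x != y -> mkf b (v x) != mkf b (v y).
  move=> x y lx ly; apply: contra => /eqP /mkf_inj /(congr1 (@nat_of_ord 5)); rewrite /v !inordK //.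
  by move=> ->.
move: u; rewrite /= !inE !negb_or andbT => /andP[/andP[u1 u2] u3].
by rewrite !vi.
Qed.

Lemma H2_mem T : (T \in (mkH b).2) = (code T \in edges_nat b).
Proof.
by rewrite H2_eq !inE -!(inj_eq code_inj) !code_e // -!orbA.
Qed.

Lemma trans3 (a c d : X) : a.1 != c.1 -> a.1 != d.1 -> c.1 != d.1 ->
  transversal_to (GG n g) [set a; c; d].
Proof.
move=> h1 h2 h3; apply/transP=> x y; rewrite !inE.
move=> /orP[/orP[]|]/eqP-> /orP[/orP[]|]/eqP-> // e; move: h1 h2 h3; rewrite e !eqxx //=; by rewrite ?andbF.
Qed.

Lemma edges_trans e : e \in (mkH b).2 -> transversal_to (GG n g) e.
Proof.
case/and5P: ok => _ _ _ /and5P[g01 g02 g03 g12 /andP[g13 g23]] /andP[g42 g43].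
rewrite H2_eq !inE -!orbA => /or4P[||| /orP[]] /eqP->; apply: trans3; apply: grp_ne => //.
all: by rewrite eq_sym.
Qed.

End OneBlock.
End Blocks.

Section Glob.
Variables n g : nat.
Local Notation X := (XT n g).
Definition pts : seq pt := [seq (i, j) | i <- iota 0 n.+1, j <- iota 0 g.+1].
Definition trip : seq (seq pt) :=
  [seq x :: yz | x <- pts, yz <- [seq [:: y; z] | y <- pts, z <- pts]].
Definition validt (t : seq pt) := (sort lexle t == t) && uniq (map fst t).
Definition ALL := filter validt trip.
Definition checker (data : seq (seq pt)) :=
  all (blk_ok n g) data && (sort lexs (flatten (map edges_nat data)) == ALL).

Lemma pts_uniq : uniq pts.
Proof. by apply: allpairs_uniq; rewrite ?iota_uniq // => -[? ?] [? ?] _ _ [-> ->]. Qed.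

Lemma ALL_uniq : uniq ALL.
Proof.
apply: filter_uniq; apply: allpairs_uniq; rewrite ?pts_uniq //.
  by apply: allpairs_uniq; rewrite ?pts_uniq // => -[? ?] [? ?] _ _ [-> ->].
by move=> [? ?] [? ?] _ _ /= [-> ->].
Qed.

Lemma cp_pts (x : X) : cp x \in pts.
Proof. by apply: allpairs_f; rewrite mem_iota add0n ltn_ord. Qed.

Lemma code_ALL (T : {set X}) : #|T| = 3 -> transversal_to (GG n g) T -> code T \in ALL.
Proof.
move=> cT /transP tT; rewrite mem_filter; apply/andP; split.
  apply/andP; split.
    by apply/eqP/sorted_sort; [exact: lexle_trans | exact: (sort_sorted lexle_total)].
  rewrite /code (perm_uniq (perm_map fst (permEl (perm_sort _ _)))) -map_comp.
  rewrite map_inj_in_uniq ?enum_uniq // => x y; rewrite !mem_enum => xT yT /= e.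
  by apply: tT => //; apply: val_inj.
have sz : size (code T) = 3 by rewrite size_sort size_map -cardE.
have inp : forall z, z \in code T -> z \in pts.
  by move=> z; rewrite mem_sort => /mapP[x _ ->]; exact: cp_pts.
move: sz inp; case: (code T) => [|p [|q [|r [|]]]] //= _ inp.
apply: allpairs_f; first by apply: inp; rewrite inE eqxx.
apply: allpairs_f; apply: inp; rewrite !inE eqxx ?orbT //.
Qed.

Theorem main data : checker data -> is_GDD_K4e g.+1 n.+1 (GG n g) (map (@mkH n g) data).
Proof.
case/andP=> /allP ok /eqP srt.
have pe : perm_eq (flatten (map edges_nat data)) ALL.
  by rewrite -srt perm_sym perm_sort.
split; first split.
- by rewrite card_prod !card_ord mulnC.
- exact: part_GG.
- exact: card_GG.
- by move=> A /imsetP[i _ ->]; exact: card_grp.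
split.
- move=> H /mapP[b /ok bok ->]; exists (mkf n g b); split => //; exact: mkf_inj.
- move=> H e /mapP[b /ok bok ->]; exact: edges_trans.
- move=> T cT tT; rewrite count_map.
  rewrite (eq_in_count (a2 := fun b => code T \in edges_nat b)); last first.
    by move=> b /ok bok /=; rewrite H2_mem.
  rewrite count_flat ?(perm_uniq pe) ?ALL_uniq //.
  by rewrite (permP pe) count_uniq_mem ?ALL_uniq // code_ALL.
Qed.
End Glob.

Definition d54 : seq (seq pt) :=
[:: [:: (0,0); (1,0); (3,2); (2,2); (0,2)];
 [:: (0,0); (1,1); (2,4); (3,3); (0,3)];
 [:: (0,0); (2,0); (1,3); (3,2); (0,2)];
 [:: (0,0); (2,2); (1,4); (3,3); (2,4)];
 [:: (0,0); (3,1); (2,0); (1,4); (3,0)];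
 [:: (0,1); (1,1); (3,3); (2,3); (0,3)];
 [:: (0,1); (1,2); (2,0); (3,4); (0,4)];
 [:: (0,1); (2,1); (1,4); (3,3); (0,3)];
 [:: (0,1); (2,3); (1,0); (3,4); (2,0)];
 [:: (0,1); (3,2); (2,1); (1,0); (3,1)];
 [:: (0,2); (1,2); (3,4); (2,4); (0,4)];
 [:: (0,2); (1,3); (2,1); (3,0); (0,0)];
 [:: (0,2); (2,2); (1,0); (3,4); (0,4)];
 [:: (0,2); (2,4); (1,1); (3,0); (2,1)];
 [:: (0,2); (3,3); (2,2); (1,1); (3,2)];
 [:: (0,3); (1,3); (3,0); (2,0); (0,0)];
 [:: (0,3); (1,4); (2,2); (3,1); (0,1)];
 [:: (0,3); (2,0); (1,2); (3,1); (2,2)];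
 [:: (0,3); (2,3); (1,1); (3,0); (0,0)];
 [:: (0,3); (3,4); (2,3); (1,2); (3,3)];
 [:: (0,4); (1,0); (2,3); (3,2); (0,2)];
 [:: (0,4); (1,4); (3,1); (2,1); (0,1)];
 [:: (0,4); (2,1); (1,3); (3,2); (2,3)];
 [:: (0,4); (2,4); (1,2); (3,1); (0,1)];
 [:: (0,4); (3,0); (2,4); (1,3); (3,4)];
 [:: (1,0); (0,1); (3,0); (2,4); (0,0)];
 [:: (1,0); (2,0); (0,2); (3,2); (1,2)];
 [:: (1,0); (2,1); (3,4); (0,3); (1,3)];
 [:: (1,0); (3,0); (2,3); (0,2); (1,2)];
 [:: (1,0); (3,2); (2,4); (0,3); (3,4)];
 [:: (1,1); (0,2); (3,1); (2,0); (0,1)];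
 [:: (1,1); (2,1); (0,3); (3,3); (1,3)];
 [:: (1,1); (2,2); (3,0); (0,4); (1,4)];
 [:: (1,1); (3,1); (2,4); (0,3); (1,3)];
 [:: (1,1); (3,3); (2,0); (0,4); (3,0)];
 [:: (1,2); (0,3); (3,2); (2,1); (0,2)];
 [:: (1,2); (2,2); (0,4); (3,4); (1,4)];
 [:: (1,2); (2,3); (3,1); (0,0); (1,0)];
 [:: (1,2); (3,2); (2,0); (0,4); (1,4)];
 [:: (1,2); (3,4); (2,1); (0,0); (3,1)];
 [:: (1,3); (0,4); (3,3); (2,2); (0,3)];
 [:: (1,3); (2,3); (0,0); (3,0); (1,0)];
 [:: (1,3); (2,4); (3,2); (0,1); (1,1)];
 [:: (1,3); (3,0); (2,2); (0,1); (3,2)];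
 [:: (1,3); (3,3); (2,1); (0,0); (1,0)];
 [:: (1,4); (0,0); (3,4); (2,3); (0,4)];
 [:: (1,4); (2,0); (3,3); (0,2); (1,2)];
 [:: (1,4); (2,4); (0,1); (3,1); (1,1)];
 [:: (1,4); (3,1); (2,3); (0,2); (3,3)];
 [:: (1,4); (3,4); (2,2); (0,1); (1,1)];
 [:: (2,0); (0,0); (3,3); (1,2); (2,2)];
 [:: (2,0); (0,2); (3,4); (1,3); (0,4)];
 [:: (2,0); (1,1); (0,0); (3,4); (1,0)];
 [:: (2,0); (3,0); (1,2); (0,2); (2,2)];
 [:: (2,0); (3,1); (0,4); (1,3); (2,3)];
 [:: (2,1); (0,1); (3,4); (1,3); (2,3)];
 [:: (2,1); (0,3); (3,0); (1,4); (0,0)];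
 [:: (2,1); (1,2); (0,1); (3,0); (1,1)];
 [:: (2,1); (3,1); (1,3); (0,3); (2,3)];
 [:: (2,1); (3,2); (0,0); (1,4); (2,4)];
 [:: (2,2); (0,2); (3,0); (1,4); (2,4)];
 [:: (2,2); (0,4); (3,1); (1,0); (0,1)];
 [:: (2,2); (1,3); (0,2); (3,1); (1,2)];
 [:: (2,2); (3,2); (1,4); (0,4); (2,4)];
 [:: (2,2); (3,3); (0,1); (1,0); (2,0)];
 [:: (2,3); (0,0); (3,2); (1,1); (0,2)];
 [:: (2,3); (0,3); (3,1); (1,0); (2,0)];
 [:: (2,3); (1,4); (0,3); (3,2); (1,3)];
 [:: (2,3); (3,3); (1,0); (0,0); (2,0)];
 [:: (2,3); (3,4); (0,2); (1,1); (2,1)];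
 [:: (2,4); (0,1); (3,3); (1,2); (0,3)];
 [:: (2,4); (0,4); (3,2); (1,1); (2,1)];
 [:: (2,4); (1,0); (0,4); (3,3); (1,4)];
 [:: (2,4); (3,0); (0,3); (1,2); (2,2)];
 [:: (2,4); (3,4); (1,1); (0,1); (2,1)];
 [:: (3,0); (0,0); (2,2); (1,2); (3,2)];
 [:: (3,0); (0,1); (1,4); (2,3); (3,3)];
 [:: (3,0); (1,0); (0,3); (2,2); (3,2)];
 [:: (3,0); (1,2); (0,4); (2,3); (1,4)];
 [:: (3,0); (2,1); (1,0); (0,4); (2,0)];
 [:: (3,1); (0,1); (2,3); (1,3); (3,3)];
 [:: (3,1); (0,2); (1,0); (2,4); (3,4)];
 [:: (3,1); (1,1); (0,4); (2,3); (3,3)];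
 [:: (3,1); (1,3); (0,0); (2,4); (1,0)];
 [:: (3,1); (2,2); (1,1); (0,0); (2,1)];
 [:: (3,2); (0,2); (2,4); (1,4); (3,4)];
 [:: (3,2); (0,3); (1,1); (2,0); (3,0)];
 [:: (3,2); (1,2); (0,0); (2,4); (3,4)];
 [:: (3,2); (1,4); (0,1); (2,0); (1,1)];
 [:: (3,2); (2,3); (1,2); (0,1); (2,2)];
 [:: (3,3); (0,3); (2,0); (1,0); (3,0)];
 [:: (3,3); (0,4); (1,2); (2,1); (3,1)];
 [:: (3,3); (1,0); (0,2); (2,1); (1,2)];
 [:: (3,3); (1,3); (0,1); (2,0); (3,0)];
 [:: (3,3); (2,4); (1,3); (0,2); (2,3)];
 [:: (3,4); (0,0); (1,3); (2,2); (3,2)];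
 [:: (3,4); (0,4); (2,1); (1,1); (3,1)];
 [:: (3,4); (1,1); (0,3); (2,2); (1,3)];
 [:: (3,4); (1,4); (0,2); (2,1); (3,1)];
 [:: (3,4); (2,0); (1,4); (0,3); (2,4)]].

Lemma chk_d54 : checker 3 4 d54.
Proof. by vm_compute. Qed.

Definition d56 : seq (seq pt) :=
[:: [:: (0,0); (1,0); (4,3); (3,2); (1,4)];
 [:: (0,0); (1,0); (5,2); (2,3); (3,3)];
 [:: (0,0); (1,2); (2,3); (4,1); (1,1)];
 [:: (0,0); (1,2); (3,1); (5,4); (2,4)];
 [:: (0,0); (1,3); (3,0); (2,4); (5,2)];
 [:: (0,0); (1,4); (4,2); (5,3); (2,4)];
 [:: (0,0); (1,4); (5,1); (4,4); (3,1)];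
 [:: (0,0); (2,1); (1,0); (4,0); (5,0)];
 [:: (0,0); (2,1); (3,4); (4,1); (0,3)];
 [:: (0,0); (2,1); (5,1); (4,3); (1,1)];
 [:: (0,0); (2,1); (5,2); (3,3); (0,3)];
 [:: (0,0); (2,2); (5,2); (3,1); (0,1)];
 [:: (0,0); (3,3); (2,4); (4,2); (0,4)];
 [:: (0,0); (3,4); (4,2); (1,0); (5,2)];
 [:: (0,0); (3,4); (5,3); (4,0); (0,3)];
 [:: (0,0); (4,1); (5,0); (1,0); (0,3)];
 [:: (0,0); (4,3); (1,3); (3,3); (2,2)];
 [:: (0,0); (5,1); (4,2); (3,1); (5,2)];
 [:: (0,0); (5,3); (3,2); (2,2); (4,1)];
 [:: (0,0); (5,3); (4,1); (2,0); (5,0)];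
 [:: (0,1); (1,0); (4,3); (5,4); (2,0)];
 [:: (0,1); (1,0); (5,2); (4,0); (3,2)];
 [:: (0,1); (1,1); (4,4); (3,3); (1,0)];
 [:: (0,1); (1,1); (5,3); (2,4); (3,4)];
 [:: (0,1); (1,3); (2,4); (4,2); (1,2)];
 [:: (0,1); (1,3); (3,2); (5,0); (2,0)];
 [:: (0,1); (1,4); (3,1); (2,0); (5,3)];
 [:: (0,1); (2,2); (1,1); (4,1); (5,1)];
 [:: (0,1); (2,2); (3,0); (4,2); (0,4)];
 [:: (0,1); (2,2); (5,2); (4,4); (1,2)];
 [:: (0,1); (2,2); (5,3); (3,4); (0,4)];
 [:: (0,1); (2,3); (5,3); (3,2); (0,2)];
 [:: (0,1); (3,0); (4,3); (1,1); (5,3)];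
 [:: (0,1); (3,0); (5,4); (4,1); (0,4)];
 [:: (0,1); (3,4); (2,0); (4,3); (0,0)];
 [:: (0,1); (4,2); (5,1); (1,1); (0,4)];
 [:: (0,1); (4,4); (1,4); (3,4); (2,3)];
 [:: (0,1); (5,2); (4,3); (3,2); (5,3)];
 [:: (0,1); (5,4); (3,3); (2,3); (4,2)];
 [:: (0,1); (5,4); (4,2); (2,1); (5,1)];
 [:: (0,2); (1,0); (3,2); (2,1); (5,4)];
 [:: (0,2); (1,1); (4,4); (5,0); (2,1)];
 [:: (0,2); (1,1); (5,3); (4,1); (3,3)];
 [:: (0,2); (1,2); (4,0); (3,4); (1,1)];
 [:: (0,2); (1,2); (5,4); (2,0); (3,0)];
 [:: (0,2); (1,4); (2,0); (4,3); (1,3)];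
 [:: (0,2); (1,4); (3,3); (5,1); (2,1)];
 [:: (0,2); (2,3); (1,2); (4,2); (5,2)];
 [:: (0,2); (2,3); (3,1); (4,3); (0,0)];
 [:: (0,2); (2,3); (5,3); (4,0); (1,3)];
 [:: (0,2); (2,3); (5,4); (3,0); (0,0)];
 [:: (0,2); (2,4); (5,4); (3,3); (0,3)];
 [:: (0,2); (3,0); (2,1); (4,4); (0,1)];
 [:: (0,2); (3,1); (4,4); (1,2); (5,4)];
 [:: (0,2); (3,1); (5,0); (4,2); (0,0)];
 [:: (0,2); (4,0); (1,0); (3,0); (2,4)];
 [:: (0,2); (4,3); (5,2); (1,2); (0,0)];
 [:: (0,2); (5,0); (3,4); (2,4); (4,3)];
 [:: (0,2); (5,0); (4,3); (2,2); (5,2)];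
 [:: (0,2); (5,3); (4,4); (3,3); (5,4)];
 [:: (0,3); (1,0); (2,1); (4,4); (1,4)];
 [:: (0,3); (1,0); (3,4); (5,2); (2,2)];
 [:: (0,3); (1,1); (3,3); (2,2); (5,0)];
 [:: (0,3); (1,2); (4,0); (5,1); (2,2)];
 [:: (0,3); (1,2); (5,4); (4,2); (3,4)];
 [:: (0,3); (1,3); (4,1); (3,0); (1,2)];
 [:: (0,3); (1,3); (5,0); (2,1); (3,1)];
 [:: (0,3); (2,0); (5,0); (3,4); (0,4)];
 [:: (0,3); (2,4); (1,3); (4,3); (5,3)];
 [:: (0,3); (2,4); (3,2); (4,4); (0,1)];
 [:: (0,3); (2,4); (5,0); (3,1); (0,1)];
 [:: (0,3); (2,4); (5,4); (4,1); (1,4)];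
 [:: (0,3); (3,1); (2,2); (4,0); (0,2)];
 [:: (0,3); (3,2); (4,0); (1,3); (5,0)];
 [:: (0,3); (3,2); (5,1); (4,3); (0,1)];
 [:: (0,3); (4,1); (1,1); (3,1); (2,0)];
 [:: (0,3); (4,4); (5,3); (1,3); (0,1)];
 [:: (0,3); (5,1); (3,0); (2,0); (4,4)];
 [:: (0,3); (5,1); (4,4); (2,3); (5,3)];
 [:: (0,3); (5,4); (4,0); (3,4); (5,0)];
 [:: (0,4); (1,1); (2,2); (4,0); (1,0)];
 [:: (0,4); (1,1); (3,0); (5,3); (2,3)];
 [:: (0,4); (1,2); (3,4); (2,3); (5,1)];
 [:: (0,4); (1,3); (4,1); (5,2); (2,3)];
 [:: (0,4); (1,3); (5,0); (4,3); (3,0)];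
 [:: (0,4); (1,4); (4,2); (3,1); (1,3)];
 [:: (0,4); (1,4); (5,1); (2,2); (3,2)];
 [:: (0,4); (2,0); (1,4); (4,4); (5,4)];
 [:: (0,4); (2,0); (3,3); (4,0); (0,2)];
 [:: (0,4); (2,0); (5,0); (4,2); (1,0)];
 [:: (0,4); (2,0); (5,1); (3,2); (0,2)];
 [:: (0,4); (2,1); (5,1); (3,0); (0,0)];
 [:: (0,4); (3,2); (2,3); (4,1); (0,3)];
 [:: (0,4); (3,3); (4,1); (1,4); (5,1)];
 [:: (0,4); (3,3); (5,2); (4,4); (0,2)];
 [:: (0,4); (4,0); (5,4); (1,4); (0,2)];
 [:: (0,4); (4,2); (1,2); (3,2); (2,1)];
 [:: (0,4); (5,0); (4,1); (3,0); (5,1)];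
 [:: (0,4); (5,2); (3,1); (2,1); (4,0)];
 [:: (0,4); (5,2); (4,0); (2,4); (5,4)];
 [:: (1,0); (0,1); (5,0); (2,0); (1,3)];
 [:: (1,0); (0,3); (2,3); (4,3); (3,2)];
 [:: (1,0); (2,0); (0,3); (4,2); (2,4)];
 [:: (1,0); (2,0); (5,2); (3,3); (4,3)];
 [:: (1,0); (2,2); (3,3); (0,1); (2,1)];
 [:: (1,0); (2,2); (4,1); (5,4); (3,4)];
 [:: (1,0); (2,3); (4,0); (3,4); (5,2)];
 [:: (1,0); (2,4); (0,2); (5,3); (3,4)];
 [:: (1,0); (2,4); (5,1); (0,4); (4,1)];
 [:: (1,0); (3,1); (2,0); (0,0); (5,0)];
 [:: (1,0); (3,1); (4,4); (0,1); (1,3)];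
 [:: (1,0); (3,1); (5,1); (0,3); (2,1)];
 [:: (1,0); (3,1); (5,2); (4,3); (1,3)];
 [:: (1,0); (3,2); (5,2); (4,1); (1,1)];
 [:: (1,0); (4,3); (3,4); (0,2); (1,4)];
 [:: (1,0); (4,4); (0,2); (2,0); (5,2)];
 [:: (1,0); (4,4); (5,3); (0,0); (1,3)];
 [:: (1,0); (5,1); (0,2); (4,1); (5,2)];
 [:: (1,0); (5,3); (0,1); (3,0); (5,0)];
 [:: (1,0); (5,3); (4,2); (3,2); (0,1)];
 [:: (1,1); (0,2); (5,1); (2,1); (1,4)];
 [:: (1,1); (0,4); (2,4); (4,4); (3,3)];
 [:: (1,1); (2,0); (0,3); (5,4); (3,0)];
 [:: (1,1); (2,0); (5,2); (0,0); (4,2)];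
 [:: (1,1); (2,1); (0,4); (4,3); (2,0)];
 [:: (1,1); (2,1); (5,3); (3,4); (4,4)];
 [:: (1,1); (2,3); (3,4); (0,2); (2,2)];
 [:: (1,1); (2,3); (4,2); (5,0); (3,0)];
 [:: (1,1); (2,4); (4,1); (3,0); (5,3)];
 [:: (1,1); (3,2); (2,1); (0,1); (5,1)];
 [:: (1,1); (3,2); (4,0); (0,2); (1,4)];
 [:: (1,1); (3,2); (5,2); (0,4); (2,2)];
 [:: (1,1); (3,2); (5,3); (4,4); (1,4)];
 [:: (1,1); (3,3); (5,3); (4,2); (1,2)];
 [:: (1,1); (4,0); (0,3); (2,1); (5,3)];
 [:: (1,1); (4,0); (5,4); (0,1); (1,4)];
 [:: (1,1); (4,4); (3,0); (0,3); (1,0)];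
 [:: (1,1); (5,2); (0,3); (4,2); (5,3)];
 [:: (1,1); (5,4); (0,2); (3,1); (5,1)];
 [:: (1,1); (5,4); (4,3); (3,3); (0,2)];
 [:: (1,2); (0,0); (2,0); (4,0); (3,4)];
 [:: (1,2); (0,3); (5,2); (2,2); (1,0)];
 [:: (1,2); (2,0); (4,2); (3,1); (5,4)];
 [:: (1,2); (2,1); (0,4); (5,0); (3,1)];
 [:: (1,2); (2,1); (5,3); (0,1); (4,3)];
 [:: (1,2); (2,2); (0,0); (4,4); (2,1)];
 [:: (1,2); (2,2); (5,4); (3,0); (4,0)];
 [:: (1,2); (2,4); (3,0); (0,3); (2,3)];
 [:: (1,2); (2,4); (4,3); (5,1); (3,1)];
 [:: (1,2); (3,3); (2,2); (0,2); (5,2)];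
 [:: (1,2); (3,3); (4,1); (0,3); (1,0)];
 [:: (1,2); (3,3); (5,3); (0,0); (2,3)];
 [:: (1,2); (3,3); (5,4); (4,0); (1,0)];
 [:: (1,2); (3,4); (5,4); (4,3); (1,3)];
 [:: (1,2); (4,0); (3,1); (0,4); (1,1)];
 [:: (1,2); (4,1); (0,4); (2,2); (5,4)];
 [:: (1,2); (4,1); (5,0); (0,2); (1,0)];
 [:: (1,2); (5,0); (0,3); (3,2); (5,2)];
 [:: (1,2); (5,0); (4,4); (3,4); (0,3)];
 [:: (1,2); (5,3); (0,4); (4,3); (5,4)];
 [:: (1,3); (0,1); (2,1); (4,1); (3,0)];
 [:: (1,3); (0,4); (5,3); (2,3); (1,1)];
 [:: (1,3); (2,0); (3,1); (0,4); (2,4)];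
 [:: (1,3); (2,0); (4,4); (5,2); (3,2)];
 [:: (1,3); (2,1); (4,3); (3,2); (5,0)];
 [:: (1,3); (2,2); (0,0); (5,1); (3,2)];
 [:: (1,3); (2,2); (5,4); (0,2); (4,4)];
 [:: (1,3); (2,3); (0,1); (4,0); (2,2)];
 [:: (1,3); (2,3); (5,0); (3,1); (4,1)];
 [:: (1,3); (3,0); (5,0); (4,4); (1,4)];
 [:: (1,3); (3,4); (2,3); (0,3); (5,3)];
 [:: (1,3); (3,4); (4,2); (0,4); (1,1)];
 [:: (1,3); (3,4); (5,0); (4,1); (1,1)];
 [:: (1,3); (3,4); (5,4); (0,1); (2,4)];
 [:: (1,3); (4,1); (3,2); (0,0); (1,2)];
 [:: (1,3); (4,2); (0,0); (2,3); (5,0)];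
 [:: (1,3); (4,2); (5,1); (0,3); (1,1)];
 [:: (1,3); (5,1); (0,4); (3,3); (5,3)];
 [:: (1,3); (5,1); (4,0); (3,0); (0,4)];
 [:: (1,3); (5,4); (0,0); (4,4); (5,0)];
 [:: (1,4); (0,0); (5,4); (2,4); (1,2)];
 [:: (1,4); (0,2); (2,2); (4,2); (3,1)];
 [:: (1,4); (2,1); (3,2); (0,0); (2,0)];
 [:: (1,4); (2,1); (4,0); (5,3); (3,3)];
 [:: (1,4); (2,2); (4,4); (3,3); (5,1)];
 [:: (1,4); (2,3); (0,1); (5,2); (3,3)];
 [:: (1,4); (2,3); (5,0); (0,3); (4,0)];
 [:: (1,4); (2,4); (0,2); (4,1); (2,3)];
 [:: (1,4); (2,4); (5,1); (3,2); (4,2)];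
 [:: (1,4); (3,0); (2,4); (0,4); (5,4)];
 [:: (1,4); (3,0); (4,3); (0,0); (1,2)];
 [:: (1,4); (3,0); (5,0); (0,2); (2,0)];
 [:: (1,4); (3,0); (5,1); (4,2); (1,2)];
 [:: (1,4); (3,1); (5,1); (4,0); (1,0)];
 [:: (1,4); (4,2); (3,3); (0,1); (1,3)];
 [:: (1,4); (4,3); (0,1); (2,4); (5,1)];
 [:: (1,4); (4,3); (5,2); (0,4); (1,2)];
 [:: (1,4); (5,0); (0,1); (4,0); (5,1)];
 [:: (1,4); (5,2); (0,0); (3,4); (5,4)];
 [:: (1,4); (5,2); (4,1); (3,1); (0,0)];
 [:: (2,0); (0,3); (4,4); (1,2); (2,4)];
 [:: (2,0); (0,4); (1,2); (3,0); (5,2)];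
 [:: (2,0); (0,4); (5,3); (1,0); (2,3)];
 [:: (2,0); (1,1); (5,0); (3,0); (2,3)];
 [:: (2,0); (1,3); (3,3); (0,3); (4,2)];
 [:: (2,0); (3,0); (1,3); (0,2); (3,4)];
 [:: (2,0); (3,0); (5,2); (4,3); (0,3)];
 [:: (2,0); (3,2); (0,1); (5,4); (4,4)];
 [:: (2,0); (3,2); (4,3); (1,1); (3,1)];
 [:: (2,0); (3,3); (0,0); (4,4); (5,2)];
 [:: (2,0); (3,4); (1,2); (5,3); (4,4)];
 [:: (2,0); (3,4); (5,1); (1,4); (0,1)];
 [:: (2,0); (4,1); (0,4); (1,1); (2,3)];
 [:: (2,0); (4,1); (3,0); (1,0); (5,0)];
 [:: (2,0); (4,1); (5,1); (1,3); (3,1)];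
 [:: (2,0); (4,1); (5,2); (0,3); (2,3)];
 [:: (2,0); (4,2); (5,2); (0,1); (2,1)];
 [:: (2,0); (5,1); (1,2); (0,1); (5,2)];
 [:: (2,0); (5,3); (0,2); (4,2); (1,1)];
 [:: (2,0); (5,3); (1,1); (4,0); (5,0)];
 [:: (2,1); (0,0); (1,3); (3,1); (5,3)];
 [:: (2,1); (0,0); (5,4); (1,1); (2,4)];
 [:: (2,1); (0,4); (4,0); (1,3); (2,0)];
 [:: (2,1); (1,2); (5,1); (3,1); (2,4)];
 [:: (2,1); (1,4); (3,4); (0,4); (4,3)];
 [:: (2,1); (3,0); (1,3); (5,4); (4,0)];
 [:: (2,1); (3,0); (5,2); (1,0); (0,2)];
 [:: (2,1); (3,1); (1,4); (0,3); (3,0)];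
 [:: (2,1); (3,1); (5,3); (4,4); (0,4)];
 [:: (2,1); (3,3); (0,2); (5,0); (4,0)];
 [:: (2,1); (3,3); (4,4); (1,2); (3,2)];
 [:: (2,1); (3,4); (0,1); (4,0); (5,3)];
 [:: (2,1); (4,2); (0,0); (1,2); (2,4)];
 [:: (2,1); (4,2); (3,1); (1,1); (5,1)];
 [:: (2,1); (4,2); (5,2); (1,4); (3,2)];
 [:: (2,1); (4,2); (5,3); (0,4); (2,4)];
 [:: (2,1); (4,3); (5,3); (0,2); (2,2)];
 [:: (2,1); (5,2); (1,3); (0,2); (5,3)];
 [:: (2,1); (5,4); (0,3); (4,3); (1,2)];
 [:: (2,1); (5,4); (1,2); (4,1); (5,1)];
 [:: (2,2); (0,0); (4,1); (1,4); (2,1)];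
 [:: (2,2); (0,1); (1,4); (3,2); (5,4)];
 [:: (2,2); (0,1); (5,0); (1,2); (2,0)];
 [:: (2,2); (1,0); (3,0); (0,0); (4,4)];
 [:: (2,2); (1,3); (5,2); (3,2); (2,0)];
 [:: (2,2); (3,0); (0,2); (4,1); (5,4)];
 [:: (2,2); (3,1); (1,4); (5,0); (4,1)];
 [:: (2,2); (3,1); (5,3); (1,1); (0,3)];
 [:: (2,2); (3,2); (1,0); (0,4); (3,1)];
 [:: (2,2); (3,2); (5,4); (4,0); (0,0)];
 [:: (2,2); (3,4); (0,3); (5,1); (4,1)];
 [:: (2,2); (3,4); (4,0); (1,3); (3,3)];
 [:: (2,2); (4,3); (0,1); (1,3); (2,0)];
 [:: (2,2); (4,3); (3,2); (1,2); (5,2)];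
 [:: (2,2); (4,3); (5,3); (1,0); (3,3)];
 [:: (2,2); (4,3); (5,4); (0,0); (2,0)];
 [:: (2,2); (4,4); (5,4); (0,3); (2,3)];
 [:: (2,2); (5,0); (0,4); (4,4); (1,3)];
 [:: (2,2); (5,0); (1,3); (4,2); (5,2)];
 [:: (2,2); (5,3); (1,4); (0,3); (5,4)];
 [:: (2,3); (0,1); (4,2); (1,0); (2,2)];
 [:: (2,3); (0,2); (1,0); (3,3); (5,0)];
 [:: (2,3); (0,2); (5,1); (1,3); (2,1)];
 [:: (2,3); (1,1); (3,1); (0,1); (4,0)];
 [:: (2,3); (1,4); (5,3); (3,3); (2,1)];
 [:: (2,3); (3,0); (0,4); (5,2); (4,2)];
 [:: (2,3); (3,0); (4,1); (1,4); (3,4)];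
 [:: (2,3); (3,1); (0,3); (4,2); (5,0)];
 [:: (2,3); (3,2); (1,0); (5,1); (4,2)];
 [:: (2,3); (3,2); (5,4); (1,2); (0,4)];
 [:: (2,3); (3,3); (1,1); (0,0); (3,2)];
 [:: (2,3); (3,3); (5,0); (4,1); (0,1)];
 [:: (2,3); (4,0); (5,0); (0,4); (2,4)];
 [:: (2,3); (4,4); (0,2); (1,4); (2,1)];
 [:: (2,3); (4,4); (3,3); (1,3); (5,3)];
 [:: (2,3); (4,4); (5,0); (0,1); (2,1)];
 [:: (2,3); (4,4); (5,4); (1,1); (3,4)];
 [:: (2,3); (5,1); (0,0); (4,0); (1,4)];
 [:: (2,3); (5,1); (1,4); (4,3); (5,3)];
 [:: (2,3); (5,4); (1,0); (0,4); (5,0)];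
 [:: (2,4); (0,2); (4,3); (1,1); (2,3)];
 [:: (2,4); (0,3); (1,1); (3,4); (5,1)];
 [:: (2,4); (0,3); (5,2); (1,4); (2,2)];
 [:: (2,4); (1,0); (5,4); (3,4); (2,2)];
 [:: (2,4); (1,2); (3,2); (0,2); (4,1)];
 [:: (2,4); (3,1); (0,0); (5,3); (4,3)];
 [:: (2,4); (3,1); (4,2); (1,0); (3,0)];
 [:: (2,4); (3,2); (0,4); (4,3); (5,1)];
 [:: (2,4); (3,3); (1,1); (5,2); (4,3)];
 [:: (2,4); (3,3); (5,0); (1,3); (0,0)];
 [:: (2,4); (3,4); (1,2); (0,1); (3,3)];
 [:: (2,4); (3,4); (5,1); (4,2); (0,2)];
 [:: (2,4); (4,0); (0,3); (1,0); (2,2)];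
 [:: (2,4); (4,0); (3,4); (1,4); (5,4)];
 [:: (2,4); (4,0); (5,0); (1,2); (3,0)];
 [:: (2,4); (4,0); (5,1); (0,2); (2,2)];
 [:: (2,4); (4,1); (5,1); (0,0); (2,0)];
 [:: (2,4); (5,0); (1,1); (0,0); (5,1)];
 [:: (2,4); (5,2); (0,1); (4,1); (1,0)];
 [:: (2,4); (5,2); (1,0); (4,4); (5,4)];
 [:: (3,0); (0,1); (1,4); (2,1); (3,3)];
 [:: (3,0); (0,1); (4,0); (2,0); (5,0)];
 [:: (3,0); (0,1); (5,1); (2,3); (4,1)];
 [:: (3,0); (0,1); (5,2); (1,3); (3,3)];
 [:: (3,0); (0,2); (5,2); (1,1); (3,1)];
 [:: (3,0); (1,3); (0,4); (2,2); (3,4)];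
 [:: (3,0); (1,4); (2,2); (4,0); (5,2)];
 [:: (3,0); (1,4); (5,3); (2,0); (3,3)];
 [:: (3,0); (2,1); (5,0); (4,0); (3,3)];
 [:: (3,0); (2,3); (4,3); (1,3); (0,2)];
 [:: (3,0); (4,0); (2,3); (1,2); (4,4)];
 [:: (3,0); (4,0); (5,2); (0,3); (1,3)];
 [:: (3,0); (4,2); (0,3); (2,1); (4,1)];
 [:: (3,0); (4,2); (1,1); (5,4); (0,4)];
 [:: (3,0); (4,3); (1,0); (0,4); (5,2)];
 [:: (3,0); (4,4); (2,2); (5,3); (0,4)];
 [:: (3,0); (4,4); (5,1); (2,4); (1,1)];
 [:: (3,0); (5,1); (2,2); (1,1); (5,2)];
 [:: (3,0); (5,3); (1,2); (0,2); (2,1)];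
 [:: (3,0); (5,3); (2,1); (0,0); (5,0)];
 [:: (3,1); (0,2); (1,0); (2,2); (3,4)];
 [:: (3,1); (0,2); (4,1); (2,1); (5,1)];
 [:: (3,1); (0,2); (5,2); (2,4); (4,2)];
 [:: (3,1); (0,2); (5,3); (1,4); (3,4)];
 [:: (3,1); (0,3); (5,3); (1,2); (3,2)];
 [:: (3,1); (1,0); (2,3); (4,1); (5,3)];
 [:: (3,1); (1,0); (5,4); (2,1); (3,4)];
 [:: (3,1); (1,4); (0,0); (2,3); (3,0)];
 [:: (3,1); (2,2); (5,1); (4,1); (3,4)];
 [:: (3,1); (2,4); (4,4); (1,4); (0,3)];
 [:: (3,1); (4,0); (2,3); (5,4); (0,0)];
 [:: (3,1); (4,0); (5,2); (2,0); (1,2)];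
 [:: (3,1); (4,1); (2,4); (1,3); (4,0)];
 [:: (3,1); (4,1); (5,3); (0,4); (1,4)];
 [:: (3,1); (4,3); (0,4); (2,2); (4,2)];
 [:: (3,1); (4,3); (1,2); (5,0); (0,0)];
 [:: (3,1); (4,4); (1,1); (0,0); (5,3)];
 [:: (3,1); (5,2); (2,3); (1,2); (5,3)];
 [:: (3,1); (5,4); (1,3); (0,3); (2,2)];
 [:: (3,1); (5,4); (2,2); (0,1); (5,1)];
 [:: (3,2); (0,3); (1,1); (2,3); (3,0)];
 [:: (3,2); (0,3); (4,2); (2,2); (5,2)];
 [:: (3,2); (0,3); (5,3); (2,0); (4,3)];
 [:: (3,2); (0,3); (5,4); (1,0); (3,0)];
 [:: (3,2); (0,4); (5,4); (1,3); (3,3)];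
 [:: (3,2); (1,0); (0,1); (2,4); (3,1)];
 [:: (3,2); (1,1); (2,4); (4,2); (5,4)];
 [:: (3,2); (1,1); (5,0); (2,2); (3,0)];
 [:: (3,2); (2,0); (4,0); (1,0); (0,4)];
 [:: (3,2); (2,3); (5,2); (4,2); (3,0)];
 [:: (3,2); (4,0); (1,2); (0,1); (5,4)];
 [:: (3,2); (4,1); (2,4); (5,0); (0,1)];
 [:: (3,2); (4,1); (5,3); (2,1); (1,3)];
 [:: (3,2); (4,2); (2,0); (1,4); (4,1)];
 [:: (3,2); (4,2); (5,4); (0,0); (1,0)];
 [:: (3,2); (4,4); (0,0); (2,3); (4,3)];
 [:: (3,2); (4,4); (1,3); (5,1); (0,1)];
 [:: (3,2); (5,0); (1,4); (0,4); (2,3)];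
 [:: (3,2); (5,0); (2,3); (0,2); (5,2)];
 [:: (3,2); (5,3); (2,4); (1,3); (5,4)];
 [:: (3,3); (0,0); (5,0); (1,4); (3,4)];
 [:: (3,3); (0,4); (1,2); (2,4); (3,1)];
 [:: (3,3); (0,4); (4,3); (2,3); (5,3)];
 [:: (3,3); (0,4); (5,0); (1,1); (3,1)];
 [:: (3,3); (0,4); (5,4); (2,1); (4,4)];
 [:: (3,3); (1,1); (0,2); (2,0); (3,2)];
 [:: (3,3); (1,2); (2,0); (4,3); (5,0)];
 [:: (3,3); (1,2); (5,1); (2,3); (3,1)];
 [:: (3,3); (2,1); (4,1); (1,1); (0,0)];
 [:: (3,3); (2,4); (5,3); (4,3); (3,1)];
 [:: (3,3); (4,0); (0,1); (2,4); (4,4)];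
 [:: (3,3); (4,0); (1,4); (5,2); (0,2)];
 [:: (3,3); (4,1); (1,3); (0,2); (5,0)];
 [:: (3,3); (4,2); (2,0); (5,1); (0,2)];
 [:: (3,3); (4,2); (5,4); (2,2); (1,4)];
 [:: (3,3); (4,3); (2,1); (1,0); (4,2)];
 [:: (3,3); (4,3); (5,0); (0,1); (1,1)];
 [:: (3,3); (5,1); (1,0); (0,0); (2,4)];
 [:: (3,3); (5,1); (2,4); (0,3); (5,3)];
 [:: (3,3); (5,4); (2,0); (1,4); (5,0)];
 [:: (3,4); (0,0); (1,3); (2,0); (3,2)];
 [:: (3,4); (0,0); (4,4); (2,4); (5,4)];
 [:: (3,4); (0,0); (5,0); (2,2); (4,0)];
 [:: (3,4); (0,0); (5,1); (1,2); (3,2)];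
 [:: (3,4); (0,1); (5,1); (1,0); (3,0)];
 [:: (3,4); (1,2); (0,3); (2,1); (3,3)];
 [:: (3,4); (1,3); (2,1); (4,4); (5,1)];
 [:: (3,4); (1,3); (5,2); (2,4); (3,2)];
 [:: (3,4); (2,0); (5,4); (4,4); (3,2)];
 [:: (3,4); (2,2); (4,2); (1,2); (0,1)];
 [:: (3,4); (4,1); (0,2); (2,0); (4,0)];
 [:: (3,4); (4,1); (1,0); (5,3); (0,3)];
 [:: (3,4); (4,2); (1,4); (0,3); (5,1)];
 [:: (3,4); (4,3); (2,1); (5,2); (0,3)];
 [:: (3,4); (4,3); (5,0); (2,3); (1,0)];
 [:: (3,4); (4,4); (2,2); (1,1); (4,3)];
 [:: (3,4); (4,4); (5,1); (0,2); (1,2)];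
 [:: (3,4); (5,0); (2,1); (1,0); (5,1)];
 [:: (3,4); (5,2); (1,1); (0,1); (2,0)];
 [:: (3,4); (5,2); (2,0); (0,4); (5,4)];
 [:: (4,0); (0,0); (3,3); (2,2); (0,4)];
 [:: (4,0); (0,0); (5,2); (1,3); (2,3)];
 [:: (4,0); (0,2); (1,3); (3,1); (0,1)];
 [:: (4,0); (0,2); (2,1); (5,4); (1,4)];
 [:: (4,0); (0,3); (2,0); (1,4); (5,2)];
 [:: (4,0); (0,4); (3,2); (5,3); (1,4)];
 [:: (4,0); (0,4); (5,1); (3,4); (2,1)];
 [:: (4,0); (1,1); (0,0); (3,0); (5,0)];
 [:: (4,0); (1,1); (2,4); (3,1); (4,3)];
 [:: (4,0); (1,1); (5,1); (3,3); (0,1)];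
 [:: (4,0); (1,1); (5,2); (2,3); (4,3)];
 [:: (4,0); (1,2); (5,2); (2,1); (4,1)];
 [:: (4,0); (2,3); (1,4); (3,2); (4,4)];
 [:: (4,0); (2,4); (3,2); (0,0); (5,2)];
 [:: (4,0); (2,4); (5,3); (3,0); (4,3)];
 [:: (4,0); (3,1); (5,0); (0,0); (4,3)];
 [:: (4,0); (3,3); (0,3); (2,3); (1,2)];
 [:: (4,0); (5,1); (3,2); (2,1); (5,2)];
 [:: (4,0); (5,3); (2,2); (1,2); (3,1)];
 [:: (4,0); (5,3); (3,1); (1,0); (5,0)];
 [:: (4,1); (0,0); (3,3); (5,4); (1,0)];
 [:: (4,1); (0,0); (5,2); (3,0); (2,2)];
 [:: (4,1); (0,1); (3,4); (2,3); (0,0)];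
 [:: (4,1); (0,1); (5,3); (1,4); (2,4)];
 [:: (4,1); (0,3); (1,4); (3,2); (0,2)];
 [:: (4,1); (0,3); (2,2); (5,0); (1,0)];
 [:: (4,1); (0,4); (2,1); (1,0); (5,3)];
 [:: (4,1); (1,2); (0,1); (3,1); (5,1)];
 [:: (4,1); (1,2); (2,0); (3,2); (4,4)];
 [:: (4,1); (1,2); (5,2); (3,4); (0,2)];
 [:: (4,1); (1,2); (5,3); (2,4); (4,4)];
 [:: (4,1); (1,3); (5,3); (2,2); (4,2)];
 [:: (4,1); (2,0); (3,3); (0,1); (5,3)];
 [:: (4,1); (2,0); (5,4); (3,1); (4,4)];
 [:: (4,1); (2,4); (1,0); (3,3); (4,0)];
 [:: (4,1); (3,2); (5,1); (0,1); (4,4)];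
 [:: (4,1); (3,4); (0,4); (2,4); (1,3)];
 [:: (4,1); (5,2); (3,3); (2,2); (5,3)];
 [:: (4,1); (5,4); (2,3); (1,3); (3,2)];
 [:: (4,1); (5,4); (3,2); (1,1); (5,1)];
 [:: (4,2); (0,0); (2,2); (1,1); (5,4)];
 [:: (4,2); (0,1); (3,4); (5,0); (1,1)];
 [:: (4,2); (0,1); (5,3); (3,1); (2,3)];
 [:: (4,2); (0,2); (3,0); (2,4); (0,1)];
 [:: (4,2); (0,2); (5,4); (1,0); (2,0)];
 [:: (4,2); (0,4); (1,0); (3,3); (0,3)];
 [:: (4,2); (0,4); (2,3); (5,1); (1,1)];
 [:: (4,2); (1,3); (0,2); (3,2); (5,2)];
 [:: (4,2); (1,3); (2,1); (3,3); (4,0)];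
 [:: (4,2); (1,3); (5,3); (3,0); (0,3)];
 [:: (4,2); (1,3); (5,4); (2,0); (4,0)];
 [:: (4,2); (1,4); (5,4); (2,3); (4,3)];
 [:: (4,2); (2,0); (1,1); (3,4); (4,1)];
 [:: (4,2); (2,1); (3,4); (0,2); (5,4)];
 [:: (4,2); (2,1); (5,0); (3,2); (4,0)];
 [:: (4,2); (3,0); (0,0); (2,0); (1,4)];
 [:: (4,2); (3,3); (5,2); (0,2); (4,0)];
 [:: (4,2); (5,0); (2,4); (1,4); (3,3)];
 [:: (4,2); (5,0); (3,3); (1,2); (5,2)];
 [:: (4,2); (5,3); (3,4); (2,3); (5,4)];
 [:: (4,3); (0,0); (1,1); (3,4); (0,4)];
 [:: (4,3); (0,0); (2,4); (5,2); (1,2)];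
 [:: (4,3); (0,1); (2,3); (1,2); (5,0)];
 [:: (4,3); (0,2); (3,0); (5,1); (1,2)];
 [:: (4,3); (0,2); (5,4); (3,2); (2,4)];
 [:: (4,3); (0,3); (3,1); (2,0); (0,2)];
 [:: (4,3); (0,3); (5,0); (1,1); (2,1)];
 [:: (4,3); (1,0); (5,0); (2,4); (4,4)];
 [:: (4,3); (1,4); (0,3); (3,3); (5,3)];
 [:: (4,3); (1,4); (2,2); (3,4); (4,1)];
 [:: (4,3); (1,4); (5,0); (2,1); (4,1)];
 [:: (4,3); (1,4); (5,4); (3,1); (0,4)];
 [:: (4,3); (2,1); (1,2); (3,0); (4,2)];
 [:: (4,3); (2,2); (3,0); (0,3); (5,0)];
 [:: (4,3); (2,2); (5,1); (3,3); (4,1)];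
 [:: (4,3); (3,1); (0,1); (2,1); (1,0)];
 [:: (4,3); (3,4); (5,3); (0,3); (4,1)];
 [:: (4,3); (5,1); (2,0); (1,0); (3,4)];
 [:: (4,3); (5,1); (3,4); (1,3); (5,3)];
 [:: (4,3); (5,4); (3,0); (2,4); (5,0)];
 [:: (4,4); (0,1); (1,2); (3,0); (0,0)];
 [:: (4,4); (0,1); (2,0); (5,3); (1,3)];
 [:: (4,4); (0,2); (2,4); (1,3); (5,1)];
 [:: (4,4); (0,3); (3,1); (5,2); (1,3)];
 [:: (4,4); (0,3); (5,0); (3,3); (2,0)];
 [:: (4,4); (0,4); (3,2); (2,1); (0,3)];
 [:: (4,4); (0,4); (5,1); (1,2); (2,2)];
 [:: (4,4); (1,0); (0,4); (3,4); (5,4)];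
 [:: (4,4); (1,0); (2,3); (3,0); (4,2)];
 [:: (4,4); (1,0); (5,0); (3,2); (0,0)];
 [:: (4,4); (1,0); (5,1); (2,2); (4,2)];
 [:: (4,4); (1,1); (5,1); (2,0); (4,0)];
 [:: (4,4); (2,2); (1,3); (3,1); (4,3)];
 [:: (4,4); (2,3); (3,1); (0,4); (5,1)];
 [:: (4,4); (2,3); (5,2); (3,4); (4,2)];
 [:: (4,4); (3,0); (5,4); (0,4); (4,2)];
 [:: (4,4); (3,2); (0,2); (2,2); (1,1)];
 [:: (4,4); (5,0); (3,1); (2,0); (5,1)];
 [:: (4,4); (5,2); (2,1); (1,1); (3,0)];
 [:: (4,4); (5,2); (3,0); (1,4); (5,4)]].

Lemma chk_d56 : checker 5 4 d56.
Proof. by vm_compute. Qed.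

Definition d105 : seq (seq pt) :=
[:: [:: (0,0); (1,0); (3,1); (4,5); (0,5)];
 [:: (0,0); (1,0); (3,4); (2,6); (0,9)];
 [:: (0,0); (1,0); (3,7); (2,3); (4,4)];
 [:: (0,0); (1,1); (2,6); (4,1); (0,9)];
 [:: (0,0); (1,1); (2,8); (4,9); (0,6)];
 [:: (0,0); (1,2); (2,5); (3,1); (4,5)];
 [:: (0,0); (1,3); (2,1); (3,4); (4,4)];
 [:: (0,0); (1,3); (2,5); (4,9); (0,9)];
 [:: (0,0); (1,3); (4,6); (3,5); (2,7)];
 [:: (0,0); (1,3); (4,7); (3,1); (2,3)];
 [:: (0,0); (1,4); (2,6); (3,5); (4,2)];
 [:: (0,0); (1,5); (2,1); (4,4); (0,9)];
 [:: (0,0); (1,5); (2,8); (3,5); (4,9)];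
 [:: (0,0); (1,5); (2,9); (4,7); (0,8)];
 [:: (0,0); (1,5); (4,8); (3,1); (2,9)];
 [:: (0,0); (1,6); (2,3); (4,3); (0,6)];
 [:: (0,0); (1,6); (4,8); (3,8); (1,8)];
 [:: (0,0); (1,7); (2,4); (3,3); (4,3)];
 [:: (0,0); (1,7); (3,5); (2,5); (1,8)];
 [:: (0,0); (1,7); (4,5); (3,6); (0,4)];
 [:: (0,0); (1,8); (4,1); (3,7); (1,7)];
 [:: (0,0); (1,9); (3,7); (2,5); (0,8)];
 [:: (0,0); (1,9); (4,5); (3,0); (0,3)];
 [:: (0,0); (2,0); (3,1); (1,7); (0,4)];
 [:: (0,0); (2,2); (3,7); (4,9); (2,5)];
 [:: (0,0); (2,3); (1,8); (4,2); (3,1)];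
 [:: (0,0); (2,3); (4,7); (1,9); (3,5)];
 [:: (0,0); (2,5); (1,8); (3,6); (4,5)];
 [:: (0,0); (2,6); (1,6); (3,0); (4,5)];
 [:: (0,0); (2,7); (4,8); (3,7); (0,6)];
 [:: (0,0); (2,8); (1,4); (3,6); (4,9)];
 [:: (0,0); (3,0); (2,4); (4,1); (0,7)];
 [:: (0,0); (3,2); (2,0); (4,2); (0,4)];
 [:: (0,0); (3,3); (4,3); (1,5); (0,1)];
 [:: (0,0); (3,4); (1,1); (4,6); (0,6)];
 [:: (0,0); (3,9); (1,8); (4,8); (0,6)];
 [:: (0,0); (4,0); (3,9); (1,0); (0,6)];
 [:: (0,0); (4,1); (3,3); (1,3); (0,1)];
 [:: (0,0); (4,4); (1,6); (2,5); (0,6)];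
 [:: (0,0); (4,5); (2,7); (1,1); (0,7)];
 [:: (0,1); (1,0); (3,8); (2,6); (0,9)];
 [:: (0,1); (1,0); (4,6); (3,1); (0,4)];
 [:: (0,1); (1,1); (3,2); (4,6); (0,6)];
 [:: (0,1); (1,1); (3,5); (2,7); (0,0)];
 [:: (0,1); (1,1); (3,8); (2,4); (4,5)];
 [:: (0,1); (1,2); (2,7); (4,2); (0,0)];
 [:: (0,1); (1,2); (2,9); (4,0); (0,7)];
 [:: (0,1); (1,3); (2,6); (3,2); (4,6)];
 [:: (0,1); (1,4); (2,2); (3,5); (4,5)];
 [:: (0,1); (1,4); (2,6); (4,0); (0,0)];
 [:: (0,1); (1,4); (4,7); (3,6); (2,8)];
 [:: (0,1); (1,4); (4,8); (3,2); (2,4)];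
 [:: (0,1); (1,5); (2,7); (3,6); (4,3)];
 [:: (0,1); (1,6); (2,0); (4,8); (0,9)];
 [:: (0,1); (1,6); (2,2); (4,5); (0,0)];
 [:: (0,1); (1,6); (2,9); (3,6); (4,0)];
 [:: (0,1); (1,6); (4,9); (3,2); (2,0)];
 [:: (0,1); (1,7); (2,4); (4,4); (0,7)];
 [:: (0,1); (1,7); (4,9); (3,9); (1,9)];
 [:: (0,1); (1,8); (2,5); (3,4); (4,4)];
 [:: (0,1); (1,8); (3,6); (2,6); (1,9)];
 [:: (0,1); (1,8); (4,6); (3,7); (0,5)];
 [:: (0,1); (1,9); (4,2); (3,8); (1,8)];
 [:: (0,1); (2,1); (3,2); (1,8); (0,5)];
 [:: (0,1); (2,3); (3,8); (4,0); (2,6)];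
 [:: (0,1); (2,4); (1,9); (4,3); (3,2)];
 [:: (0,1); (2,4); (4,8); (1,0); (3,6)];
 [:: (0,1); (2,6); (1,9); (3,7); (4,6)];
 [:: (0,1); (2,7); (1,7); (3,1); (4,6)];
 [:: (0,1); (2,8); (4,9); (3,8); (0,7)];
 [:: (0,1); (2,9); (1,5); (3,7); (4,0)];
 [:: (0,1); (3,0); (1,9); (4,9); (0,7)];
 [:: (0,1); (3,1); (2,5); (4,2); (0,8)];
 [:: (0,1); (3,3); (2,1); (4,3); (0,5)];
 [:: (0,1); (3,4); (4,4); (1,6); (0,2)];
 [:: (0,1); (3,5); (1,2); (4,7); (0,7)];
 [:: (0,1); (4,1); (3,0); (1,1); (0,7)];
 [:: (0,1); (4,2); (3,4); (1,4); (0,2)];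
 [:: (0,1); (4,5); (1,7); (2,6); (0,7)];
 [:: (0,1); (4,6); (2,8); (1,2); (0,8)];
 [:: (0,2); (1,0); (4,3); (3,9); (1,9)];
 [:: (0,2); (1,1); (3,9); (2,7); (0,0)];
 [:: (0,2); (1,1); (4,7); (3,2); (0,5)];
 [:: (0,2); (1,2); (3,3); (4,7); (0,7)];
 [:: (0,2); (1,2); (3,6); (2,8); (0,1)];
 [:: (0,2); (1,2); (3,9); (2,5); (4,6)];
 [:: (0,2); (1,3); (2,0); (4,1); (0,8)];
 [:: (0,2); (1,3); (2,8); (4,3); (0,1)];
 [:: (0,2); (1,4); (2,7); (3,3); (4,7)];
 [:: (0,2); (1,5); (2,3); (3,6); (4,6)];
 [:: (0,2); (1,5); (2,7); (4,1); (0,1)];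
 [:: (0,2); (1,5); (4,8); (3,7); (2,9)];
 [:: (0,2); (1,5); (4,9); (3,3); (2,5)];
 [:: (0,2); (1,6); (2,8); (3,7); (4,4)];
 [:: (0,2); (1,7); (2,0); (3,7); (4,1)];
 [:: (0,2); (1,7); (2,1); (4,9); (0,0)];
 [:: (0,2); (1,7); (2,3); (4,6); (0,1)];
 [:: (0,2); (1,7); (4,0); (3,3); (2,1)];
 [:: (0,2); (1,8); (2,5); (4,5); (0,8)];
 [:: (0,2); (1,8); (4,0); (3,0); (1,0)];
 [:: (0,2); (1,9); (2,6); (3,5); (4,5)];
 [:: (0,2); (1,9); (3,7); (2,7); (1,0)];
 [:: (0,2); (1,9); (4,7); (3,8); (0,6)];
 [:: (0,2); (2,0); (1,6); (3,8); (4,1)];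
 [:: (0,2); (2,2); (3,3); (1,9); (0,6)];
 [:: (0,2); (2,4); (3,9); (4,1); (2,7)];
 [:: (0,2); (2,5); (1,0); (4,4); (3,3)];
 [:: (0,2); (2,5); (4,9); (1,1); (3,7)];
 [:: (0,2); (2,7); (1,0); (3,8); (4,7)];
 [:: (0,2); (2,8); (1,8); (3,2); (4,7)];
 [:: (0,2); (2,9); (4,0); (3,9); (0,8)];
 [:: (0,2); (3,1); (1,0); (4,0); (0,8)];
 [:: (0,2); (3,2); (2,6); (4,3); (0,9)];
 [:: (0,2); (3,4); (2,2); (4,4); (0,6)];
 [:: (0,2); (3,5); (4,5); (1,7); (0,3)];
 [:: (0,2); (3,6); (1,3); (4,8); (0,8)];
 [:: (0,2); (4,2); (3,1); (1,2); (0,8)];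
 [:: (0,2); (4,3); (3,5); (1,5); (0,3)];
 [:: (0,2); (4,6); (1,8); (2,7); (0,8)];
 [:: (0,2); (4,7); (2,9); (1,3); (0,9)];
 [:: (0,3); (1,0); (2,7); (3,6); (4,6)];
 [:: (0,3); (1,0); (3,8); (2,8); (1,1)];
 [:: (0,3); (1,0); (4,8); (3,9); (0,7)];
 [:: (0,3); (1,1); (4,4); (3,0); (1,0)];
 [:: (0,3); (1,2); (3,0); (2,8); (0,1)];
 [:: (0,3); (1,2); (4,8); (3,3); (0,6)];
 [:: (0,3); (1,3); (3,0); (2,6); (4,7)];
 [:: (0,3); (1,3); (3,4); (4,8); (0,8)];
 [:: (0,3); (1,3); (3,7); (2,9); (0,2)];
 [:: (0,3); (1,4); (2,1); (4,2); (0,9)];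
 [:: (0,3); (1,4); (2,9); (4,4); (0,2)];
 [:: (0,3); (1,5); (2,8); (3,4); (4,8)];
 [:: (0,3); (1,6); (2,4); (3,7); (4,7)];
 [:: (0,3); (1,6); (2,8); (4,2); (0,2)];
 [:: (0,3); (1,6); (4,0); (3,4); (2,6)];
 [:: (0,3); (1,6); (4,9); (3,8); (2,0)];
 [:: (0,3); (1,7); (2,9); (3,8); (4,5)];
 [:: (0,3); (1,8); (2,1); (3,8); (4,2)];
 [:: (0,3); (1,8); (2,2); (4,0); (0,1)];
 [:: (0,3); (1,8); (2,4); (4,7); (0,2)];
 [:: (0,3); (1,8); (4,1); (3,4); (2,2)];
 [:: (0,3); (1,9); (2,6); (4,6); (0,9)];
 [:: (0,3); (1,9); (4,1); (3,1); (1,1)];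
 [:: (0,3); (2,0); (4,1); (3,0); (0,9)];
 [:: (0,3); (2,1); (1,7); (3,9); (4,2)];
 [:: (0,3); (2,3); (3,4); (1,0); (0,7)];
 [:: (0,3); (2,5); (3,0); (4,2); (2,8)];
 [:: (0,3); (2,6); (1,1); (4,5); (3,4)];
 [:: (0,3); (2,6); (4,0); (1,2); (3,8)];
 [:: (0,3); (2,8); (1,1); (3,9); (4,8)];
 [:: (0,3); (2,9); (1,9); (3,3); (4,8)];
 [:: (0,3); (3,2); (1,1); (4,1); (0,9)];
 [:: (0,3); (3,3); (2,7); (4,4); (0,0)];
 [:: (0,3); (3,5); (2,3); (4,5); (0,7)];
 [:: (0,3); (3,6); (4,6); (1,8); (0,4)];
 [:: (0,3); (3,7); (1,4); (4,9); (0,9)];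
 [:: (0,3); (4,3); (3,2); (1,3); (0,9)];
 [:: (0,3); (4,4); (3,6); (1,6); (0,4)];
 [:: (0,3); (4,7); (1,9); (2,8); (0,9)];
 [:: (0,3); (4,8); (2,0); (1,4); (0,0)];
 [:: (0,4); (1,0); (2,7); (4,7); (0,0)];
 [:: (0,4); (1,0); (4,2); (3,2); (1,2)];
 [:: (0,4); (1,1); (2,8); (3,7); (4,7)];
 [:: (0,4); (1,1); (3,9); (2,9); (1,2)];
 [:: (0,4); (1,1); (4,9); (3,0); (0,8)];
 [:: (0,4); (1,2); (4,5); (3,1); (1,1)];
 [:: (0,4); (1,3); (3,1); (2,9); (0,2)];
 [:: (0,4); (1,3); (4,9); (3,4); (0,7)];
 [:: (0,4); (1,4); (3,1); (2,7); (4,8)];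
 [:: (0,4); (1,4); (3,5); (4,9); (0,9)];
 [:: (0,4); (1,4); (3,8); (2,0); (0,3)];
 [:: (0,4); (1,5); (2,0); (4,5); (0,3)];
 [:: (0,4); (1,5); (2,2); (4,3); (0,0)];
 [:: (0,4); (1,6); (2,9); (3,5); (4,9)];
 [:: (0,4); (1,7); (2,5); (3,8); (4,8)];
 [:: (0,4); (1,7); (2,9); (4,3); (0,3)];
 [:: (0,4); (1,7); (4,0); (3,9); (2,1)];
 [:: (0,4); (1,7); (4,1); (3,5); (2,7)];
 [:: (0,4); (1,8); (2,0); (3,9); (4,6)];
 [:: (0,4); (1,9); (2,2); (3,9); (4,3)];
 [:: (0,4); (1,9); (2,3); (4,1); (0,2)];
 [:: (0,4); (1,9); (2,5); (4,8); (0,3)];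
 [:: (0,4); (1,9); (4,2); (3,5); (2,3)];
 [:: (0,4); (2,0); (1,0); (3,4); (4,9)];
 [:: (0,4); (2,1); (4,2); (3,1); (0,0)];
 [:: (0,4); (2,2); (1,8); (3,0); (4,3)];
 [:: (0,4); (2,4); (3,5); (1,1); (0,8)];
 [:: (0,4); (2,6); (3,1); (4,3); (2,9)];
 [:: (0,4); (2,7); (1,2); (4,6); (3,5)];
 [:: (0,4); (2,7); (4,1); (1,3); (3,9)];
 [:: (0,4); (2,9); (1,2); (3,0); (4,9)];
 [:: (0,4); (3,3); (1,2); (4,2); (0,0)];
 [:: (0,4); (3,4); (2,8); (4,5); (0,1)];
 [:: (0,4); (3,6); (2,4); (4,6); (0,8)];
 [:: (0,4); (3,7); (4,7); (1,9); (0,5)];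
 [:: (0,4); (3,8); (1,5); (4,0); (0,0)];
 [:: (0,4); (4,4); (3,3); (1,4); (0,0)];
 [:: (0,4); (4,5); (3,7); (1,7); (0,5)];
 [:: (0,4); (4,8); (1,0); (2,9); (0,0)];
 [:: (0,4); (4,9); (2,1); (1,5); (0,1)];
 [:: (0,5); (1,0); (2,3); (3,0); (4,4)];
 [:: (0,5); (1,0); (2,4); (4,2); (0,3)];
 [:: (0,5); (1,0); (2,6); (4,9); (0,4)];
 [:: (0,5); (1,0); (4,3); (3,6); (2,4)];
 [:: (0,5); (1,1); (2,8); (4,8); (0,1)];
 [:: (0,5); (1,1); (4,3); (3,3); (1,3)];
 [:: (0,5); (1,2); (2,9); (3,8); (4,8)];
 [:: (0,5); (1,2); (3,0); (2,0); (1,3)];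
 [:: (0,5); (1,2); (4,0); (3,1); (0,9)];
 [:: (0,5); (1,3); (4,6); (3,2); (1,2)];
 [:: (0,5); (1,4); (3,2); (2,0); (0,3)];
 [:: (0,5); (1,4); (4,0); (3,5); (0,8)];
 [:: (0,5); (1,5); (3,2); (2,8); (4,9)];
 [:: (0,5); (1,5); (3,6); (4,0); (0,0)];
 [:: (0,5); (1,5); (3,9); (2,1); (0,4)];
 [:: (0,5); (1,6); (2,1); (4,6); (0,4)];
 [:: (0,5); (1,6); (2,3); (4,4); (0,1)];
 [:: (0,5); (1,7); (2,0); (3,6); (4,0)];
 [:: (0,5); (1,8); (2,0); (4,4); (0,4)];
 [:: (0,5); (1,8); (2,6); (3,9); (4,9)];
 [:: (0,5); (1,8); (4,1); (3,0); (2,2)];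
 [:: (0,5); (1,8); (4,2); (3,6); (2,8)];
 [:: (0,5); (1,9); (2,1); (3,0); (4,7)];
 [:: (0,5); (2,0); (1,3); (3,1); (4,0)];
 [:: (0,5); (2,1); (1,1); (3,5); (4,0)];
 [:: (0,5); (2,2); (4,3); (3,2); (0,1)];
 [:: (0,5); (2,3); (1,9); (3,1); (4,4)];
 [:: (0,5); (2,5); (3,6); (1,2); (0,9)];
 [:: (0,5); (2,7); (3,2); (4,4); (2,0)];
 [:: (0,5); (2,8); (1,3); (4,7); (3,6)];
 [:: (0,5); (2,8); (4,2); (1,4); (3,0)];
 [:: (0,5); (3,4); (1,3); (4,3); (0,1)];
 [:: (0,5); (3,5); (2,9); (4,6); (0,2)];
 [:: (0,5); (3,7); (2,5); (4,7); (0,9)];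
 [:: (0,5); (3,8); (4,8); (1,0); (0,6)];
 [:: (0,5); (3,9); (1,6); (4,1); (0,1)];
 [:: (0,5); (4,0); (2,2); (1,6); (0,2)];
 [:: (0,5); (4,5); (3,4); (1,5); (0,1)];
 [:: (0,5); (4,6); (3,8); (1,8); (0,6)];
 [:: (0,5); (4,9); (1,1); (2,0); (0,1)];
 [:: (0,6); (1,0); (2,2); (3,1); (4,8)];
 [:: (0,6); (1,1); (2,4); (3,1); (4,5)];
 [:: (0,6); (1,1); (2,5); (4,3); (0,4)];
 [:: (0,6); (1,1); (2,7); (4,0); (0,5)];
 [:: (0,6); (1,1); (4,4); (3,7); (2,5)];
 [:: (0,6); (1,2); (2,9); (4,9); (0,2)];
 [:: (0,6); (1,2); (4,4); (3,4); (1,4)];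
 [:: (0,6); (1,3); (2,0); (3,9); (4,9)];
 [:: (0,6); (1,3); (3,1); (2,1); (1,4)];
 [:: (0,6); (1,3); (4,1); (3,2); (0,0)];
 [:: (0,6); (1,4); (4,7); (3,3); (1,3)];
 [:: (0,6); (1,5); (3,3); (2,1); (0,4)];
 [:: (0,6); (1,5); (4,1); (3,6); (0,9)];
 [:: (0,6); (1,6); (3,0); (2,2); (0,5)];
 [:: (0,6); (1,6); (3,3); (2,9); (4,0)];
 [:: (0,6); (1,6); (3,7); (4,1); (0,1)];
 [:: (0,6); (1,7); (2,2); (4,7); (0,5)];
 [:: (0,6); (1,7); (2,4); (4,5); (0,2)];
 [:: (0,6); (1,8); (2,1); (3,7); (4,1)];
 [:: (0,6); (1,9); (2,1); (4,5); (0,5)];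
 [:: (0,6); (1,9); (2,7); (3,0); (4,0)];
 [:: (0,6); (1,9); (4,2); (3,1); (2,3)];
 [:: (0,6); (1,9); (4,3); (3,7); (2,9)];
 [:: (0,6); (2,1); (1,4); (3,2); (4,1)];
 [:: (0,6); (2,2); (1,2); (3,6); (4,1)];
 [:: (0,6); (2,3); (4,4); (3,3); (0,2)];
 [:: (0,6); (2,4); (1,0); (3,2); (4,5)];
 [:: (0,6); (2,6); (3,7); (1,3); (0,0)];
 [:: (0,6); (2,8); (3,3); (4,5); (2,1)];
 [:: (0,6); (2,9); (1,4); (4,8); (3,7)];
 [:: (0,6); (2,9); (4,3); (1,5); (3,1)];
 [:: (0,6); (3,0); (1,7); (4,2); (0,2)];
 [:: (0,6); (3,5); (1,4); (4,4); (0,2)];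
 [:: (0,6); (3,6); (2,0); (4,7); (0,3)];
 [:: (0,6); (3,8); (2,6); (4,8); (0,0)];
 [:: (0,6); (3,9); (4,9); (1,1); (0,7)];
 [:: (0,6); (4,0); (1,2); (2,1); (0,2)];
 [:: (0,6); (4,1); (2,3); (1,7); (0,3)];
 [:: (0,6); (4,6); (3,5); (1,6); (0,2)];
 [:: (0,6); (4,7); (3,9); (1,9); (0,7)];
 [:: (0,7); (1,0); (2,2); (4,6); (0,6)];
 [:: (0,7); (1,0); (2,8); (3,1); (4,1)];
 [:: (0,7); (1,0); (4,3); (3,2); (2,4)];
 [:: (0,7); (1,0); (4,4); (3,8); (2,0)];
 [:: (0,7); (1,1); (2,3); (3,2); (4,9)];
 [:: (0,7); (1,2); (2,5); (3,2); (4,6)];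
 [:: (0,7); (1,2); (2,6); (4,4); (0,5)];
 [:: (0,7); (1,2); (2,8); (4,1); (0,6)];
 [:: (0,7); (1,2); (4,5); (3,8); (2,6)];
 [:: (0,7); (1,3); (2,0); (4,0); (0,3)];
 [:: (0,7); (1,3); (4,5); (3,5); (1,5)];
 [:: (0,7); (1,4); (2,1); (3,0); (4,0)];
 [:: (0,7); (1,4); (3,2); (2,2); (1,5)];
 [:: (0,7); (1,4); (4,2); (3,3); (0,1)];
 [:: (0,7); (1,5); (4,8); (3,4); (1,4)];
 [:: (0,7); (1,6); (3,4); (2,2); (0,5)];
 [:: (0,7); (1,6); (4,2); (3,7); (0,0)];
 [:: (0,7); (1,7); (3,1); (2,3); (0,6)];
 [:: (0,7); (1,7); (3,4); (2,0); (4,1)];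
 [:: (0,7); (1,7); (3,8); (4,2); (0,2)];
 [:: (0,7); (1,8); (2,3); (4,8); (0,6)];
 [:: (0,7); (1,8); (2,5); (4,6); (0,3)];
 [:: (0,7); (1,9); (2,2); (3,8); (4,2)];
 [:: (0,7); (2,0); (1,5); (4,9); (3,8)];
 [:: (0,7); (2,0); (4,4); (1,6); (3,2)];
 [:: (0,7); (2,2); (1,5); (3,3); (4,2)];
 [:: (0,7); (2,3); (1,3); (3,7); (4,2)];
 [:: (0,7); (2,4); (4,5); (3,4); (0,3)];
 [:: (0,7); (2,5); (1,1); (3,3); (4,6)];
 [:: (0,7); (2,7); (3,8); (1,4); (0,1)];
 [:: (0,7); (2,9); (3,4); (4,6); (2,2)];
 [:: (0,7); (3,0); (4,0); (1,2); (0,8)];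
 [:: (0,7); (3,1); (1,8); (4,3); (0,3)];
 [:: (0,7); (3,6); (1,5); (4,5); (0,3)];
 [:: (0,7); (3,7); (2,1); (4,8); (0,4)];
 [:: (0,7); (3,9); (2,7); (4,9); (0,1)];
 [:: (0,7); (4,1); (1,3); (2,2); (0,3)];
 [:: (0,7); (4,2); (2,4); (1,8); (0,4)];
 [:: (0,7); (4,7); (3,6); (1,7); (0,3)];
 [:: (0,7); (4,8); (3,0); (1,0); (0,8)];
 [:: (0,8); (1,0); (2,3); (3,9); (4,3)];
 [:: (0,8); (1,1); (2,3); (4,7); (0,7)];
 [:: (0,8); (1,1); (2,9); (3,2); (4,2)];
 [:: (0,8); (1,1); (4,4); (3,3); (2,5)];
 [:: (0,8); (1,1); (4,5); (3,9); (2,1)];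
 [:: (0,8); (1,2); (2,4); (3,3); (4,0)];
 [:: (0,8); (1,3); (2,6); (3,3); (4,7)];
 [:: (0,8); (1,3); (2,7); (4,5); (0,6)];
 [:: (0,8); (1,3); (2,9); (4,2); (0,7)];
 [:: (0,8); (1,3); (4,6); (3,9); (2,7)];
 [:: (0,8); (1,4); (2,1); (4,1); (0,4)];
 [:: (0,8); (1,4); (4,6); (3,6); (1,6)];
 [:: (0,8); (1,5); (2,2); (3,1); (4,1)];
 [:: (0,8); (1,5); (3,3); (2,3); (1,6)];
 [:: (0,8); (1,5); (4,3); (3,4); (0,2)];
 [:: (0,8); (1,6); (4,9); (3,5); (1,5)];
 [:: (0,8); (1,7); (3,5); (2,3); (0,6)];
 [:: (0,8); (1,7); (4,3); (3,8); (0,1)];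
 [:: (0,8); (1,8); (3,2); (2,4); (0,7)];
 [:: (0,8); (1,8); (3,5); (2,1); (4,2)];
 [:: (0,8); (1,8); (3,9); (4,3); (0,3)];
 [:: (0,8); (1,9); (2,4); (4,9); (0,7)];
 [:: (0,8); (1,9); (2,6); (4,7); (0,4)];
 [:: (0,8); (2,0); (3,5); (4,7); (2,3)];
 [:: (0,8); (2,1); (1,6); (4,0); (3,9)];
 [:: (0,8); (2,1); (4,5); (1,7); (3,3)];
 [:: (0,8); (2,3); (1,6); (3,4); (4,3)];
 [:: (0,8); (2,4); (1,4); (3,8); (4,3)];
 [:: (0,8); (2,5); (4,6); (3,5); (0,4)];
 [:: (0,8); (2,6); (1,2); (3,4); (4,7)];
 [:: (0,8); (2,8); (3,9); (1,5); (0,2)];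
 [:: (0,8); (3,0); (2,8); (4,0); (0,2)];
 [:: (0,8); (3,1); (4,1); (1,3); (0,9)];
 [:: (0,8); (3,2); (1,9); (4,4); (0,4)];
 [:: (0,8); (3,7); (1,6); (4,6); (0,4)];
 [:: (0,8); (3,8); (2,2); (4,9); (0,5)];
 [:: (0,8); (4,2); (1,4); (2,3); (0,4)];
 [:: (0,8); (4,3); (2,5); (1,9); (0,5)];
 [:: (0,8); (4,8); (3,7); (1,8); (0,4)];
 [:: (0,8); (4,9); (3,1); (1,1); (0,9)];
 [:: (0,9); (1,0); (2,5); (4,0); (0,8)];
 [:: (0,9); (1,0); (2,7); (4,8); (0,5)];
 [:: (0,9); (1,1); (2,4); (3,0); (4,4)];
 [:: (0,9); (1,2); (2,0); (3,3); (4,3)];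
 [:: (0,9); (1,2); (2,4); (4,8); (0,8)];
 [:: (0,9); (1,2); (4,5); (3,4); (2,6)];
 [:: (0,9); (1,2); (4,6); (3,0); (2,2)];
 [:: (0,9); (1,3); (2,5); (3,4); (4,1)];
 [:: (0,9); (1,4); (2,0); (4,3); (0,8)];
 [:: (0,9); (1,4); (2,7); (3,4); (4,8)];
 [:: (0,9); (1,4); (2,8); (4,6); (0,7)];
 [:: (0,9); (1,4); (4,7); (3,0); (2,8)];
 [:: (0,9); (1,5); (2,2); (4,2); (0,5)];
 [:: (0,9); (1,5); (4,7); (3,7); (1,7)];
 [:: (0,9); (1,6); (2,3); (3,2); (4,2)];
 [:: (0,9); (1,6); (3,4); (2,4); (1,7)];
 [:: (0,9); (1,6); (4,4); (3,5); (0,3)];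
 [:: (0,9); (1,7); (4,0); (3,6); (1,6)];
 [:: (0,9); (1,8); (3,6); (2,4); (0,7)];
 [:: (0,9); (1,8); (4,4); (3,9); (0,2)];
 [:: (0,9); (1,9); (3,0); (4,4); (0,4)];
 [:: (0,9); (1,9); (3,3); (2,5); (0,8)];
 [:: (0,9); (1,9); (3,6); (2,2); (4,3)];
 [:: (0,9); (2,1); (3,6); (4,8); (2,4)];
 [:: (0,9); (2,2); (1,7); (4,1); (3,0)];
 [:: (0,9); (2,2); (4,6); (1,8); (3,4)];
 [:: (0,9); (2,4); (1,7); (3,5); (4,4)];
 [:: (0,9); (2,5); (1,5); (3,9); (4,4)];
 [:: (0,9); (2,6); (4,7); (3,6); (0,5)];
 [:: (0,9); (2,7); (1,3); (3,5); (4,8)];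
 [:: (0,9); (2,9); (3,0); (1,6); (0,3)];
 [:: (0,9); (3,1); (2,9); (4,1); (0,3)];
 [:: (0,9); (3,2); (4,2); (1,4); (0,0)];
 [:: (0,9); (3,3); (1,0); (4,5); (0,5)];
 [:: (0,9); (3,8); (1,7); (4,7); (0,5)];
 [:: (0,9); (3,9); (2,3); (4,0); (0,6)];
 [:: (0,9); (4,0); (3,2); (1,2); (0,0)];
 [:: (0,9); (4,3); (1,5); (2,4); (0,5)];
 [:: (0,9); (4,4); (2,6); (1,0); (0,6)];
 [:: (0,9); (4,9); (3,8); (1,9); (0,5)];
 [:: (1,0); (0,0); (4,9); (2,0); (1,6)];
 [:: (1,0); (0,1); (4,3); (2,3); (1,1)];
 [:: (1,0); (0,4); (2,6); (3,5); (1,6)];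
 [:: (1,0); (0,5); (3,7); (2,1); (1,7)];
 [:: (1,0); (2,0); (4,1); (0,5); (1,5)];
 [:: (1,0); (2,0); (4,4); (3,6); (1,9)];
 [:: (1,0); (2,0); (4,7); (3,3); (0,4)];
 [:: (1,0); (2,1); (3,6); (0,1); (1,9)];
 [:: (1,0); (2,1); (3,8); (0,9); (1,6)];
 [:: (1,0); (2,2); (3,5); (4,1); (0,5)];
 [:: (1,0); (2,3); (0,6); (4,5); (3,7)];
 [:: (1,0); (2,3); (0,7); (4,1); (3,3)];
 [:: (1,0); (2,3); (3,1); (4,4); (0,4)];
 [:: (1,0); (2,3); (3,5); (0,9); (1,9)];
 [:: (1,0); (2,4); (3,6); (4,5); (0,2)];
 [:: (1,0); (2,5); (0,8); (4,1); (3,9)];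
 [:: (1,0); (2,5); (3,1); (0,4); (1,9)];
 [:: (1,0); (2,5); (3,8); (4,5); (0,9)];
 [:: (1,0); (2,5); (3,9); (0,7); (1,8)];
 [:: (1,0); (2,6); (0,8); (4,8); (2,8)];
 [:: (1,0); (2,6); (3,3); (0,3); (1,6)];
 [:: (1,0); (2,7); (0,5); (4,6); (1,4)];
 [:: (1,0); (2,7); (3,4); (4,3); (0,3)];
 [:: (1,0); (2,7); (4,5); (3,5); (2,8)];
 [:: (1,0); (2,8); (0,1); (4,7); (2,7)];
 [:: (1,0); (2,9); (0,5); (4,0); (1,3)];
 [:: (1,0); (2,9); (4,7); (3,5); (1,8)];
 [:: (1,0); (3,0); (4,1); (2,7); (1,4)];
 [:: (1,0); (3,2); (4,7); (0,9); (3,5)];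
 [:: (1,0); (3,3); (0,7); (2,9); (4,5)];
 [:: (1,0); (3,3); (2,8); (0,2); (4,1)];
 [:: (1,0); (3,5); (2,8); (4,6); (0,5)];
 [:: (1,0); (3,6); (2,6); (4,0); (0,5)];
 [:: (1,0); (3,7); (0,8); (4,7); (1,6)];
 [:: (1,0); (3,8); (2,4); (4,6); (0,9)];
 [:: (1,0); (4,0); (3,4); (0,1); (1,7)];
 [:: (1,0); (4,2); (3,0); (0,2); (1,4)];
 [:: (1,0); (4,3); (0,3); (2,5); (1,1)];
 [:: (1,0); (4,4); (2,1); (0,6); (1,6)];
 [:: (1,0); (4,9); (2,8); (0,8); (1,6)];
 [:: (1,1); (0,1); (4,0); (2,1); (1,7)];
 [:: (1,1); (0,2); (4,4); (2,4); (1,2)];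
 [:: (1,1); (0,5); (2,7); (3,6); (1,7)];
 [:: (1,1); (0,6); (3,8); (2,2); (1,8)];
 [:: (1,1); (2,0); (0,6); (4,1); (1,4)];
 [:: (1,1); (2,0); (4,8); (3,6); (1,9)];
 [:: (1,1); (2,1); (4,2); (0,6); (1,6)];
 [:: (1,1); (2,1); (4,5); (3,7); (1,0)];
 [:: (1,1); (2,1); (4,8); (3,4); (0,5)];
 [:: (1,1); (2,2); (3,7); (0,2); (1,0)];
 [:: (1,1); (2,2); (3,9); (0,0); (1,7)];
 [:: (1,1); (2,3); (3,6); (4,2); (0,6)];
 [:: (1,1); (2,4); (0,7); (4,6); (3,8)];
 [:: (1,1); (2,4); (0,8); (4,2); (3,4)];
 [:: (1,1); (2,4); (3,2); (4,5); (0,5)];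
 [:: (1,1); (2,4); (3,6); (0,0); (1,0)];
 [:: (1,1); (2,5); (3,7); (4,6); (0,3)];
 [:: (1,1); (2,6); (0,9); (4,2); (3,0)];
 [:: (1,1); (2,6); (3,0); (0,8); (1,9)];
 [:: (1,1); (2,6); (3,2); (0,5); (1,0)];
 [:: (1,1); (2,6); (3,9); (4,6); (0,0)];
 [:: (1,1); (2,7); (0,9); (4,9); (2,9)];
 [:: (1,1); (2,7); (3,4); (0,4); (1,7)];
 [:: (1,1); (2,8); (0,6); (4,7); (1,5)];
 [:: (1,1); (2,8); (3,5); (4,4); (0,4)];
 [:: (1,1); (2,8); (4,6); (3,6); (2,9)];
 [:: (1,1); (2,9); (0,2); (4,8); (2,8)];
 [:: (1,1); (3,1); (4,2); (2,8); (1,5)];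
 [:: (1,1); (3,3); (4,8); (0,0); (3,6)];
 [:: (1,1); (3,4); (0,8); (2,0); (4,6)];
 [:: (1,1); (3,4); (2,9); (0,3); (4,2)];
 [:: (1,1); (3,6); (2,9); (4,7); (0,6)];
 [:: (1,1); (3,7); (2,7); (4,1); (0,6)];
 [:: (1,1); (3,8); (0,9); (4,8); (1,7)];
 [:: (1,1); (3,9); (2,5); (4,7); (0,0)];
 [:: (1,1); (4,0); (2,9); (0,9); (1,7)];
 [:: (1,1); (4,1); (3,5); (0,2); (1,8)];
 [:: (1,1); (4,3); (3,1); (0,3); (1,5)];
 [:: (1,1); (4,4); (0,4); (2,6); (1,2)];
 [:: (1,1); (4,5); (2,2); (0,7); (1,7)];
 [:: (1,2); (0,2); (4,1); (2,2); (1,8)];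
 [:: (1,2); (0,3); (4,5); (2,5); (1,3)];
 [:: (1,2); (0,6); (2,8); (3,7); (1,8)];
 [:: (1,2); (0,7); (3,9); (2,3); (1,9)];
 [:: (1,2); (2,0); (0,3); (4,9); (2,9)];
 [:: (1,2); (2,1); (0,7); (4,2); (1,5)];
 [:: (1,2); (2,1); (4,9); (3,7); (1,0)];
 [:: (1,2); (2,2); (4,3); (0,7); (1,7)];
 [:: (1,2); (2,2); (4,6); (3,8); (1,1)];
 [:: (1,2); (2,2); (4,9); (3,5); (0,6)];
 [:: (1,2); (2,3); (3,0); (0,1); (1,8)];
 [:: (1,2); (2,3); (3,8); (0,3); (1,1)];
 [:: (1,2); (2,4); (3,7); (4,3); (0,7)];
 [:: (1,2); (2,5); (0,8); (4,7); (3,9)];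
 [:: (1,2); (2,5); (0,9); (4,3); (3,5)];
 [:: (1,2); (2,5); (3,3); (4,6); (0,6)];
 [:: (1,2); (2,5); (3,7); (0,1); (1,1)];
 [:: (1,2); (2,6); (3,8); (4,7); (0,4)];
 [:: (1,2); (2,7); (0,0); (4,3); (3,1)];
 [:: (1,2); (2,7); (3,0); (4,7); (0,1)];
 [:: (1,2); (2,7); (3,1); (0,9); (1,0)];
 [:: (1,2); (2,7); (3,3); (0,6); (1,1)];
 [:: (1,2); (2,8); (0,0); (4,0); (2,0)];
 [:: (1,2); (2,8); (3,5); (0,5); (1,8)];
 [:: (1,2); (2,9); (0,7); (4,8); (1,6)];
 [:: (1,2); (2,9); (3,6); (4,5); (0,5)];
 [:: (1,2); (2,9); (4,7); (3,7); (2,0)];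
 [:: (1,2); (3,0); (2,6); (4,8); (0,1)];
 [:: (1,2); (3,2); (4,3); (2,9); (1,6)];
 [:: (1,2); (3,4); (4,9); (0,1); (3,7)];
 [:: (1,2); (3,5); (0,9); (2,1); (4,7)];
 [:: (1,2); (3,5); (2,0); (0,4); (4,3)];
 [:: (1,2); (3,7); (2,0); (4,8); (0,7)];
 [:: (1,2); (3,8); (2,8); (4,2); (0,7)];
 [:: (1,2); (3,9); (0,0); (4,9); (1,8)];
 [:: (1,2); (4,1); (2,0); (0,0); (1,8)];
 [:: (1,2); (4,2); (3,6); (0,3); (1,9)];
 [:: (1,2); (4,4); (3,2); (0,4); (1,6)];
 [:: (1,2); (4,5); (0,5); (2,7); (1,3)];
 [:: (1,2); (4,6); (2,3); (0,8); (1,8)];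
 [:: (1,3); (0,3); (4,2); (2,3); (1,9)];
 [:: (1,3); (0,4); (4,6); (2,6); (1,4)];
 [:: (1,3); (0,7); (2,9); (3,8); (1,9)];
 [:: (1,3); (0,8); (3,0); (2,4); (1,0)];
 [:: (1,3); (2,0); (0,8); (4,9); (1,7)];
 [:: (1,3); (2,0); (3,7); (4,6); (0,6)];
 [:: (1,3); (2,0); (4,8); (3,8); (2,1)];
 [:: (1,3); (2,1); (0,4); (4,0); (2,0)];
 [:: (1,3); (2,2); (0,8); (4,3); (1,6)];
 [:: (1,3); (2,2); (4,0); (3,8); (1,1)];
 [:: (1,3); (2,3); (4,0); (3,6); (0,7)];
 [:: (1,3); (2,3); (4,4); (0,8); (1,8)];
 [:: (1,3); (2,3); (4,7); (3,9); (1,2)];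
 [:: (1,3); (2,4); (3,1); (0,2); (1,9)];
 [:: (1,3); (2,4); (3,9); (0,4); (1,2)];
 [:: (1,3); (2,5); (3,8); (4,4); (0,8)];
 [:: (1,3); (2,6); (0,0); (4,4); (3,6)];
 [:: (1,3); (2,6); (0,9); (4,8); (3,0)];
 [:: (1,3); (2,6); (3,4); (4,7); (0,7)];
 [:: (1,3); (2,6); (3,8); (0,2); (1,2)];
 [:: (1,3); (2,7); (3,9); (4,8); (0,5)];
 [:: (1,3); (2,8); (0,1); (4,4); (3,2)];
 [:: (1,3); (2,8); (3,1); (4,8); (0,2)];
 [:: (1,3); (2,8); (3,2); (0,0); (1,1)];
 [:: (1,3); (2,8); (3,4); (0,7); (1,2)];
 [:: (1,3); (2,9); (0,1); (4,1); (2,1)];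
 [:: (1,3); (2,9); (3,6); (0,6); (1,9)];
 [:: (1,3); (3,0); (0,1); (4,0); (1,9)];
 [:: (1,3); (3,1); (2,7); (4,9); (0,2)];
 [:: (1,3); (3,3); (4,4); (2,0); (1,7)];
 [:: (1,3); (3,5); (4,0); (0,2); (3,8)];
 [:: (1,3); (3,6); (0,0); (2,2); (4,8)];
 [:: (1,3); (3,6); (2,1); (0,5); (4,4)];
 [:: (1,3); (3,8); (2,1); (4,9); (0,8)];
 [:: (1,3); (3,9); (2,9); (4,3); (0,8)];
 [:: (1,3); (4,2); (2,1); (0,1); (1,9)];
 [:: (1,3); (4,3); (3,7); (0,4); (1,0)];
 [:: (1,3); (4,5); (3,3); (0,5); (1,7)];
 [:: (1,3); (4,6); (0,6); (2,8); (1,4)];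
 [:: (1,3); (4,7); (2,4); (0,9); (1,9)];
 [:: (1,4); (0,4); (4,3); (2,4); (1,0)];
 [:: (1,4); (0,5); (4,7); (2,7); (1,5)];
 [:: (1,4); (0,8); (2,0); (3,9); (1,0)];
 [:: (1,4); (0,9); (3,1); (2,5); (1,1)];
 [:: (1,4); (2,0); (0,2); (4,2); (2,2)];
 [:: (1,4); (2,0); (3,7); (0,7); (1,0)];
 [:: (1,4); (2,1); (0,9); (4,0); (1,8)];
 [:: (1,4); (2,1); (3,8); (4,7); (0,7)];
 [:: (1,4); (2,1); (4,9); (3,9); (2,2)];
 [:: (1,4); (2,2); (0,5); (4,1); (2,1)];
 [:: (1,4); (2,3); (0,9); (4,4); (1,7)];
 [:: (1,4); (2,3); (4,1); (3,9); (1,2)];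
 [:: (1,4); (2,4); (4,1); (3,7); (0,8)];
 [:: (1,4); (2,4); (4,5); (0,9); (1,9)];
 [:: (1,4); (2,4); (4,8); (3,0); (1,3)];
 [:: (1,4); (2,5); (3,0); (0,5); (1,3)];
 [:: (1,4); (2,5); (3,2); (0,3); (1,0)];
 [:: (1,4); (2,6); (3,9); (4,5); (0,9)];
 [:: (1,4); (2,7); (0,0); (4,9); (3,1)];
 [:: (1,4); (2,7); (0,1); (4,5); (3,7)];
 [:: (1,4); (2,7); (3,5); (4,8); (0,8)];
 [:: (1,4); (2,7); (3,9); (0,3); (1,3)];
 [:: (1,4); (2,8); (3,0); (4,9); (0,6)];
 [:: (1,4); (2,9); (0,2); (4,5); (3,3)];
 [:: (1,4); (2,9); (3,2); (4,9); (0,3)];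
 [:: (1,4); (2,9); (3,3); (0,1); (1,2)];
 [:: (1,4); (2,9); (3,5); (0,8); (1,3)];
 [:: (1,4); (3,0); (2,0); (4,4); (0,9)];
 [:: (1,4); (3,1); (0,2); (4,1); (1,0)];
 [:: (1,4); (3,2); (2,8); (4,0); (0,3)];
 [:: (1,4); (3,4); (4,5); (2,1); (1,8)];
 [:: (1,4); (3,6); (4,1); (0,3); (3,9)];
 [:: (1,4); (3,7); (0,1); (2,3); (4,9)];
 [:: (1,4); (3,7); (2,2); (0,6); (4,5)];
 [:: (1,4); (3,9); (2,2); (4,0); (0,9)];
 [:: (1,4); (4,3); (2,2); (0,2); (1,0)];
 [:: (1,4); (4,4); (3,8); (0,5); (1,1)];
 [:: (1,4); (4,6); (3,4); (0,6); (1,8)];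
 [:: (1,4); (4,7); (0,7); (2,9); (1,5)];
 [:: (1,4); (4,8); (2,5); (0,0); (1,0)];
 [:: (1,5); (0,0); (3,2); (2,6); (1,2)];
 [:: (1,5); (0,5); (4,4); (2,5); (1,1)];
 [:: (1,5); (0,6); (4,8); (2,8); (1,6)];
 [:: (1,5); (0,9); (2,1); (3,0); (1,1)];
 [:: (1,5); (2,0); (0,3); (4,6); (3,4)];
 [:: (1,5); (2,0); (3,3); (4,0); (0,4)];
 [:: (1,5); (2,0); (3,4); (0,2); (1,3)];
 [:: (1,5); (2,0); (3,6); (0,9); (1,4)];
 [:: (1,5); (2,1); (0,3); (4,3); (2,3)];
 [:: (1,5); (2,1); (3,8); (0,8); (1,1)];
 [:: (1,5); (2,2); (0,0); (4,1); (1,9)];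
 [:: (1,5); (2,2); (3,9); (4,8); (0,8)];
 [:: (1,5); (2,2); (4,0); (3,0); (2,3)];
 [:: (1,5); (2,3); (0,6); (4,2); (2,2)];
 [:: (1,5); (2,4); (0,0); (4,5); (1,8)];
 [:: (1,5); (2,4); (4,2); (3,0); (1,3)];
 [:: (1,5); (2,5); (4,2); (3,8); (0,9)];
 [:: (1,5); (2,5); (4,6); (0,0); (1,0)];
 [:: (1,5); (2,5); (4,9); (3,1); (1,4)];
 [:: (1,5); (2,6); (3,1); (0,6); (1,4)];
 [:: (1,5); (2,6); (3,3); (0,4); (1,1)];
 [:: (1,5); (2,7); (3,0); (4,6); (0,0)];
 [:: (1,5); (2,8); (0,1); (4,0); (3,2)];
 [:: (1,5); (2,8); (0,2); (4,6); (3,8)];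
 [:: (1,5); (2,8); (3,0); (0,4); (1,4)];
 [:: (1,5); (2,8); (3,6); (4,9); (0,9)];
 [:: (1,5); (2,9); (3,1); (4,0); (0,7)];
 [:: (1,5); (3,0); (2,3); (4,1); (0,0)];
 [:: (1,5); (3,1); (2,1); (4,5); (0,0)];
 [:: (1,5); (3,2); (0,3); (4,2); (1,1)];
 [:: (1,5); (3,3); (2,9); (4,1); (0,4)];
 [:: (1,5); (3,5); (4,6); (2,2); (1,9)];
 [:: (1,5); (3,7); (4,2); (0,4); (3,0)];
 [:: (1,5); (3,8); (0,2); (2,4); (4,0)];
 [:: (1,5); (3,8); (2,3); (0,7); (4,6)];
 [:: (1,5); (4,4); (2,3); (0,3); (1,1)];
 [:: (1,5); (4,5); (3,9); (0,6); (1,2)];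
 [:: (1,5); (4,7); (3,5); (0,7); (1,9)];
 [:: (1,5); (4,8); (0,8); (2,0); (1,6)];
 [:: (1,5); (4,9); (2,6); (0,1); (1,1)];
 [:: (1,6); (0,0); (2,2); (3,1); (1,2)];
 [:: (1,6); (0,1); (3,3); (2,7); (1,3)];
 [:: (1,6); (0,6); (4,5); (2,6); (1,2)];
 [:: (1,6); (0,7); (4,9); (2,9); (1,7)];
 [:: (1,6); (2,0); (3,2); (4,1); (0,8)];
 [:: (1,6); (2,1); (0,4); (4,7); (3,5)];
 [:: (1,6); (2,1); (3,4); (4,1); (0,5)];
 [:: (1,6); (2,1); (3,5); (0,3); (1,4)];
 [:: (1,6); (2,1); (3,7); (0,0); (1,5)];
 [:: (1,6); (2,2); (0,4); (4,4); (2,4)];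
 [:: (1,6); (2,2); (3,9); (0,9); (1,2)];
 [:: (1,6); (2,3); (0,1); (4,2); (1,0)];
 [:: (1,6); (2,3); (3,0); (4,9); (0,9)];
 [:: (1,6); (2,3); (4,1); (3,1); (2,4)];
 [:: (1,6); (2,4); (0,7); (4,3); (2,3)];
 [:: (1,6); (2,5); (0,1); (4,6); (1,9)];
 [:: (1,6); (2,5); (4,3); (3,1); (1,4)];
 [:: (1,6); (2,6); (4,0); (3,2); (1,5)];
 [:: (1,6); (2,6); (4,3); (3,9); (0,0)];
 [:: (1,6); (2,6); (4,7); (0,1); (1,1)];
 [:: (1,6); (2,7); (3,2); (0,7); (1,5)];
 [:: (1,6); (2,7); (3,4); (0,5); (1,2)];
 [:: (1,6); (2,8); (3,1); (4,7); (0,1)];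
 [:: (1,6); (2,9); (0,2); (4,1); (3,3)];
 [:: (1,6); (2,9); (0,3); (4,7); (3,9)];
 [:: (1,6); (2,9); (3,1); (0,5); (1,5)];
 [:: (1,6); (2,9); (3,7); (4,0); (0,0)];
 [:: (1,6); (3,1); (2,4); (4,2); (0,1)];
 [:: (1,6); (3,2); (2,2); (4,6); (0,1)];
 [:: (1,6); (3,3); (0,4); (4,3); (1,2)];
 [:: (1,6); (3,4); (2,0); (4,2); (0,5)];
 [:: (1,6); (3,6); (4,7); (2,3); (1,0)];
 [:: (1,6); (3,8); (4,3); (0,5); (3,1)];
 [:: (1,6); (3,9); (0,3); (2,5); (4,1)];
 [:: (1,6); (3,9); (2,4); (0,8); (4,7)];
 [:: (1,6); (4,0); (2,7); (0,2); (1,2)];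
 [:: (1,6); (4,5); (2,4); (0,4); (1,2)];
 [:: (1,6); (4,6); (3,0); (0,7); (1,3)];
 [:: (1,6); (4,8); (3,6); (0,8); (1,0)];
 [:: (1,6); (4,9); (0,9); (2,1); (1,7)];
 [:: (1,7); (0,1); (2,3); (3,2); (1,3)];
 [:: (1,7); (0,2); (3,4); (2,8); (1,4)];
 [:: (1,7); (0,7); (4,6); (2,7); (1,3)];
 [:: (1,7); (0,8); (4,0); (2,0); (1,8)];
 [:: (1,7); (2,0); (0,3); (4,2); (3,4)];
 [:: (1,7); (2,0); (0,4); (4,8); (3,0)];
 [:: (1,7); (2,0); (3,2); (0,6); (1,6)];
 [:: (1,7); (2,0); (3,8); (4,1); (0,1)];
 [:: (1,7); (2,1); (3,3); (4,2); (0,9)];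
 [:: (1,7); (2,2); (0,5); (4,8); (3,6)];
 [:: (1,7); (2,2); (3,5); (4,2); (0,6)];
 [:: (1,7); (2,2); (3,6); (0,4); (1,5)];
 [:: (1,7); (2,2); (3,8); (0,1); (1,6)];
 [:: (1,7); (2,3); (0,5); (4,5); (2,5)];
 [:: (1,7); (2,3); (3,0); (0,0); (1,3)];
 [:: (1,7); (2,4); (0,2); (4,3); (1,1)];
 [:: (1,7); (2,4); (3,1); (4,0); (0,0)];
 [:: (1,7); (2,4); (4,2); (3,2); (2,5)];
 [:: (1,7); (2,5); (0,8); (4,4); (2,4)];
 [:: (1,7); (2,6); (0,2); (4,7); (1,0)];
 [:: (1,7); (2,6); (4,4); (3,2); (1,5)];
 [:: (1,7); (2,7); (4,1); (3,3); (1,6)];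
 [:: (1,7); (2,7); (4,4); (3,0); (0,1)];
 [:: (1,7); (2,7); (4,8); (0,2); (1,2)];
 [:: (1,7); (2,8); (3,3); (0,8); (1,6)];
 [:: (1,7); (2,8); (3,5); (0,6); (1,3)];
 [:: (1,7); (2,9); (3,2); (4,8); (0,2)];
 [:: (1,7); (3,0); (0,4); (2,6); (4,2)];
 [:: (1,7); (3,0); (2,5); (0,9); (4,8)];
 [:: (1,7); (3,2); (2,5); (4,3); (0,2)];
 [:: (1,7); (3,3); (2,3); (4,7); (0,2)];
 [:: (1,7); (3,4); (0,5); (4,4); (1,3)];
 [:: (1,7); (3,5); (2,1); (4,3); (0,6)];
 [:: (1,7); (3,7); (4,8); (2,4); (1,1)];
 [:: (1,7); (3,9); (4,4); (0,6); (3,2)];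
 [:: (1,7); (4,0); (0,0); (2,2); (1,8)];
 [:: (1,7); (4,1); (2,8); (0,3); (1,3)];
 [:: (1,7); (4,6); (2,5); (0,5); (1,3)];
 [:: (1,7); (4,7); (3,1); (0,8); (1,4)];
 [:: (1,7); (4,9); (3,7); (0,9); (1,1)];
 [:: (1,8); (0,2); (2,4); (3,3); (1,4)];
 [:: (1,8); (0,3); (3,5); (2,9); (1,5)];
 [:: (1,8); (0,8); (4,7); (2,8); (1,4)];
 [:: (1,8); (0,9); (4,1); (2,1); (1,9)];
 [:: (1,8); (2,0); (3,3); (4,9); (0,3)];
 [:: (1,8); (2,1); (0,4); (4,3); (3,5)];
 [:: (1,8); (2,1); (0,5); (4,9); (3,1)];
 [:: (1,8); (2,1); (3,3); (0,7); (1,7)];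
 [:: (1,8); (2,1); (3,9); (4,2); (0,2)];
 [:: (1,8); (2,2); (3,4); (4,3); (0,0)];
 [:: (1,8); (2,3); (0,6); (4,9); (3,7)];
 [:: (1,8); (2,3); (3,6); (4,3); (0,7)];
 [:: (1,8); (2,3); (3,7); (0,5); (1,6)];
 [:: (1,8); (2,3); (3,9); (0,2); (1,7)];
 [:: (1,8); (2,4); (0,6); (4,6); (2,6)];
 [:: (1,8); (2,4); (3,1); (0,1); (1,4)];
 [:: (1,8); (2,5); (0,3); (4,4); (1,2)];
 [:: (1,8); (2,5); (3,2); (4,1); (0,1)];
 [:: (1,8); (2,5); (4,3); (3,3); (2,6)];
 [:: (1,8); (2,6); (0,9); (4,5); (2,5)];
 [:: (1,8); (2,7); (0,3); (4,8); (1,1)];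
 [:: (1,8); (2,7); (4,5); (3,3); (1,6)];
 [:: (1,8); (2,8); (4,2); (3,4); (1,7)];
 [:: (1,8); (2,8); (4,5); (3,1); (0,2)];
 [:: (1,8); (2,8); (4,9); (0,3); (1,3)];
 [:: (1,8); (2,9); (3,4); (0,9); (1,7)];
 [:: (1,8); (2,9); (3,6); (0,7); (1,4)];
 [:: (1,8); (3,0); (4,5); (0,7); (3,3)];
 [:: (1,8); (3,1); (0,5); (2,7); (4,3)];
 [:: (1,8); (3,1); (2,6); (0,0); (4,9)];
 [:: (1,8); (3,3); (2,6); (4,4); (0,3)];
 [:: (1,8); (3,4); (2,4); (4,8); (0,3)];
 [:: (1,8); (3,5); (0,6); (4,5); (1,4)];
 [:: (1,8); (3,6); (2,2); (4,4); (0,7)];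
 [:: (1,8); (3,8); (4,9); (2,5); (1,2)];
 [:: (1,8); (4,0); (3,8); (0,0); (1,2)];
 [:: (1,8); (4,1); (0,1); (2,3); (1,9)];
 [:: (1,8); (4,2); (2,9); (0,4); (1,4)];
 [:: (1,8); (4,7); (2,6); (0,6); (1,4)];
 [:: (1,8); (4,8); (3,2); (0,9); (1,5)];
 [:: (1,9); (0,0); (4,2); (2,2); (1,0)];
 [:: (1,9); (0,3); (2,5); (3,4); (1,5)];
 [:: (1,9); (0,4); (3,6); (2,0); (1,6)];
 [:: (1,9); (0,9); (4,8); (2,9); (1,5)];
 [:: (1,9); (2,0); (3,5); (0,0); (1,8)];
 [:: (1,9); (2,0); (3,7); (0,8); (1,5)];
 [:: (1,9); (2,1); (3,4); (4,0); (0,4)];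
 [:: (1,9); (2,2); (0,5); (4,4); (3,6)];
 [:: (1,9); (2,2); (0,6); (4,0); (3,2)];
 [:: (1,9); (2,2); (3,0); (4,3); (0,3)];
 [:: (1,9); (2,2); (3,4); (0,8); (1,8)];
 [:: (1,9); (2,3); (3,5); (4,4); (0,1)];
 [:: (1,9); (2,4); (0,7); (4,0); (3,8)];
 [:: (1,9); (2,4); (3,0); (0,3); (1,8)];
 [:: (1,9); (2,4); (3,7); (4,4); (0,8)];
 [:: (1,9); (2,4); (3,8); (0,6); (1,7)];
 [:: (1,9); (2,5); (0,7); (4,7); (2,7)];
 [:: (1,9); (2,5); (3,2); (0,2); (1,5)];
 [:: (1,9); (2,6); (0,4); (4,5); (1,3)];
 [:: (1,9); (2,6); (3,3); (4,2); (0,2)];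
 [:: (1,9); (2,6); (4,4); (3,4); (2,7)];
 [:: (1,9); (2,7); (0,0); (4,6); (2,6)];
 [:: (1,9); (2,8); (0,4); (4,9); (1,2)];
 [:: (1,9); (2,8); (4,6); (3,4); (1,7)];
 [:: (1,9); (2,9); (4,0); (0,4); (1,4)];
 [:: (1,9); (2,9); (4,3); (3,5); (1,8)];
 [:: (1,9); (2,9); (4,6); (3,2); (0,3)];
 [:: (1,9); (3,1); (4,6); (0,8); (3,4)];
 [:: (1,9); (3,2); (0,6); (2,8); (4,4)];
 [:: (1,9); (3,2); (2,7); (0,1); (4,0)];
 [:: (1,9); (3,4); (2,7); (4,5); (0,4)];
 [:: (1,9); (3,5); (2,5); (4,9); (0,4)];
 [:: (1,9); (3,6); (0,7); (4,6); (1,5)];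
 [:: (1,9); (3,7); (2,3); (4,5); (0,8)];
 [:: (1,9); (3,9); (4,0); (2,6); (1,3)];
 [:: (1,9); (4,1); (3,9); (0,1); (1,3)];
 [:: (1,9); (4,2); (0,2); (2,4); (1,0)];
 [:: (1,9); (4,3); (2,0); (0,5); (1,5)];
 [:: (1,9); (4,8); (2,7); (0,7); (1,5)];
 [:: (1,9); (4,9); (3,3); (0,0); (1,6)];
 [:: (2,0); (0,0); (4,4); (1,1); (2,7)];
 [:: (2,0); (0,2); (4,0); (1,2); (2,4)];
 [:: (2,0); (0,3); (1,3); (3,5); (2,1)];
 [:: (2,0); (0,4); (3,1); (1,6); (2,6)];
 [:: (2,0); (0,9); (3,8); (1,8); (2,6)];
 [:: (2,0); (1,0); (0,9); (3,0); (2,6)];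
 [:: (2,0); (1,1); (0,3); (3,3); (2,1)];
 [:: (2,0); (1,4); (3,6); (4,5); (2,6)];
 [:: (2,0); (1,5); (4,7); (3,1); (2,7)];
 [:: (2,0); (3,0); (0,1); (1,5); (2,5)];
 [:: (2,0); (3,0); (0,4); (4,6); (2,9)];
 [:: (2,0); (3,0); (0,7); (4,3); (1,4)];
 [:: (2,0); (3,1); (4,6); (1,1); (2,9)];
 [:: (2,0); (3,1); (4,8); (1,9); (2,6)];
 [:: (2,0); (3,2); (4,5); (0,1); (1,5)];
 [:: (2,0); (3,3); (1,6); (0,5); (4,7)];
 [:: (2,0); (3,3); (1,7); (0,1); (4,3)];
 [:: (2,0); (3,3); (4,1); (0,4); (1,4)];
 [:: (2,0); (3,3); (4,5); (1,9); (2,9)];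
 [:: (2,0); (3,4); (4,6); (0,5); (1,2)];
 [:: (2,0); (3,5); (1,8); (0,1); (4,9)];
 [:: (2,0); (3,5); (4,1); (1,4); (2,9)];
 [:: (2,0); (3,5); (4,8); (0,5); (1,9)];
 [:: (2,0); (3,5); (4,9); (1,7); (2,8)];
 [:: (2,0); (3,6); (1,8); (0,8); (3,8)];
 [:: (2,0); (3,6); (4,3); (1,3); (2,6)];
 [:: (2,0); (3,7); (0,5); (4,5); (3,8)];
 [:: (2,0); (3,7); (1,5); (0,6); (2,4)];
 [:: (2,0); (3,7); (4,4); (0,3); (1,3)];
 [:: (2,0); (3,8); (1,1); (0,7); (3,7)];
 [:: (2,0); (3,9); (0,7); (4,5); (2,8)];
 [:: (2,0); (3,9); (1,5); (0,0); (2,3)];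
 [:: (2,0); (4,0); (0,1); (3,7); (2,4)];
 [:: (2,0); (4,2); (0,7); (1,9); (4,5)];
 [:: (2,0); (4,3); (1,7); (3,9); (0,5)];
 [:: (2,0); (4,3); (3,8); (1,2); (0,1)];
 [:: (2,0); (4,5); (3,8); (0,6); (1,5)];
 [:: (2,0); (4,6); (3,6); (0,0); (1,5)];
 [:: (2,0); (4,7); (1,8); (0,7); (2,6)];
 [:: (2,0); (4,8); (3,4); (0,6); (1,9)];
 [:: (2,1); (0,0); (3,9); (1,9); (2,7)];
 [:: (2,1); (0,1); (4,5); (1,2); (2,8)];
 [:: (2,1); (0,3); (4,1); (1,3); (2,5)];
 [:: (2,1); (0,4); (1,4); (3,6); (2,2)];
 [:: (2,1); (0,5); (3,2); (1,7); (2,7)];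
 [:: (2,1); (1,1); (0,0); (3,1); (2,7)];
 [:: (2,1); (1,2); (0,4); (3,4); (2,2)];
 [:: (2,1); (1,5); (3,7); (4,6); (2,7)];
 [:: (2,1); (1,6); (4,8); (3,2); (2,8)];
 [:: (2,1); (3,0); (0,8); (4,6); (2,9)];
 [:: (2,1); (3,0); (1,6); (0,1); (2,4)];
 [:: (2,1); (3,1); (0,2); (1,6); (2,6)];
 [:: (2,1); (3,1); (0,5); (4,7); (2,0)];
 [:: (2,1); (3,1); (0,8); (4,4); (1,5)];
 [:: (2,1); (3,2); (4,7); (1,2); (2,0)];
 [:: (2,1); (3,2); (4,9); (1,0); (2,7)];
 [:: (2,1); (3,3); (4,6); (0,2); (1,6)];
 [:: (2,1); (3,4); (1,7); (0,6); (4,8)];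
 [:: (2,1); (3,4); (1,8); (0,2); (4,4)];
 [:: (2,1); (3,4); (4,2); (0,5); (1,5)];
 [:: (2,1); (3,4); (4,6); (1,0); (2,0)];
 [:: (2,1); (3,5); (4,7); (0,6); (1,3)];
 [:: (2,1); (3,6); (1,9); (0,2); (4,0)];
 [:: (2,1); (3,6); (4,0); (1,8); (2,9)];
 [:: (2,1); (3,6); (4,2); (1,5); (2,0)];
 [:: (2,1); (3,6); (4,9); (0,6); (1,0)];
 [:: (2,1); (3,7); (1,9); (0,9); (3,9)];
 [:: (2,1); (3,7); (4,4); (1,4); (2,7)];
 [:: (2,1); (3,8); (0,6); (4,6); (3,9)];
 [:: (2,1); (3,8); (1,6); (0,7); (2,5)];
 [:: (2,1); (3,8); (4,5); (0,4); (1,4)];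
 [:: (2,1); (3,9); (1,2); (0,8); (3,8)];
 [:: (2,1); (4,1); (0,2); (3,8); (2,5)];
 [:: (2,1); (4,3); (0,8); (1,0); (4,6)];
 [:: (2,1); (4,4); (1,8); (3,0); (0,6)];
 [:: (2,1); (4,4); (3,9); (1,3); (0,2)];
 [:: (2,1); (4,6); (3,9); (0,7); (1,6)];
 [:: (2,1); (4,7); (3,7); (0,1); (1,6)];
 [:: (2,1); (4,8); (1,9); (0,8); (2,7)];
 [:: (2,1); (4,9); (3,5); (0,7); (1,0)];
 [:: (2,2); (0,1); (3,0); (1,0); (2,8)];
 [:: (2,2); (0,2); (4,6); (1,3); (2,9)];
 [:: (2,2); (0,4); (4,2); (1,4); (2,6)];
 [:: (2,2); (0,5); (1,5); (3,7); (2,3)];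
 [:: (2,2); (0,6); (3,3); (1,8); (2,8)];
 [:: (2,2); (1,2); (0,1); (3,2); (2,8)];
 [:: (2,2); (1,3); (0,5); (3,5); (2,3)];
 [:: (2,2); (1,6); (3,8); (4,7); (2,8)];
 [:: (2,2); (1,7); (4,9); (3,3); (2,9)];
 [:: (2,2); (3,0); (1,3); (0,9); (3,9)];
 [:: (2,2); (3,1); (0,9); (4,7); (2,0)];
 [:: (2,2); (3,1); (1,7); (0,2); (2,5)];
 [:: (2,2); (3,2); (0,3); (1,7); (2,7)];
 [:: (2,2); (3,2); (0,6); (4,8); (2,1)];
 [:: (2,2); (3,2); (0,9); (4,5); (1,6)];
 [:: (2,2); (3,3); (4,0); (1,1); (2,8)];
 [:: (2,2); (3,3); (4,8); (1,3); (2,1)];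
 [:: (2,2); (3,4); (4,7); (0,3); (1,7)];
 [:: (2,2); (3,5); (1,8); (0,7); (4,9)];
 [:: (2,2); (3,5); (1,9); (0,3); (4,5)];
 [:: (2,2); (3,5); (4,3); (0,6); (1,6)];
 [:: (2,2); (3,5); (4,7); (1,1); (2,1)];
 [:: (2,2); (3,6); (4,8); (0,7); (1,4)];
 [:: (2,2); (3,7); (1,0); (0,3); (4,1)];
 [:: (2,2); (3,7); (4,0); (0,7); (1,1)];
 [:: (2,2); (3,7); (4,1); (1,9); (2,0)];
 [:: (2,2); (3,7); (4,3); (1,6); (2,1)];
 [:: (2,2); (3,8); (1,0); (0,0); (3,0)];
 [:: (2,2); (3,8); (4,5); (1,5); (2,8)];
 [:: (2,2); (3,9); (0,7); (4,7); (3,0)];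
 [:: (2,2); (3,9); (1,7); (0,8); (2,6)];
 [:: (2,2); (3,9); (4,6); (0,5); (1,5)];
 [:: (2,2); (4,0); (3,6); (0,8); (1,1)];
 [:: (2,2); (4,2); (0,3); (3,9); (2,6)];
 [:: (2,2); (4,4); (0,9); (1,1); (4,7)];
 [:: (2,2); (4,5); (1,9); (3,1); (0,7)];
 [:: (2,2); (4,5); (3,0); (1,4); (0,3)];
 [:: (2,2); (4,7); (3,0); (0,8); (1,7)];
 [:: (2,2); (4,8); (3,8); (0,2); (1,7)];
 [:: (2,2); (4,9); (1,0); (0,9); (2,8)];
 [:: (2,3); (0,2); (3,1); (1,1); (2,9)];
 [:: (2,3); (0,3); (4,7); (1,4); (2,0)];
 [:: (2,3); (0,5); (4,3); (1,5); (2,7)];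
 [:: (2,3); (0,6); (1,6); (3,8); (2,4)];
 [:: (2,3); (0,7); (3,4); (1,9); (2,9)];
 [:: (2,3); (1,3); (0,2); (3,3); (2,9)];
 [:: (2,3); (1,4); (0,6); (3,6); (2,4)];
 [:: (2,3); (1,7); (3,9); (4,8); (2,9)];
 [:: (2,3); (1,8); (4,0); (3,4); (2,0)];
 [:: (2,3); (3,0); (0,8); (4,8); (3,1)];
 [:: (2,3); (3,0); (1,8); (0,9); (2,7)];
 [:: (2,3); (3,0); (4,7); (0,6); (1,6)];
 [:: (2,3); (3,1); (1,4); (0,0); (3,0)];
 [:: (2,3); (3,2); (0,0); (4,8); (2,1)];
 [:: (2,3); (3,2); (1,8); (0,3); (2,6)];
 [:: (2,3); (3,3); (0,0); (4,6); (1,7)];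
 [:: (2,3); (3,3); (0,4); (1,8); (2,8)];
 [:: (2,3); (3,3); (0,7); (4,9); (2,2)];
 [:: (2,3); (3,4); (4,1); (1,2); (2,9)];
 [:: (2,3); (3,4); (4,9); (1,4); (2,2)];
 [:: (2,3); (3,5); (4,8); (0,4); (1,8)];
 [:: (2,3); (3,6); (1,0); (0,4); (4,6)];
 [:: (2,3); (3,6); (1,9); (0,8); (4,0)];
 [:: (2,3); (3,6); (4,4); (0,7); (1,7)];
 [:: (2,3); (3,6); (4,8); (1,2); (2,2)];
 [:: (2,3); (3,7); (4,9); (0,8); (1,5)];
 [:: (2,3); (3,8); (1,1); (0,4); (4,2)];
 [:: (2,3); (3,8); (4,1); (0,8); (1,2)];
 [:: (2,3); (3,8); (4,2); (1,0); (2,1)];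
 [:: (2,3); (3,8); (4,4); (1,7); (2,2)];
 [:: (2,3); (3,9); (1,1); (0,1); (3,1)];
 [:: (2,3); (3,9); (4,6); (1,6); (2,9)];
 [:: (2,3); (4,0); (1,1); (0,0); (2,9)];
 [:: (2,3); (4,1); (3,7); (0,9); (1,2)];
 [:: (2,3); (4,3); (0,4); (3,0); (2,7)];
 [:: (2,3); (4,5); (0,0); (1,2); (4,8)];
 [:: (2,3); (4,6); (1,0); (3,2); (0,8)];
 [:: (2,3); (4,6); (3,1); (1,5); (0,4)];
 [:: (2,3); (4,8); (3,1); (0,9); (1,8)];
 [:: (2,3); (4,9); (3,9); (0,3); (1,8)];
 [:: (2,4); (0,3); (3,2); (1,2); (2,0)];
 [:: (2,4); (0,4); (4,8); (1,5); (2,1)];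
 [:: (2,4); (0,6); (4,4); (1,6); (2,8)];
 [:: (2,4); (0,7); (1,7); (3,9); (2,5)];
 [:: (2,4); (0,8); (3,5); (1,0); (2,0)];
 [:: (2,4); (1,4); (0,3); (3,4); (2,0)];
 [:: (2,4); (1,5); (0,7); (3,7); (2,5)];
 [:: (2,4); (1,8); (3,0); (4,9); (2,0)];
 [:: (2,4); (1,9); (4,1); (3,5); (2,1)];
 [:: (2,4); (3,0); (1,2); (0,2); (3,2)];
 [:: (2,4); (3,0); (4,7); (1,7); (2,0)];
 [:: (2,4); (3,1); (0,9); (4,9); (3,2)];
 [:: (2,4); (3,1); (1,9); (0,0); (2,8)];
 [:: (2,4); (3,1); (4,8); (0,7); (1,7)];
 [:: (2,4); (3,2); (1,5); (0,1); (3,1)];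
 [:: (2,4); (3,3); (0,1); (4,9); (2,2)];
 [:: (2,4); (3,3); (1,9); (0,4); (2,7)];
 [:: (2,4); (3,4); (0,1); (4,7); (1,8)];
 [:: (2,4); (3,4); (0,5); (1,9); (2,9)];
 [:: (2,4); (3,4); (0,8); (4,0); (2,3)];
 [:: (2,4); (3,5); (4,0); (1,5); (2,3)];
 [:: (2,4); (3,5); (4,2); (1,3); (2,0)];
 [:: (2,4); (3,6); (4,9); (0,5); (1,9)];
 [:: (2,4); (3,7); (1,0); (0,9); (4,1)];
 [:: (2,4); (3,7); (1,1); (0,5); (4,7)];
 [:: (2,4); (3,7); (4,5); (0,8); (1,8)];
 [:: (2,4); (3,7); (4,9); (1,3); (2,3)];
 [:: (2,4); (3,8); (4,0); (0,9); (1,6)];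
 [:: (2,4); (3,9); (1,2); (0,5); (4,3)];
 [:: (2,4); (3,9); (4,2); (0,9); (1,3)];
 [:: (2,4); (3,9); (4,3); (1,1); (2,2)];
 [:: (2,4); (3,9); (4,5); (1,8); (2,3)];
 [:: (2,4); (4,0); (3,0); (0,4); (1,9)];
 [:: (2,4); (4,1); (1,2); (0,1); (2,0)];
 [:: (2,4); (4,2); (3,8); (0,0); (1,3)];
 [:: (2,4); (4,4); (0,5); (3,1); (2,8)];
 [:: (2,4); (4,6); (0,1); (1,3); (4,9)];
 [:: (2,4); (4,7); (1,1); (3,3); (0,9)];
 [:: (2,4); (4,7); (3,2); (1,6); (0,5)];
 [:: (2,4); (4,9); (3,2); (0,0); (1,9)];
 [:: (2,5); (0,4); (3,3); (1,3); (2,1)];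
 [:: (2,5); (0,5); (4,9); (1,6); (2,2)];
 [:: (2,5); (0,7); (4,5); (1,7); (2,9)];
 [:: (2,5); (0,8); (1,8); (3,0); (2,6)];
 [:: (2,5); (0,9); (3,6); (1,1); (2,1)];
 [:: (2,5); (1,0); (4,2); (3,6); (2,2)];
 [:: (2,5); (1,5); (0,4); (3,5); (2,1)];
 [:: (2,5); (1,6); (0,8); (3,8); (2,6)];
 [:: (2,5); (1,9); (3,1); (4,0); (2,1)];
 [:: (2,5); (3,0); (1,3); (0,6); (4,4)];
 [:: (2,5); (3,0); (4,3); (0,0); (1,4)];
 [:: (2,5); (3,0); (4,4); (1,2); (2,3)];
 [:: (2,5); (3,0); (4,6); (1,9); (2,4)];
 [:: (2,5); (3,1); (1,3); (0,3); (3,3)];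
 [:: (2,5); (3,1); (4,8); (1,8); (2,1)];
 [:: (2,5); (3,2); (0,0); (4,0); (3,3)];
 [:: (2,5); (3,2); (1,0); (0,1); (2,9)];
 [:: (2,5); (3,2); (4,9); (0,8); (1,8)];
 [:: (2,5); (3,3); (1,6); (0,2); (3,2)];
 [:: (2,5); (3,4); (0,2); (4,0); (2,3)];
 [:: (2,5); (3,4); (1,0); (0,5); (2,8)];
 [:: (2,5); (3,5); (0,2); (4,8); (1,9)];
 [:: (2,5); (3,5); (0,6); (1,0); (2,0)];
 [:: (2,5); (3,5); (0,9); (4,1); (2,4)];
 [:: (2,5); (3,6); (4,1); (1,6); (2,4)];
 [:: (2,5); (3,6); (4,3); (1,4); (2,1)];
 [:: (2,5); (3,7); (4,0); (0,6); (1,0)];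
 [:: (2,5); (3,8); (1,1); (0,0); (4,2)];
 [:: (2,5); (3,8); (1,2); (0,6); (4,8)];
 [:: (2,5); (3,8); (4,0); (1,4); (2,4)];
 [:: (2,5); (3,8); (4,6); (0,9); (1,9)];
 [:: (2,5); (3,9); (4,1); (0,0); (1,7)];
 [:: (2,5); (4,0); (3,3); (0,1); (1,0)];
 [:: (2,5); (4,1); (3,1); (0,5); (1,0)];
 [:: (2,5); (4,2); (1,3); (0,2); (2,1)];
 [:: (2,5); (4,3); (3,9); (0,1); (1,4)];
 [:: (2,5); (4,5); (0,6); (3,2); (2,9)];
 [:: (2,5); (4,7); (0,2); (1,4); (4,0)];
 [:: (2,5); (4,8); (1,2); (3,4); (0,0)];
 [:: (2,5); (4,8); (3,3); (1,7); (0,6)];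
 [:: (2,6); (0,0); (3,7); (1,2); (2,2)];
 [:: (2,6); (0,5); (3,4); (1,4); (2,2)];
 [:: (2,6); (0,6); (4,0); (1,7); (2,3)];
 [:: (2,6); (0,8); (4,6); (1,8); (2,0)];
 [:: (2,6); (0,9); (1,9); (3,1); (2,7)];
 [:: (2,6); (1,0); (3,2); (4,1); (2,2)];
 [:: (2,6); (1,1); (4,3); (3,7); (2,3)];
 [:: (2,6); (1,6); (0,5); (3,6); (2,2)];
 [:: (2,6); (1,7); (0,9); (3,9); (2,7)];
 [:: (2,6); (3,0); (4,2); (0,1); (1,8)];
 [:: (2,6); (3,1); (1,4); (0,7); (4,5)];
 [:: (2,6); (3,1); (4,4); (0,1); (1,5)];
 [:: (2,6); (3,1); (4,5); (1,3); (2,4)];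
 [:: (2,6); (3,1); (4,7); (1,0); (2,5)];
 [:: (2,6); (3,2); (1,4); (0,4); (3,4)];
 [:: (2,6); (3,2); (4,9); (1,9); (2,2)];
 [:: (2,6); (3,3); (0,1); (4,1); (3,4)];
 [:: (2,6); (3,3); (1,1); (0,2); (2,0)];
 [:: (2,6); (3,3); (4,0); (0,9); (1,9)];
 [:: (2,6); (3,4); (1,7); (0,3); (3,3)];
 [:: (2,6); (3,5); (0,3); (4,1); (2,4)];
 [:: (2,6); (3,5); (1,1); (0,6); (2,9)];
 [:: (2,6); (3,6); (0,0); (4,2); (2,5)];
 [:: (2,6); (3,6); (0,3); (4,9); (1,0)];
 [:: (2,6); (3,6); (0,7); (1,1); (2,1)];
 [:: (2,6); (3,7); (4,2); (1,7); (2,5)];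
 [:: (2,6); (3,7); (4,4); (1,5); (2,2)];
 [:: (2,6); (3,8); (4,1); (0,7); (1,1)];
 [:: (2,6); (3,9); (1,2); (0,1); (4,3)];
 [:: (2,6); (3,9); (1,3); (0,7); (4,9)];
 [:: (2,6); (3,9); (4,1); (1,5); (2,5)];
 [:: (2,6); (3,9); (4,7); (0,0); (1,0)];
 [:: (2,6); (4,1); (3,4); (0,2); (1,1)];
 [:: (2,6); (4,2); (3,2); (0,6); (1,1)];
 [:: (2,6); (4,3); (1,4); (0,3); (2,2)];
 [:: (2,6); (4,4); (3,0); (0,2); (1,5)];
 [:: (2,6); (4,6); (0,7); (3,3); (2,0)];
 [:: (2,6); (4,8); (0,3); (1,5); (4,1)];
 [:: (2,6); (4,9); (1,3); (3,5); (0,1)];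
 [:: (2,6); (4,9); (3,4); (1,8); (0,7)];
 [:: (2,7); (0,0); (1,0); (3,2); (2,8)];
 [:: (2,7); (0,1); (3,8); (1,3); (2,3)];
 [:: (2,7); (0,6); (3,5); (1,5); (2,3)];
 [:: (2,7); (0,7); (4,1); (1,8); (2,4)];
 [:: (2,7); (0,9); (4,7); (1,9); (2,1)];
 [:: (2,7); (1,1); (3,3); (4,2); (2,3)];
 [:: (2,7); (1,2); (4,4); (3,8); (2,4)];
 [:: (2,7); (1,7); (0,6); (3,7); (2,3)];
 [:: (2,7); (1,8); (0,0); (3,0); (2,8)];
 [:: (2,7); (3,0); (1,3); (0,2); (4,4)];
 [:: (2,7); (3,0); (1,4); (0,8); (4,0)];
 [:: (2,7); (3,0); (4,2); (1,6); (2,6)];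
 [:: (2,7); (3,0); (4,8); (0,1); (1,1)];
 [:: (2,7); (3,1); (4,3); (0,2); (1,9)];
 [:: (2,7); (3,2); (1,5); (0,8); (4,6)];
 [:: (2,7); (3,2); (4,5); (0,2); (1,6)];
 [:: (2,7); (3,2); (4,6); (1,4); (2,5)];
 [:: (2,7); (3,2); (4,8); (1,1); (2,6)];
 [:: (2,7); (3,3); (1,5); (0,5); (3,5)];
 [:: (2,7); (3,3); (4,0); (1,0); (2,3)];
 [:: (2,7); (3,4); (0,2); (4,2); (3,5)];
 [:: (2,7); (3,4); (1,2); (0,3); (2,1)];
 [:: (2,7); (3,4); (4,1); (0,0); (1,0)];
 [:: (2,7); (3,5); (1,8); (0,4); (3,4)];
 [:: (2,7); (3,6); (0,4); (4,2); (2,5)];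
 [:: (2,7); (3,6); (1,2); (0,7); (2,0)];
 [:: (2,7); (3,7); (0,1); (4,3); (2,6)];
 [:: (2,7); (3,7); (0,4); (4,0); (1,1)];
 [:: (2,7); (3,7); (0,8); (1,2); (2,2)];
 [:: (2,7); (3,8); (4,3); (1,8); (2,6)];
 [:: (2,7); (3,8); (4,5); (1,6); (2,3)];
 [:: (2,7); (3,9); (4,2); (0,8); (1,2)];
 [:: (2,7); (4,0); (1,4); (3,6); (0,2)];
 [:: (2,7); (4,0); (3,5); (1,9); (0,8)];
 [:: (2,7); (4,2); (3,5); (0,3); (1,2)];
 [:: (2,7); (4,3); (3,3); (0,7); (1,2)];
 [:: (2,7); (4,4); (1,5); (0,4); (2,3)];
 [:: (2,7); (4,5); (3,1); (0,3); (1,6)];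
 [:: (2,7); (4,7); (0,8); (3,4); (2,1)];
 [:: (2,7); (4,9); (0,4); (1,6); (4,2)];
 [:: (2,8); (0,0); (4,8); (1,0); (2,2)];
 [:: (2,8); (0,1); (1,1); (3,3); (2,9)];
 [:: (2,8); (0,2); (3,9); (1,4); (2,4)];
 [:: (2,8); (0,7); (3,6); (1,6); (2,4)];
 [:: (2,8); (0,8); (4,2); (1,9); (2,5)];
 [:: (2,8); (1,2); (3,4); (4,3); (2,4)];
 [:: (2,8); (1,3); (4,5); (3,9); (2,5)];
 [:: (2,8); (1,8); (0,7); (3,8); (2,4)];
 [:: (2,8); (1,9); (0,1); (3,1); (2,9)];
 [:: (2,8); (3,0); (4,3); (0,9); (1,3)];
 [:: (2,8); (3,1); (1,4); (0,3); (4,5)];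
 [:: (2,8); (3,1); (1,5); (0,9); (4,1)];
 [:: (2,8); (3,1); (4,3); (1,7); (2,7)];
 [:: (2,8); (3,1); (4,9); (0,2); (1,2)];
 [:: (2,8); (3,2); (4,4); (0,3); (1,0)];
 [:: (2,8); (3,3); (1,6); (0,9); (4,7)];
 [:: (2,8); (3,3); (4,6); (0,3); (1,7)];
 [:: (2,8); (3,3); (4,7); (1,5); (2,6)];
 [:: (2,8); (3,3); (4,9); (1,2); (2,7)];
 [:: (2,8); (3,4); (1,6); (0,6); (3,6)];
 [:: (2,8); (3,4); (4,1); (1,1); (2,4)];
 [:: (2,8); (3,5); (0,3); (4,3); (3,6)];
 [:: (2,8); (3,5); (1,3); (0,4); (2,2)];
 [:: (2,8); (3,5); (4,2); (0,1); (1,1)];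
 [:: (2,8); (3,6); (1,9); (0,5); (3,5)];
 [:: (2,8); (3,7); (0,5); (4,3); (2,6)];
 [:: (2,8); (3,7); (1,3); (0,8); (2,1)];
 [:: (2,8); (3,8); (0,2); (4,4); (2,7)];
 [:: (2,8); (3,8); (0,5); (4,1); (1,2)];
 [:: (2,8); (3,8); (0,9); (1,3); (2,3)];
 [:: (2,8); (3,9); (4,4); (1,9); (2,7)];
 [:: (2,8); (3,9); (4,6); (1,7); (2,4)];
 [:: (2,8); (4,0); (0,5); (1,7); (4,3)];
 [:: (2,8); (4,1); (1,5); (3,7); (0,3)];
 [:: (2,8); (4,1); (3,6); (1,0); (0,9)];
 [:: (2,8); (4,3); (3,6); (0,4); (1,3)];
 [:: (2,8); (4,4); (3,4); (0,8); (1,3)];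
 [:: (2,8); (4,5); (1,6); (0,5); (2,4)];
 [:: (2,8); (4,6); (3,2); (0,4); (1,7)];
 [:: (2,8); (4,8); (0,9); (3,5); (2,2)];
 [:: (2,9); (0,1); (4,9); (1,1); (2,3)];
 [:: (2,9); (0,2); (1,2); (3,4); (2,0)];
 [:: (2,9); (0,3); (3,0); (1,5); (2,5)];
 [:: (2,9); (0,8); (3,7); (1,7); (2,5)];
 [:: (2,9); (0,9); (4,3); (1,0); (2,6)];
 [:: (2,9); (1,0); (0,2); (3,2); (2,0)];
 [:: (2,9); (1,3); (3,5); (4,4); (2,5)];
 [:: (2,9); (1,4); (4,6); (3,0); (2,6)];
 [:: (2,9); (1,9); (0,8); (3,9); (2,5)];
 [:: (2,9); (3,0); (4,5); (1,0); (2,8)];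
 [:: (2,9); (3,0); (4,7); (1,8); (2,5)];
 [:: (2,9); (3,1); (4,4); (0,0); (1,4)];
 [:: (2,9); (3,2); (1,5); (0,4); (4,6)];
 [:: (2,9); (3,2); (1,6); (0,0); (4,2)];
 [:: (2,9); (3,2); (4,0); (0,3); (1,3)];
 [:: (2,9); (3,2); (4,4); (1,8); (2,8)];
 [:: (2,9); (3,3); (4,5); (0,4); (1,1)];
 [:: (2,9); (3,4); (1,7); (0,0); (4,8)];
 [:: (2,9); (3,4); (4,0); (1,3); (2,8)];
 [:: (2,9); (3,4); (4,7); (0,4); (1,8)];
 [:: (2,9); (3,4); (4,8); (1,6); (2,7)];
 [:: (2,9); (3,5); (1,7); (0,7); (3,7)];
 [:: (2,9); (3,5); (4,2); (1,2); (2,5)];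
 [:: (2,9); (3,6); (0,4); (4,4); (3,7)];
 [:: (2,9); (3,6); (1,4); (0,5); (2,3)];
 [:: (2,9); (3,6); (4,3); (0,2); (1,2)];
 [:: (2,9); (3,7); (1,0); (0,6); (3,6)];
 [:: (2,9); (3,8); (0,6); (4,4); (2,7)];
 [:: (2,9); (3,8); (1,4); (0,9); (2,2)];
 [:: (2,9); (3,9); (0,0); (1,4); (2,4)];
 [:: (2,9); (3,9); (0,3); (4,5); (2,8)];
 [:: (2,9); (3,9); (0,6); (4,2); (1,3)];
 [:: (2,9); (4,1); (0,6); (1,8); (4,4)];
 [:: (2,9); (4,2); (1,6); (3,8); (0,4)];
 [:: (2,9); (4,2); (3,7); (1,1); (0,0)];
 [:: (2,9); (4,4); (3,7); (0,5); (1,4)];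
 [:: (2,9); (4,5); (3,5); (0,9); (1,4)];
 [:: (2,9); (4,6); (1,7); (0,6); (2,5)];
 [:: (2,9); (4,7); (3,3); (0,5); (1,8)];
 [:: (2,9); (4,9); (0,0); (3,6); (2,3)];
 [:: (3,0); (0,0); (1,1); (4,7); (3,4)];
 [:: (3,0); (0,2); (1,7); (2,9); (0,5)];
 [:: (3,0); (0,3); (2,7); (4,9); (1,5)];
 [:: (3,0); (0,3); (4,8); (2,2); (1,1)];
 [:: (3,0); (0,5); (4,8); (1,6); (2,5)];
 [:: (3,0); (0,6); (4,6); (1,0); (2,5)];
 [:: (3,0); (0,7); (2,8); (1,7); (3,6)];
 [:: (3,0); (0,8); (4,4); (1,6); (2,9)];
 [:: (3,0); (1,0); (0,4); (2,1); (3,7)];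
 [:: (3,0); (1,2); (0,0); (2,2); (3,4)];
 [:: (3,0); (1,3); (2,3); (4,5); (3,1)];
 [:: (3,0); (1,4); (4,1); (2,6); (3,6)];
 [:: (3,0); (1,9); (4,8); (2,8); (3,6)];
 [:: (3,0); (2,0); (1,9); (4,0); (3,6)];
 [:: (3,0); (2,1); (1,3); (4,3); (3,1)];
 [:: (3,0); (2,4); (4,6); (0,5); (3,6)];
 [:: (3,0); (2,5); (0,7); (4,1); (3,7)];
 [:: (3,0); (4,0); (1,1); (2,5); (3,5)];
 [:: (3,0); (4,0); (1,4); (0,6); (3,9)];
 [:: (3,0); (4,0); (1,7); (0,3); (2,4)];
 [:: (3,0); (4,1); (0,6); (2,1); (3,9)];
 [:: (3,0); (4,1); (0,8); (2,9); (3,6)];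
 [:: (3,0); (4,2); (0,5); (1,1); (2,5)];
 [:: (3,0); (4,3); (0,1); (1,4); (2,4)];
 [:: (3,0); (4,3); (0,5); (2,9); (3,9)];
 [:: (3,0); (4,3); (2,6); (1,5); (0,7)];
 [:: (3,0); (4,3); (2,7); (1,1); (0,3)];
 [:: (3,0); (4,4); (0,6); (1,5); (2,2)];
 [:: (3,0); (4,5); (0,1); (2,4); (3,9)];
 [:: (3,0); (4,5); (0,8); (1,5); (2,9)];
 [:: (3,0); (4,5); (0,9); (2,7); (3,8)];
 [:: (3,0); (4,5); (2,8); (1,1); (0,9)];
 [:: (3,0); (4,6); (0,3); (2,3); (3,6)];
 [:: (3,0); (4,6); (2,8); (1,8); (4,8)];
 [:: (3,0); (4,7); (0,4); (1,3); (2,3)];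
 [:: (3,0); (4,7); (1,5); (0,5); (4,8)];
 [:: (3,0); (4,7); (2,5); (1,6); (3,4)];
 [:: (3,0); (4,8); (2,1); (1,7); (4,7)];
 [:: (3,0); (4,9); (1,7); (0,5); (3,8)];
 [:: (3,0); (4,9); (2,5); (1,0); (3,3)];
 [:: (3,1); (0,1); (1,2); (4,8); (3,5)];
 [:: (3,1); (0,3); (1,8); (2,0); (0,6)];
 [:: (3,1); (0,4); (2,8); (4,0); (1,6)];
 [:: (3,1); (0,4); (4,9); (2,3); (1,2)];
 [:: (3,1); (0,6); (4,9); (1,7); (2,6)];
 [:: (3,1); (0,7); (4,7); (1,1); (2,6)];
 [:: (3,1); (0,8); (2,9); (1,8); (3,7)];
 [:: (3,1); (0,9); (4,5); (1,7); (2,0)];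
 [:: (3,1); (1,0); (4,9); (2,9); (3,7)];
 [:: (3,1); (1,1); (0,5); (2,2); (3,8)];
 [:: (3,1); (1,3); (0,1); (2,3); (3,5)];
 [:: (3,1); (1,4); (2,4); (4,6); (3,2)];
 [:: (3,1); (1,5); (4,2); (2,7); (3,7)];
 [:: (3,1); (2,1); (1,0); (4,1); (3,7)];
 [:: (3,1); (2,2); (1,4); (4,4); (3,2)];
 [:: (3,1); (2,5); (4,7); (0,6); (3,7)];
 [:: (3,1); (2,6); (0,8); (4,2); (3,8)];
 [:: (3,1); (4,0); (1,8); (0,6); (3,9)];
 [:: (3,1); (4,0); (2,6); (1,1); (3,4)];
 [:: (3,1); (4,1); (1,2); (2,6); (3,6)];
 [:: (3,1); (4,1); (1,5); (0,7); (3,0)];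
 [:: (3,1); (4,1); (1,8); (0,4); (2,5)];
 [:: (3,1); (4,2); (0,7); (2,2); (3,0)];
 [:: (3,1); (4,2); (0,9); (2,0); (3,7)];
 [:: (3,1); (4,3); (0,6); (1,2); (2,6)];
 [:: (3,1); (4,4); (0,2); (1,5); (2,5)];
 [:: (3,1); (4,4); (0,6); (2,0); (3,0)];
 [:: (3,1); (4,4); (2,7); (1,6); (0,8)];
 [:: (3,1); (4,4); (2,8); (1,2); (0,4)];
 [:: (3,1); (4,5); (0,7); (1,6); (2,3)];
 [:: (3,1); (4,6); (0,0); (2,8); (3,9)];
 [:: (3,1); (4,6); (0,2); (2,5); (3,0)];
 [:: (3,1); (4,6); (0,9); (1,6); (2,0)];
 [:: (3,1); (4,6); (2,9); (1,2); (0,0)];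
 [:: (3,1); (4,7); (0,4); (2,4); (3,7)];
 [:: (3,1); (4,7); (2,9); (1,9); (4,9)];
 [:: (3,1); (4,8); (0,5); (1,4); (2,4)];
 [:: (3,1); (4,8); (1,6); (0,6); (4,9)];
 [:: (3,1); (4,8); (2,6); (1,7); (3,5)];
 [:: (3,1); (4,9); (2,2); (1,8); (4,8)];
 [:: (3,2); (0,0); (4,6); (1,8); (2,1)];
 [:: (3,2); (0,2); (1,3); (4,9); (3,6)];
 [:: (3,2); (0,4); (1,9); (2,1); (0,7)];
 [:: (3,2); (0,5); (2,9); (4,1); (1,7)];
 [:: (3,2); (0,5); (4,0); (2,4); (1,3)];
 [:: (3,2); (0,7); (4,0); (1,8); (2,7)];
 [:: (3,2); (0,8); (4,8); (1,2); (2,7)];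
 [:: (3,2); (0,9); (2,0); (1,9); (3,8)];
 [:: (3,2); (1,1); (4,0); (2,0); (3,8)];
 [:: (3,2); (1,2); (0,6); (2,3); (3,9)];
 [:: (3,2); (1,4); (0,2); (2,4); (3,6)];
 [:: (3,2); (1,5); (2,5); (4,7); (3,3)];
 [:: (3,2); (1,6); (4,3); (2,8); (3,8)];
 [:: (3,2); (2,2); (1,1); (4,2); (3,8)];
 [:: (3,2); (2,3); (1,5); (4,5); (3,3)];
 [:: (3,2); (2,6); (4,8); (0,7); (3,8)];
 [:: (3,2); (2,7); (0,9); (4,3); (3,9)];
 [:: (3,2); (4,0); (2,3); (1,9); (4,9)];
 [:: (3,2); (4,1); (1,9); (0,7); (3,0)];
 [:: (3,2); (4,1); (2,7); (1,2); (3,5)];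
 [:: (3,2); (4,2); (1,3); (2,7); (3,7)];
 [:: (3,2); (4,2); (1,6); (0,8); (3,1)];
 [:: (3,2); (4,2); (1,9); (0,5); (2,6)];
 [:: (3,2); (4,3); (0,0); (2,1); (3,8)];
 [:: (3,2); (4,3); (0,8); (2,3); (3,1)];
 [:: (3,2); (4,4); (0,7); (1,3); (2,7)];
 [:: (3,2); (4,5); (0,3); (1,6); (2,6)];
 [:: (3,2); (4,5); (0,7); (2,1); (3,1)];
 [:: (3,2); (4,5); (2,8); (1,7); (0,9)];
 [:: (3,2); (4,5); (2,9); (1,3); (0,5)];
 [:: (3,2); (4,6); (0,8); (1,7); (2,4)];
 [:: (3,2); (4,7); (0,0); (1,7); (2,1)];
 [:: (3,2); (4,7); (0,1); (2,9); (3,0)];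
 [:: (3,2); (4,7); (0,3); (2,6); (3,1)];
 [:: (3,2); (4,7); (2,0); (1,3); (0,1)];
 [:: (3,2); (4,8); (0,5); (2,5); (3,8)];
 [:: (3,2); (4,8); (2,0); (1,0); (4,0)];
 [:: (3,2); (4,9); (0,6); (1,5); (2,5)];
 [:: (3,2); (4,9); (1,7); (0,7); (4,0)];
 [:: (3,2); (4,9); (2,7); (1,8); (3,6)];
 [:: (3,3); (0,0); (2,1); (1,0); (3,9)];
 [:: (3,3); (0,1); (4,7); (1,9); (2,2)];
 [:: (3,3); (0,3); (1,4); (4,0); (3,7)];
 [:: (3,3); (0,5); (1,0); (2,2); (0,8)];
 [:: (3,3); (0,6); (2,0); (4,2); (1,8)];
 [:: (3,3); (0,6); (4,1); (2,5); (1,4)];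
 [:: (3,3); (0,8); (4,1); (1,9); (2,8)];
 [:: (3,3); (0,9); (4,9); (1,3); (2,8)];
 [:: (3,3); (1,2); (4,1); (2,1); (3,9)];
 [:: (3,3); (1,3); (0,7); (2,4); (3,0)];
 [:: (3,3); (1,5); (0,3); (2,5); (3,7)];
 [:: (3,3); (1,6); (2,6); (4,8); (3,4)];
 [:: (3,3); (1,7); (4,4); (2,9); (3,9)];
 [:: (3,3); (2,3); (1,2); (4,3); (3,9)];
 [:: (3,3); (2,4); (1,6); (4,6); (3,4)];
 [:: (3,3); (2,7); (4,9); (0,8); (3,9)];
 [:: (3,3); (2,8); (0,0); (4,4); (3,0)];
 [:: (3,3); (4,0); (0,7); (1,6); (2,6)];
 [:: (3,3); (4,0); (1,8); (0,8); (4,1)];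
 [:: (3,3); (4,0); (2,8); (1,9); (3,7)];
 [:: (3,3); (4,1); (2,4); (1,0); (4,0)];
 [:: (3,3); (4,2); (1,0); (0,8); (3,1)];
 [:: (3,3); (4,2); (2,8); (1,3); (3,6)];
 [:: (3,3); (4,3); (1,0); (0,6); (2,7)];
 [:: (3,3); (4,3); (1,4); (2,8); (3,8)];
 [:: (3,3); (4,3); (1,7); (0,9); (3,2)];
 [:: (3,3); (4,4); (0,1); (2,2); (3,9)];
 [:: (3,3); (4,4); (0,9); (2,4); (3,2)];
 [:: (3,3); (4,5); (0,8); (1,4); (2,8)];
 [:: (3,3); (4,6); (0,4); (1,7); (2,7)];
 [:: (3,3); (4,6); (0,8); (2,2); (3,2)];
 [:: (3,3); (4,6); (2,0); (1,4); (0,6)];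
 [:: (3,3); (4,6); (2,9); (1,8); (0,0)];
 [:: (3,3); (4,7); (0,9); (1,8); (2,5)];
 [:: (3,3); (4,8); (0,1); (1,8); (2,2)];
 [:: (3,3); (4,8); (0,2); (2,0); (3,1)];
 [:: (3,3); (4,8); (0,4); (2,7); (3,2)];
 [:: (3,3); (4,8); (2,1); (1,4); (0,2)];
 [:: (3,3); (4,9); (0,6); (2,6); (3,9)];
 [:: (3,3); (4,9); (2,1); (1,1); (4,1)];
 [:: (3,4); (0,0); (4,0); (1,4); (2,9)];
 [:: (3,4); (0,1); (2,2); (1,1); (3,0)];
 [:: (3,4); (0,2); (4,8); (1,0); (2,3)];
 [:: (3,4); (0,4); (1,5); (4,1); (3,8)];
 [:: (3,4); (0,6); (1,1); (2,3); (0,9)];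
 [:: (3,4); (0,7); (2,1); (4,3); (1,9)];
 [:: (3,4); (0,7); (4,2); (2,6); (1,5)];
 [:: (3,4); (0,9); (4,2); (1,0); (2,9)];
 [:: (3,4); (1,3); (4,2); (2,2); (3,0)];
 [:: (3,4); (1,4); (0,8); (2,5); (3,1)];
 [:: (3,4); (1,6); (0,4); (2,6); (3,8)];
 [:: (3,4); (1,7); (2,7); (4,9); (3,5)];
 [:: (3,4); (1,8); (4,5); (2,0); (3,0)];
 [:: (3,4); (2,4); (1,3); (4,4); (3,0)];
 [:: (3,4); (2,5); (1,7); (4,7); (3,5)];
 [:: (3,4); (2,8); (4,0); (0,9); (3,0)];
 [:: (3,4); (2,9); (0,1); (4,5); (3,1)];
 [:: (3,4); (4,0); (0,7); (2,7); (3,0)];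
 [:: (3,4); (4,0); (2,2); (1,2); (4,2)];
 [:: (3,4); (4,1); (0,8); (1,7); (2,7)];
 [:: (3,4); (4,1); (1,9); (0,9); (4,2)];
 [:: (3,4); (4,1); (2,9); (1,0); (3,8)];
 [:: (3,4); (4,2); (2,5); (1,1); (4,1)];
 [:: (3,4); (4,3); (1,1); (0,9); (3,2)];
 [:: (3,4); (4,3); (2,9); (1,4); (3,7)];
 [:: (3,4); (4,4); (1,1); (0,7); (2,8)];
 [:: (3,4); (4,4); (1,5); (2,9); (3,9)];
 [:: (3,4); (4,4); (1,8); (0,0); (3,3)];
 [:: (3,4); (4,5); (0,0); (2,5); (3,3)];
 [:: (3,4); (4,5); (0,2); (2,3); (3,0)];
 [:: (3,4); (4,6); (0,9); (1,5); (2,9)];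
 [:: (3,4); (4,7); (0,5); (1,8); (2,8)];
 [:: (3,4); (4,7); (0,9); (2,3); (3,3)];
 [:: (3,4); (4,7); (2,0); (1,9); (0,1)];
 [:: (3,4); (4,7); (2,1); (1,5); (0,7)];
 [:: (3,4); (4,8); (0,0); (1,9); (2,6)];
 [:: (3,4); (4,9); (0,2); (1,9); (2,3)];
 [:: (3,4); (4,9); (0,3); (2,1); (3,2)];
 [:: (3,4); (4,9); (0,5); (2,8); (3,3)];
 [:: (3,4); (4,9); (2,2); (1,5); (0,3)];
 [:: (3,5); (0,0); (4,3); (1,1); (2,0)];
 [:: (3,5); (0,1); (4,1); (1,5); (2,0)];
 [:: (3,5); (0,2); (2,3); (1,2); (3,1)];
 [:: (3,5); (0,3); (4,9); (1,1); (2,4)];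
 [:: (3,5); (0,5); (1,6); (4,2); (3,9)];
 [:: (3,5); (0,7); (1,2); (2,4); (0,0)];
 [:: (3,5); (0,8); (2,2); (4,4); (1,0)];
 [:: (3,5); (0,8); (4,3); (2,7); (1,6)];
 [:: (3,5); (1,4); (4,3); (2,3); (3,1)];
 [:: (3,5); (1,5); (0,9); (2,6); (3,2)];
 [:: (3,5); (1,7); (0,5); (2,7); (3,9)];
 [:: (3,5); (1,8); (2,8); (4,0); (3,6)];
 [:: (3,5); (1,9); (4,6); (2,1); (3,1)];
 [:: (3,5); (2,0); (0,2); (4,6); (3,2)];
 [:: (3,5); (2,5); (1,4); (4,5); (3,1)];
 [:: (3,5); (2,6); (1,8); (4,8); (3,6)];
 [:: (3,5); (2,9); (4,1); (0,0); (3,1)];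
 [:: (3,5); (4,0); (0,3); (1,0); (2,4)];
 [:: (3,5); (4,0); (0,4); (2,2); (3,3)];
 [:: (3,5); (4,0); (0,6); (2,9); (3,4)];
 [:: (3,5); (4,0); (2,3); (1,6); (0,4)];
 [:: (3,5); (4,1); (0,8); (2,8); (3,1)];
 [:: (3,5); (4,1); (2,3); (1,3); (4,3)];
 [:: (3,5); (4,2); (0,9); (1,8); (2,8)];
 [:: (3,5); (4,2); (1,0); (0,0); (4,3)];
 [:: (3,5); (4,2); (2,0); (1,1); (3,9)];
 [:: (3,5); (4,3); (2,6); (1,2); (4,2)];
 [:: (3,5); (4,4); (1,2); (0,0); (3,3)];
 [:: (3,5); (4,4); (2,0); (1,5); (3,8)];
 [:: (3,5); (4,5); (1,2); (0,8); (2,9)];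
 [:: (3,5); (4,5); (1,6); (2,0); (3,0)];
 [:: (3,5); (4,5); (1,9); (0,1); (3,4)];
 [:: (3,5); (4,6); (0,1); (2,6); (3,4)];
 [:: (3,5); (4,6); (0,3); (2,4); (3,1)];
 [:: (3,5); (4,7); (0,0); (1,6); (2,0)];
 [:: (3,5); (4,8); (0,0); (2,4); (3,4)];
 [:: (3,5); (4,8); (0,6); (1,9); (2,9)];
 [:: (3,5); (4,8); (2,1); (1,0); (0,2)];
 [:: (3,5); (4,8); (2,2); (1,6); (0,8)];
 [:: (3,5); (4,9); (0,1); (1,0); (2,7)];
 [:: (3,6); (0,1); (4,4); (1,2); (2,1)];
 [:: (3,6); (0,2); (4,2); (1,6); (2,1)];
 [:: (3,6); (0,3); (2,4); (1,3); (3,2)];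
 [:: (3,6); (0,4); (4,0); (1,2); (2,5)];
 [:: (3,6); (0,6); (1,7); (4,3); (3,0)];
 [:: (3,6); (0,8); (1,3); (2,5); (0,1)];
 [:: (3,6); (0,9); (2,3); (4,5); (1,1)];
 [:: (3,6); (0,9); (4,4); (2,8); (1,7)];
 [:: (3,6); (1,0); (4,7); (2,2); (3,2)];
 [:: (3,6); (1,5); (4,4); (2,4); (3,2)];
 [:: (3,6); (1,6); (0,0); (2,7); (3,3)];
 [:: (3,6); (1,8); (0,6); (2,8); (3,0)];
 [:: (3,6); (1,9); (2,9); (4,1); (3,7)];
 [:: (3,6); (2,0); (4,2); (0,1); (3,2)];
 [:: (3,6); (2,1); (0,3); (4,7); (3,3)];
 [:: (3,6); (2,6); (1,5); (4,6); (3,2)];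
 [:: (3,6); (2,7); (1,9); (4,9); (3,7)];
 [:: (3,6); (4,0); (0,2); (1,1); (2,8)];
 [:: (3,6); (4,1); (0,4); (1,1); (2,5)];
 [:: (3,6); (4,1); (0,5); (2,3); (3,4)];
 [:: (3,6); (4,1); (0,7); (2,0); (3,5)];
 [:: (3,6); (4,1); (2,4); (1,7); (0,5)];
 [:: (3,6); (4,2); (0,9); (2,9); (3,2)];
 [:: (3,6); (4,2); (2,4); (1,4); (4,4)];
 [:: (3,6); (4,3); (0,0); (1,9); (2,9)];
 [:: (3,6); (4,3); (1,1); (0,1); (4,4)];
 [:: (3,6); (4,3); (2,1); (1,2); (3,0)];
 [:: (3,6); (4,4); (2,7); (1,3); (4,3)];
 [:: (3,6); (4,5); (1,3); (0,1); (3,4)];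
 [:: (3,6); (4,5); (2,1); (1,6); (3,9)];
 [:: (3,6); (4,6); (1,0); (0,2); (3,5)];
 [:: (3,6); (4,6); (1,3); (0,9); (2,0)];
 [:: (3,6); (4,6); (1,7); (2,1); (3,1)];
 [:: (3,6); (4,7); (0,2); (2,7); (3,5)];
 [:: (3,6); (4,7); (0,4); (2,5); (3,2)];
 [:: (3,6); (4,8); (0,1); (1,7); (2,1)];
 [:: (3,6); (4,9); (0,1); (2,5); (3,5)];
 [:: (3,6); (4,9); (0,7); (1,0); (2,0)];
 [:: (3,6); (4,9); (2,2); (1,1); (0,3)];
 [:: (3,6); (4,9); (2,3); (1,7); (0,9)];
 [:: (3,7); (0,0); (2,4); (4,6); (1,2)];
 [:: (3,7); (0,0); (4,5); (2,9); (1,8)];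
 [:: (3,7); (0,2); (4,5); (1,3); (2,2)];
 [:: (3,7); (0,3); (4,3); (1,7); (2,2)];
 [:: (3,7); (0,4); (2,5); (1,4); (3,3)];
 [:: (3,7); (0,5); (4,1); (1,3); (2,6)];
 [:: (3,7); (0,7); (1,8); (4,4); (3,1)];
 [:: (3,7); (0,9); (1,4); (2,6); (0,2)];
 [:: (3,7); (1,0); (2,0); (4,2); (3,8)];
 [:: (3,7); (1,1); (4,8); (2,3); (3,3)];
 [:: (3,7); (1,6); (4,5); (2,5); (3,3)];
 [:: (3,7); (1,7); (0,1); (2,8); (3,4)];
 [:: (3,7); (1,9); (0,7); (2,9); (3,1)];
 [:: (3,7); (2,1); (4,3); (0,2); (3,3)];
 [:: (3,7); (2,2); (0,4); (4,8); (3,4)];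
 [:: (3,7); (2,7); (1,6); (4,7); (3,3)];
 [:: (3,7); (2,8); (1,0); (4,0); (3,8)];
 [:: (3,7); (4,0); (0,2); (2,6); (3,6)];
 [:: (3,7); (4,0); (0,8); (1,1); (2,1)];
 [:: (3,7); (4,0); (2,3); (1,2); (0,4)];
 [:: (3,7); (4,0); (2,4); (1,8); (0,0)];
 [:: (3,7); (4,1); (0,3); (1,2); (2,9)];
 [:: (3,7); (4,2); (0,5); (1,2); (2,6)];
 [:: (3,7); (4,2); (0,6); (2,4); (3,5)];
 [:: (3,7); (4,2); (0,8); (2,1); (3,6)];
 [:: (3,7); (4,2); (2,5); (1,8); (0,6)];
 [:: (3,7); (4,3); (0,0); (2,0); (3,3)];
 [:: (3,7); (4,3); (2,5); (1,5); (4,5)];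
 [:: (3,7); (4,4); (0,1); (1,0); (2,0)];
 [:: (3,7); (4,4); (1,2); (0,2); (4,5)];
 [:: (3,7); (4,4); (2,2); (1,3); (3,1)];
 [:: (3,7); (4,5); (2,8); (1,4); (4,4)];
 [:: (3,7); (4,6); (1,4); (0,2); (3,5)];
 [:: (3,7); (4,6); (2,2); (1,7); (3,0)];
 [:: (3,7); (4,7); (1,1); (0,3); (3,6)];
 [:: (3,7); (4,7); (1,4); (0,0); (2,1)];
 [:: (3,7); (4,7); (1,8); (2,2); (3,2)];
 [:: (3,7); (4,8); (0,3); (2,8); (3,6)];
 [:: (3,7); (4,8); (0,5); (2,6); (3,3)];
 [:: (3,7); (4,9); (0,2); (1,8); (2,2)];
 [:: (3,8); (0,0); (1,5); (2,7); (0,3)];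
 [:: (3,8); (0,1); (2,5); (4,7); (1,3)];
 [:: (3,8); (0,1); (4,6); (2,0); (1,9)];
 [:: (3,8); (0,3); (4,6); (1,4); (2,3)];
 [:: (3,8); (0,4); (4,4); (1,8); (2,3)];
 [:: (3,8); (0,5); (2,6); (1,5); (3,4)];
 [:: (3,8); (0,6); (4,2); (1,4); (2,7)];
 [:: (3,8); (0,8); (1,9); (4,5); (3,2)];
 [:: (3,8); (1,0); (0,8); (2,0); (3,2)];
 [:: (3,8); (1,1); (2,1); (4,3); (3,9)];
 [:: (3,8); (1,2); (4,9); (2,4); (3,4)];
 [:: (3,8); (1,7); (4,6); (2,6); (3,4)];
 [:: (3,8); (1,8); (0,2); (2,9); (3,5)];
 [:: (3,8); (2,2); (4,4); (0,3); (3,4)];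
 [:: (3,8); (2,3); (0,5); (4,9); (3,5)];
 [:: (3,8); (2,8); (1,7); (4,8); (3,4)];
 [:: (3,8); (2,9); (1,1); (4,1); (3,9)];
 [:: (3,8); (4,0); (0,3); (1,9); (2,3)];
 [:: (3,8); (4,1); (0,3); (2,7); (3,7)];
 [:: (3,8); (4,1); (0,9); (1,2); (2,2)];
 [:: (3,8); (4,1); (2,4); (1,3); (0,5)];
 [:: (3,8); (4,1); (2,5); (1,9); (0,1)];
 [:: (3,8); (4,2); (0,4); (1,3); (2,0)];
 [:: (3,8); (4,3); (0,6); (1,3); (2,7)];
 [:: (3,8); (4,3); (0,7); (2,5); (3,6)];
 [:: (3,8); (4,3); (0,9); (2,2); (3,7)];
 [:: (3,8); (4,3); (2,6); (1,9); (0,7)];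
 [:: (3,8); (4,4); (0,1); (2,1); (3,4)];
 [:: (3,8); (4,4); (2,6); (1,6); (4,6)];
 [:: (3,8); (4,5); (0,2); (1,1); (2,1)];
 [:: (3,8); (4,5); (1,3); (0,3); (4,6)];
 [:: (3,8); (4,5); (2,3); (1,4); (3,2)];
 [:: (3,8); (4,6); (2,9); (1,5); (4,5)];
 [:: (3,8); (4,7); (1,5); (0,3); (3,6)];
 [:: (3,8); (4,7); (2,3); (1,8); (3,1)];
 [:: (3,8); (4,8); (1,2); (0,4); (3,7)];
 [:: (3,8); (4,8); (1,5); (0,1); (2,2)];
 [:: (3,8); (4,8); (1,9); (2,3); (3,3)];
 [:: (3,8); (4,9); (0,4); (2,9); (3,7)];
 [:: (3,8); (4,9); (0,6); (2,7); (3,4)];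
 [:: (3,9); (0,1); (1,6); (2,8); (0,4)];
 [:: (3,9); (0,2); (2,6); (4,8); (1,4)];
 [:: (3,9); (0,2); (4,7); (2,1); (1,0)];
 [:: (3,9); (0,4); (4,7); (1,5); (2,4)];
 [:: (3,9); (0,5); (4,5); (1,9); (2,4)];
 [:: (3,9); (0,6); (2,7); (1,6); (3,5)];
 [:: (3,9); (0,7); (4,3); (1,5); (2,8)];
 [:: (3,9); (0,9); (1,0); (4,6); (3,3)];
 [:: (3,9); (1,1); (0,9); (2,1); (3,3)];
 [:: (3,9); (1,2); (2,2); (4,4); (3,0)];
 [:: (3,9); (1,3); (4,0); (2,5); (3,5)];
 [:: (3,9); (1,8); (4,7); (2,7); (3,5)];
 [:: (3,9); (1,9); (0,3); (2,0); (3,6)];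
 [:: (3,9); (2,0); (1,2); (4,2); (3,0)];
 [:: (3,9); (2,3); (4,5); (0,4); (3,5)];
 [:: (3,9); (2,4); (0,6); (4,0); (3,6)];
 [:: (3,9); (2,9); (1,8); (4,9); (3,5)];
 [:: (3,9); (4,0); (0,5); (2,0); (3,8)];
 [:: (3,9); (4,0); (0,7); (2,8); (3,5)];
 [:: (3,9); (4,1); (0,4); (1,0); (2,4)];
 [:: (3,9); (4,2); (0,0); (1,3); (2,3)];
 [:: (3,9); (4,2); (0,4); (2,8); (3,8)];
 [:: (3,9); (4,2); (2,5); (1,4); (0,6)];
 [:: (3,9); (4,2); (2,6); (1,0); (0,2)];
 [:: (3,9); (4,3); (0,5); (1,4); (2,1)];
 [:: (3,9); (4,4); (0,0); (2,3); (3,8)];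
 [:: (3,9); (4,4); (0,7); (1,4); (2,8)];
 [:: (3,9); (4,4); (0,8); (2,6); (3,7)];
 [:: (3,9); (4,4); (2,7); (1,0); (0,8)];
 [:: (3,9); (4,5); (0,2); (2,2); (3,5)];
 [:: (3,9); (4,5); (2,7); (1,7); (4,7)];
 [:: (3,9); (4,6); (0,3); (1,2); (2,2)];
 [:: (3,9); (4,6); (1,4); (0,4); (4,7)];
 [:: (3,9); (4,6); (2,4); (1,5); (3,3)];
 [:: (3,9); (4,7); (2,0); (1,6); (4,6)];
 [:: (3,9); (4,8); (1,6); (0,4); (3,7)];
 [:: (3,9); (4,8); (2,4); (1,9); (3,2)];
 [:: (3,9); (4,9); (1,0); (2,4); (3,4)];
 [:: (3,9); (4,9); (1,3); (0,5); (3,8)];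
 [:: (3,9); (4,9); (1,6); (0,2); (2,3)];
 [:: (4,0); (0,0); (2,1); (3,5); (4,5)];
 [:: (4,0); (0,0); (2,4); (1,6); (4,9)];
 [:: (4,0); (0,0); (2,7); (1,3); (3,4)];
 [:: (4,0); (0,1); (1,6); (3,1); (4,9)];
 [:: (4,0); (0,1); (1,8); (3,9); (4,6)];
 [:: (4,0); (0,2); (1,5); (2,1); (3,5)];
 [:: (4,0); (0,3); (1,1); (2,4); (3,4)];
 [:: (4,0); (0,3); (1,5); (3,9); (4,9)];
 [:: (4,0); (0,3); (3,6); (2,5); (1,7)];
 [:: (4,0); (0,3); (3,7); (2,1); (1,3)];
 [:: (4,0); (0,4); (1,6); (2,5); (3,2)];
 [:: (4,0); (0,5); (1,1); (3,4); (4,9)];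
 [:: (4,0); (0,5); (1,8); (2,5); (3,9)];
 [:: (4,0); (0,5); (1,9); (3,7); (4,8)];
 [:: (4,0); (0,5); (3,8); (2,1); (1,9)];
 [:: (4,0); (0,6); (1,3); (3,3); (4,6)];
 [:: (4,0); (0,6); (3,8); (2,8); (0,8)];
 [:: (4,0); (0,7); (1,4); (2,3); (3,3)];
 [:: (4,0); (0,7); (2,5); (1,5); (0,8)];
 [:: (4,0); (0,7); (3,5); (2,6); (4,4)];
 [:: (4,0); (0,8); (3,1); (2,7); (0,7)];
 [:: (4,0); (0,9); (2,7); (1,5); (4,8)];
 [:: (4,0); (0,9); (3,5); (2,0); (4,3)];
 [:: (4,0); (1,0); (2,1); (0,7); (4,4)];
 [:: (4,0); (1,2); (2,7); (3,9); (1,5)];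
 [:: (4,0); (1,3); (0,8); (3,2); (2,1)];
 [:: (4,0); (1,3); (3,7); (0,9); (2,5)];
 [:: (4,0); (1,5); (0,8); (2,6); (3,5)];
 [:: (4,0); (1,6); (0,6); (2,0); (3,5)];
 [:: (4,0); (1,7); (3,8); (2,7); (4,6)];
 [:: (4,0); (1,8); (0,4); (2,6); (3,9)];
 [:: (4,0); (2,0); (1,4); (3,1); (4,7)];
 [:: (4,0); (2,2); (1,0); (3,2); (4,4)];
 [:: (4,0); (2,3); (3,3); (0,5); (4,1)];
 [:: (4,0); (2,4); (0,1); (3,6); (4,6)];
 [:: (4,0); (2,9); (0,8); (3,8); (4,6)];
 [:: (4,0); (3,0); (2,9); (0,0); (4,6)];
 [:: (4,0); (3,1); (2,3); (0,3); (4,1)];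
 [:: (4,0); (3,4); (0,6); (1,5); (4,6)];
 [:: (4,0); (3,5); (1,7); (0,1); (4,7)];
 [:: (4,1); (0,0); (2,8); (1,6); (4,9)];
 [:: (4,1); (0,0); (3,6); (2,1); (4,4)];
 [:: (4,1); (0,1); (2,2); (3,6); (4,6)];
 [:: (4,1); (0,1); (2,5); (1,7); (4,0)];
 [:: (4,1); (0,1); (2,8); (1,4); (3,5)];
 [:: (4,1); (0,2); (1,7); (3,2); (4,0)];
 [:: (4,1); (0,2); (1,9); (3,0); (4,7)];
 [:: (4,1); (0,3); (1,6); (2,2); (3,6)];
 [:: (4,1); (0,4); (1,2); (2,5); (3,5)];
 [:: (4,1); (0,4); (1,6); (3,0); (4,0)];
 [:: (4,1); (0,4); (3,7); (2,6); (1,8)];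
 [:: (4,1); (0,4); (3,8); (2,2); (1,4)];
 [:: (4,1); (0,5); (1,7); (2,6); (3,3)];
 [:: (4,1); (0,6); (1,0); (3,8); (4,9)];
 [:: (4,1); (0,6); (1,2); (3,5); (4,0)];
 [:: (4,1); (0,6); (1,9); (2,6); (3,0)];
 [:: (4,1); (0,6); (3,9); (2,2); (1,0)];
 [:: (4,1); (0,7); (1,4); (3,4); (4,7)];
 [:: (4,1); (0,7); (3,9); (2,9); (0,9)];
 [:: (4,1); (0,8); (1,5); (2,4); (3,4)];
 [:: (4,1); (0,8); (2,6); (1,6); (0,9)];
 [:: (4,1); (0,8); (3,6); (2,7); (4,5)];
 [:: (4,1); (0,9); (3,2); (2,8); (0,8)];
 [:: (4,1); (1,1); (2,2); (0,8); (4,5)];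
 [:: (4,1); (1,3); (2,8); (3,0); (1,6)];
 [:: (4,1); (1,4); (0,9); (3,3); (2,2)];
 [:: (4,1); (1,4); (3,8); (0,0); (2,6)];
 [:: (4,1); (1,6); (0,9); (2,7); (3,6)];
 [:: (4,1); (1,7); (0,7); (2,1); (3,6)];
 [:: (4,1); (1,8); (3,9); (2,8); (4,7)];
 [:: (4,1); (1,9); (0,5); (2,7); (3,0)];
 [:: (4,1); (2,0); (0,9); (3,9); (4,7)];
 [:: (4,1); (2,1); (1,5); (3,2); (4,8)];
 [:: (4,1); (2,3); (1,1); (3,3); (4,5)];
 [:: (4,1); (2,4); (3,4); (0,6); (4,2)];
 [:: (4,1); (2,5); (0,2); (3,7); (4,7)];
 [:: (4,1); (3,1); (2,0); (0,1); (4,7)];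
 [:: (4,1); (3,2); (2,4); (0,4); (4,2)];
 [:: (4,1); (3,5); (0,7); (1,6); (4,7)];
 [:: (4,1); (3,6); (1,8); (0,2); (4,8)];
 [:: (4,2); (0,0); (3,3); (2,9); (0,9)];
 [:: (4,2); (0,1); (2,9); (1,7); (4,0)];
 [:: (4,2); (0,1); (3,7); (2,2); (4,5)];
 [:: (4,2); (0,2); (2,3); (3,7); (4,7)];
 [:: (4,2); (0,2); (2,6); (1,8); (4,1)];
 [:: (4,2); (0,2); (2,9); (1,5); (3,6)];
 [:: (4,2); (0,3); (1,0); (3,1); (4,8)];
 [:: (4,2); (0,3); (1,8); (3,3); (4,1)];
 [:: (4,2); (0,4); (1,7); (2,3); (3,7)];
 [:: (4,2); (0,5); (1,3); (2,6); (3,6)];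
 [:: (4,2); (0,5); (1,7); (3,1); (4,1)];
 [:: (4,2); (0,5); (3,8); (2,7); (1,9)];
 [:: (4,2); (0,5); (3,9); (2,3); (1,5)];
 [:: (4,2); (0,6); (1,8); (2,7); (3,4)];
 [:: (4,2); (0,7); (1,0); (2,7); (3,1)];
 [:: (4,2); (0,7); (1,1); (3,9); (4,0)];
 [:: (4,2); (0,7); (1,3); (3,6); (4,1)];
 [:: (4,2); (0,7); (3,0); (2,3); (1,1)];
 [:: (4,2); (0,8); (1,5); (3,5); (4,8)];
 [:: (4,2); (0,8); (3,0); (2,0); (0,0)];
 [:: (4,2); (0,9); (1,6); (2,5); (3,5)];
 [:: (4,2); (0,9); (2,7); (1,7); (0,0)];
 [:: (4,2); (0,9); (3,7); (2,8); (4,6)];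
 [:: (4,2); (1,0); (0,6); (2,8); (3,1)];
 [:: (4,2); (1,2); (2,3); (0,9); (4,6)];
 [:: (4,2); (1,4); (2,9); (3,1); (1,7)];
 [:: (4,2); (1,5); (0,0); (3,4); (2,3)];
 [:: (4,2); (1,5); (3,9); (0,1); (2,7)];
 [:: (4,2); (1,7); (0,0); (2,8); (3,7)];
 [:: (4,2); (1,8); (0,8); (2,2); (3,7)];
 [:: (4,2); (1,9); (3,0); (2,9); (4,8)];
 [:: (4,2); (2,1); (0,0); (3,0); (4,8)];
 [:: (4,2); (2,2); (1,6); (3,3); (4,9)];
 [:: (4,2); (2,4); (1,2); (3,4); (4,6)];
 [:: (4,2); (2,5); (3,5); (0,7); (4,3)];
 [:: (4,2); (2,6); (0,3); (3,8); (4,8)];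
 [:: (4,2); (3,2); (2,1); (0,2); (4,8)];
 [:: (4,2); (3,3); (2,5); (0,5); (4,3)];
 [:: (4,2); (3,6); (0,8); (1,7); (4,8)];
 [:: (4,2); (3,7); (1,9); (0,3); (4,9)];
 [:: (4,3); (0,0); (1,7); (2,6); (3,6)];
 [:: (4,3); (0,0); (2,8); (1,8); (0,1)];
 [:: (4,3); (0,0); (3,8); (2,9); (4,7)];
 [:: (4,3); (0,1); (3,4); (2,0); (0,0)];
 [:: (4,3); (0,2); (2,0); (1,8); (4,1)];
 [:: (4,3); (0,2); (3,8); (2,3); (4,6)];
 [:: (4,3); (0,3); (2,0); (1,6); (3,7)];
 [:: (4,3); (0,3); (2,4); (3,8); (4,8)];
 [:: (4,3); (0,3); (2,7); (1,9); (4,2)];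
 [:: (4,3); (0,4); (1,1); (3,2); (4,9)];
 [:: (4,3); (0,4); (1,9); (3,4); (4,2)];
 [:: (4,3); (0,5); (1,8); (2,4); (3,8)];
 [:: (4,3); (0,6); (1,4); (2,7); (3,7)];
 [:: (4,3); (0,6); (1,8); (3,2); (4,2)];
 [:: (4,3); (0,6); (3,0); (2,4); (1,6)];
 [:: (4,3); (0,6); (3,9); (2,8); (1,0)];
 [:: (4,3); (0,7); (1,9); (2,8); (3,5)];
 [:: (4,3); (0,8); (1,1); (2,8); (3,2)];
 [:: (4,3); (0,8); (1,2); (3,0); (4,1)];
 [:: (4,3); (0,8); (1,4); (3,7); (4,2)];
 [:: (4,3); (0,8); (3,1); (2,4); (1,2)];
 [:: (4,3); (0,9); (1,6); (3,6); (4,9)];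
 [:: (4,3); (0,9); (3,1); (2,1); (0,1)];
 [:: (4,3); (1,0); (3,1); (2,0); (4,9)];
 [:: (4,3); (1,1); (0,7); (2,9); (3,2)];
 [:: (4,3); (1,3); (2,4); (0,0); (4,7)];
 [:: (4,3); (1,5); (2,0); (3,2); (1,8)];
 [:: (4,3); (1,6); (0,1); (3,5); (2,4)];
 [:: (4,3); (1,6); (3,0); (0,2); (2,8)];
 [:: (4,3); (1,8); (0,1); (2,9); (3,8)];
 [:: (4,3); (1,9); (0,9); (2,3); (3,8)];
 [:: (4,3); (2,2); (0,1); (3,1); (4,9)];
 [:: (4,3); (2,3); (1,7); (3,4); (4,0)];
 [:: (4,3); (2,5); (1,3); (3,5); (4,7)];
 [:: (4,3); (2,6); (3,6); (0,8); (4,4)];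
 [:: (4,3); (2,7); (0,4); (3,9); (4,9)];
 [:: (4,3); (3,3); (2,2); (0,3); (4,9)];
 [:: (4,3); (3,4); (2,6); (0,6); (4,4)];
 [:: (4,3); (3,7); (0,9); (1,8); (4,9)];
 [:: (4,3); (3,8); (1,0); (0,4); (4,0)];
 [:: (4,4); (0,0); (1,7); (3,7); (4,0)];
 [:: (4,4); (0,0); (3,2); (2,2); (0,2)];
 [:: (4,4); (0,1); (1,8); (2,7); (3,7)];
 [:: (4,4); (0,1); (2,9); (1,9); (0,2)];
 [:: (4,4); (0,1); (3,9); (2,0); (4,8)];
 [:: (4,4); (0,2); (3,5); (2,1); (0,1)];
 [:: (4,4); (0,3); (2,1); (1,9); (4,2)];
 [:: (4,4); (0,3); (3,9); (2,4); (4,7)];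
 [:: (4,4); (0,4); (2,1); (1,7); (3,8)];
 [:: (4,4); (0,4); (2,5); (3,9); (4,9)];
 [:: (4,4); (0,4); (2,8); (1,0); (4,3)];
 [:: (4,4); (0,5); (1,0); (3,5); (4,3)];
 [:: (4,4); (0,5); (1,2); (3,3); (4,0)];
 [:: (4,4); (0,6); (1,9); (2,5); (3,9)];
 [:: (4,4); (0,7); (1,5); (2,8); (3,8)];
 [:: (4,4); (0,7); (1,9); (3,3); (4,3)];
 [:: (4,4); (0,7); (3,0); (2,9); (1,1)];
 [:: (4,4); (0,7); (3,1); (2,5); (1,7)];
 [:: (4,4); (0,8); (1,0); (2,9); (3,6)];
 [:: (4,4); (0,9); (1,2); (2,9); (3,3)];
 [:: (4,4); (0,9); (1,3); (3,1); (4,2)];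
 [:: (4,4); (0,9); (1,5); (3,8); (4,3)];
 [:: (4,4); (0,9); (3,2); (2,5); (1,3)];
 [:: (4,4); (1,0); (0,0); (2,4); (3,9)];
 [:: (4,4); (1,1); (3,2); (2,1); (4,0)];
 [:: (4,4); (1,2); (0,8); (2,0); (3,3)];
 [:: (4,4); (1,4); (2,5); (0,1); (4,8)];
 [:: (4,4); (1,6); (2,1); (3,3); (1,9)];
 [:: (4,4); (1,7); (0,2); (3,6); (2,5)];
 [:: (4,4); (1,7); (3,1); (0,3); (2,9)];
 [:: (4,4); (1,9); (0,2); (2,0); (3,9)];
 [:: (4,4); (2,3); (0,2); (3,2); (4,0)];
 [:: (4,4); (2,4); (1,8); (3,5); (4,1)];
 [:: (4,4); (2,6); (1,4); (3,6); (4,8)];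
 [:: (4,4); (2,7); (3,7); (0,9); (4,5)];
 [:: (4,4); (2,8); (0,5); (3,0); (4,0)];
 [:: (4,4); (3,4); (2,3); (0,4); (4,0)];
 [:: (4,4); (3,5); (2,7); (0,7); (4,5)];
 [:: (4,4); (3,8); (0,0); (1,9); (4,0)];
 [:: (4,4); (3,9); (1,1); (0,5); (4,1)];
 [:: (4,5); (0,0); (1,3); (2,0); (3,4)];
 [:: (4,5); (0,0); (1,4); (3,2); (4,3)];
 [:: (4,5); (0,0); (1,6); (3,9); (4,4)];
 [:: (4,5); (0,0); (3,3); (2,6); (1,4)];
 [:: (4,5); (0,1); (1,8); (3,8); (4,1)];
 [:: (4,5); (0,1); (3,3); (2,3); (0,3)];
 [:: (4,5); (0,2); (1,9); (2,8); (3,8)];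
 [:: (4,5); (0,2); (2,0); (1,0); (0,3)];
 [:: (4,5); (0,2); (3,0); (2,1); (4,9)];
 [:: (4,5); (0,3); (3,6); (2,2); (0,2)];
 [:: (4,5); (0,4); (2,2); (1,0); (4,3)];
 [:: (4,5); (0,4); (3,0); (2,5); (4,8)];
 [:: (4,5); (0,5); (2,2); (1,8); (3,9)];
 [:: (4,5); (0,5); (2,6); (3,0); (4,0)];
 [:: (4,5); (0,5); (2,9); (1,1); (4,4)];
 [:: (4,5); (0,6); (1,1); (3,6); (4,4)];
 [:: (4,5); (0,6); (1,3); (3,4); (4,1)];
 [:: (4,5); (0,7); (1,0); (2,6); (3,0)];
 [:: (4,5); (0,8); (1,0); (3,4); (4,4)];
 [:: (4,5); (0,8); (1,6); (2,9); (3,9)];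
 [:: (4,5); (0,8); (3,1); (2,0); (1,2)];
 [:: (4,5); (0,8); (3,2); (2,6); (1,8)];
 [:: (4,5); (0,9); (1,1); (2,0); (3,7)];
 [:: (4,5); (1,0); (0,3); (2,1); (3,0)];
 [:: (4,5); (1,1); (0,1); (2,5); (3,0)];
 [:: (4,5); (1,2); (3,3); (2,2); (4,1)];
 [:: (4,5); (1,3); (0,9); (2,1); (3,4)];
 [:: (4,5); (1,5); (2,6); (0,2); (4,9)];
 [:: (4,5); (1,7); (2,2); (3,4); (1,0)];
 [:: (4,5); (1,8); (0,3); (3,7); (2,6)];
 [:: (4,5); (1,8); (3,2); (0,4); (2,0)];
 [:: (4,5); (2,4); (0,3); (3,3); (4,1)];
 [:: (4,5); (2,5); (1,9); (3,6); (4,2)];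
 [:: (4,5); (2,7); (1,5); (3,7); (4,9)];
 [:: (4,5); (2,8); (3,8); (0,0); (4,6)];
 [:: (4,5); (2,9); (0,6); (3,1); (4,1)];
 [:: (4,5); (3,0); (1,2); (0,6); (4,2)];
 [:: (4,5); (3,5); (2,4); (0,5); (4,1)];
 [:: (4,5); (3,6); (2,8); (0,8); (4,6)];
 [:: (4,5); (3,9); (0,1); (1,0); (4,1)];
 [:: (4,6); (0,0); (1,2); (2,1); (3,8)];
 [:: (4,6); (0,1); (1,4); (2,1); (3,5)];
 [:: (4,6); (0,1); (1,5); (3,3); (4,4)];
 [:: (4,6); (0,1); (1,7); (3,0); (4,5)];
 [:: (4,6); (0,1); (3,4); (2,7); (1,5)];
 [:: (4,6); (0,2); (1,9); (3,9); (4,2)];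
 [:: (4,6); (0,2); (3,4); (2,4); (0,4)];
 [:: (4,6); (0,3); (1,0); (2,9); (3,9)];
 [:: (4,6); (0,3); (2,1); (1,1); (0,4)];
 [:: (4,6); (0,3); (3,1); (2,2); (4,0)];
 [:: (4,6); (0,4); (3,7); (2,3); (0,3)];
 [:: (4,6); (0,5); (2,3); (1,1); (4,4)];
 [:: (4,6); (0,5); (3,1); (2,6); (4,9)];
 [:: (4,6); (0,6); (2,0); (1,2); (4,5)];
 [:: (4,6); (0,6); (2,3); (1,9); (3,0)];
 [:: (4,6); (0,6); (2,7); (3,1); (4,1)];
 [:: (4,6); (0,7); (1,2); (3,7); (4,5)];
 [:: (4,6); (0,7); (1,4); (3,5); (4,2)];
 [:: (4,6); (0,8); (1,1); (2,7); (3,1)];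
 [:: (4,6); (0,9); (1,1); (3,5); (4,5)];
 [:: (4,6); (0,9); (1,7); (2,0); (3,0)];
 [:: (4,6); (0,9); (3,2); (2,1); (1,3)];
 [:: (4,6); (0,9); (3,3); (2,7); (1,9)];
 [:: (4,6); (1,1); (0,4); (2,2); (3,1)];
 [:: (4,6); (1,2); (0,2); (2,6); (3,1)];
 [:: (4,6); (1,3); (3,4); (2,3); (4,2)];
 [:: (4,6); (1,4); (0,0); (2,2); (3,5)];
 [:: (4,6); (1,6); (2,7); (0,3); (4,0)];
 [:: (4,6); (1,8); (2,3); (3,5); (1,1)];
 [:: (4,6); (1,9); (0,4); (3,8); (2,7)];
 [:: (4,6); (1,9); (3,3); (0,5); (2,1)];
 [:: (4,6); (2,0); (0,7); (3,2); (4,2)];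
 [:: (4,6); (2,5); (0,4); (3,4); (4,2)];
 [:: (4,6); (2,6); (1,0); (3,7); (4,3)];
 [:: (4,6); (2,8); (1,6); (3,8); (4,0)];
 [:: (4,6); (2,9); (3,9); (0,1); (4,7)];
 [:: (4,6); (3,0); (0,2); (1,1); (4,2)];
 [:: (4,6); (3,1); (1,3); (0,7); (4,3)];
 [:: (4,6); (3,6); (2,5); (0,6); (4,2)];
 [:: (4,6); (3,7); (2,9); (0,9); (4,7)];
 [:: (4,7); (0,0); (1,2); (3,6); (4,6)];
 [:: (4,7); (0,0); (1,8); (2,1); (3,1)];
 [:: (4,7); (0,0); (3,3); (2,2); (1,4)];
 [:: (4,7); (0,0); (3,4); (2,8); (1,0)];
 [:: (4,7); (0,1); (1,3); (2,2); (3,9)];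
 [:: (4,7); (0,2); (1,5); (2,2); (3,6)];
 [:: (4,7); (0,2); (1,6); (3,4); (4,5)];
 [:: (4,7); (0,2); (1,8); (3,1); (4,6)];
 [:: (4,7); (0,2); (3,5); (2,8); (1,6)];
 [:: (4,7); (0,3); (1,0); (3,0); (4,3)];
 [:: (4,7); (0,3); (3,5); (2,5); (0,5)];
 [:: (4,7); (0,4); (1,1); (2,0); (3,0)];
 [:: (4,7); (0,4); (2,2); (1,2); (0,5)];
 [:: (4,7); (0,4); (3,2); (2,3); (4,1)];
 [:: (4,7); (0,5); (3,8); (2,4); (0,4)];
 [:: (4,7); (0,6); (2,4); (1,2); (4,5)];
 [:: (4,7); (0,6); (3,2); (2,7); (4,0)];
 [:: (4,7); (0,7); (2,1); (1,3); (4,6)];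
 [:: (4,7); (0,7); (2,4); (1,0); (3,1)];
 [:: (4,7); (0,7); (2,8); (3,2); (4,2)];
 [:: (4,7); (0,8); (1,3); (3,8); (4,6)];
 [:: (4,7); (0,8); (1,5); (3,6); (4,3)];
 [:: (4,7); (0,9); (1,2); (2,8); (3,2)];
 [:: (4,7); (1,0); (0,5); (3,9); (2,8)];
 [:: (4,7); (1,0); (3,4); (0,6); (2,2)];
 [:: (4,7); (1,2); (0,5); (2,3); (3,2)];
 [:: (4,7); (1,3); (0,3); (2,7); (3,2)];
 [:: (4,7); (1,4); (3,5); (2,4); (4,3)];
 [:: (4,7); (1,5); (0,1); (2,3); (3,6)];
 [:: (4,7); (1,7); (2,8); (0,4); (4,1)];
 [:: (4,7); (1,9); (2,4); (3,6); (1,2)];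
 [:: (4,7); (2,0); (3,0); (0,2); (4,8)];
 [:: (4,7); (2,1); (0,8); (3,3); (4,3)];
 [:: (4,7); (2,6); (0,5); (3,5); (4,3)];
 [:: (4,7); (2,7); (1,1); (3,8); (4,4)];
 [:: (4,7); (2,9); (1,7); (3,9); (4,1)];
 [:: (4,7); (3,1); (0,3); (1,2); (4,3)];
 [:: (4,7); (3,2); (1,4); (0,8); (4,4)];
 [:: (4,7); (3,7); (2,6); (0,7); (4,3)];
 [:: (4,7); (3,8); (2,0); (0,0); (4,8)];
 [:: (4,8); (0,0); (1,3); (2,9); (3,3)];
 [:: (4,8); (0,1); (1,3); (3,7); (4,7)];
 [:: (4,8); (0,1); (1,9); (2,2); (3,2)];
 [:: (4,8); (0,1); (3,4); (2,3); (1,5)];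
 [:: (4,8); (0,1); (3,5); (2,9); (1,1)];
 [:: (4,8); (0,2); (1,4); (2,3); (3,0)];
 [:: (4,8); (0,3); (1,6); (2,3); (3,7)];
 [:: (4,8); (0,3); (1,7); (3,5); (4,6)];
 [:: (4,8); (0,3); (1,9); (3,2); (4,7)];
 [:: (4,8); (0,3); (3,6); (2,9); (1,7)];
 [:: (4,8); (0,4); (1,1); (3,1); (4,4)];
 [:: (4,8); (0,4); (3,6); (2,6); (0,6)];
 [:: (4,8); (0,5); (1,2); (2,1); (3,1)];
 [:: (4,8); (0,5); (2,3); (1,3); (0,6)];
 [:: (4,8); (0,5); (3,3); (2,4); (4,2)];
 [:: (4,8); (0,6); (3,9); (2,5); (0,5)];
 [:: (4,8); (0,7); (2,5); (1,3); (4,6)];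
 [:: (4,8); (0,7); (3,3); (2,8); (4,1)];
 [:: (4,8); (0,8); (2,2); (1,4); (4,7)];
 [:: (4,8); (0,8); (2,5); (1,1); (3,2)];
 [:: (4,8); (0,8); (2,9); (3,3); (4,3)];
 [:: (4,8); (0,9); (1,4); (3,9); (4,7)];
 [:: (4,8); (0,9); (1,6); (3,7); (4,4)];
 [:: (4,8); (1,0); (2,5); (3,7); (1,3)];
 [:: (4,8); (1,1); (0,6); (3,0); (2,9)];
 [:: (4,8); (1,1); (3,5); (0,7); (2,3)];
 [:: (4,8); (1,3); (0,6); (2,4); (3,3)];
 [:: (4,8); (1,4); (0,4); (2,8); (3,3)];
 [:: (4,8); (1,5); (3,6); (2,5); (4,4)];
 [:: (4,8); (1,6); (0,2); (2,4); (3,7)];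
 [:: (4,8); (1,8); (2,9); (0,5); (4,2)];
 [:: (4,8); (2,0); (1,8); (3,0); (4,2)];
 [:: (4,8); (2,1); (3,1); (0,3); (4,9)];
 [:: (4,8); (2,2); (0,9); (3,4); (4,4)];
 [:: (4,8); (2,7); (0,6); (3,6); (4,4)];
 [:: (4,8); (2,8); (1,2); (3,9); (4,5)];
 [:: (4,8); (3,2); (0,4); (1,3); (4,4)];
 [:: (4,8); (3,3); (1,5); (0,9); (4,5)];
 [:: (4,8); (3,8); (2,7); (0,8); (4,4)];
 [:: (4,8); (3,9); (2,1); (0,1); (4,9)];
 [:: (4,9); (0,0); (1,5); (3,0); (4,8)];
 [:: (4,9); (0,0); (1,7); (3,8); (4,5)];
 [:: (4,9); (0,1); (1,4); (2,0); (3,4)];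
 [:: (4,9); (0,2); (1,0); (2,3); (3,3)];
 [:: (4,9); (0,2); (1,4); (3,8); (4,8)];
 [:: (4,9); (0,2); (3,5); (2,4); (1,6)];
 [:: (4,9); (0,2); (3,6); (2,0); (1,2)];
 [:: (4,9); (0,3); (1,5); (2,4); (3,1)];
 [:: (4,9); (0,4); (1,0); (3,3); (4,8)];
 [:: (4,9); (0,4); (1,7); (2,4); (3,8)];
 [:: (4,9); (0,4); (1,8); (3,6); (4,7)];
 [:: (4,9); (0,4); (3,7); (2,0); (1,8)];
 [:: (4,9); (0,5); (1,2); (3,2); (4,5)];
 [:: (4,9); (0,5); (3,7); (2,7); (0,7)];
 [:: (4,9); (0,6); (1,3); (2,2); (3,2)];
 [:: (4,9); (0,6); (2,4); (1,4); (0,7)];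
 [:: (4,9); (0,6); (3,4); (2,5); (4,3)];
 [:: (4,9); (0,7); (3,0); (2,6); (0,6)];
 [:: (4,9); (0,8); (2,6); (1,4); (4,7)];
 [:: (4,9); (0,8); (3,4); (2,9); (4,2)];
 [:: (4,9); (0,9); (2,0); (3,4); (4,4)];
 [:: (4,9); (0,9); (2,3); (1,5); (4,8)];
 [:: (4,9); (0,9); (2,6); (1,2); (3,3)];
 [:: (4,9); (1,1); (2,6); (3,8); (1,4)];
 [:: (4,9); (1,2); (0,7); (3,1); (2,0)];
 [:: (4,9); (1,2); (3,6); (0,8); (2,4)];
 [:: (4,9); (1,4); (0,7); (2,5); (3,4)];
 [:: (4,9); (1,5); (0,5); (2,9); (3,4)];
 [:: (4,9); (1,6); (3,7); (2,6); (4,5)];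
 [:: (4,9); (1,7); (0,3); (2,5); (3,8)];
 [:: (4,9); (1,9); (2,0); (0,6); (4,3)];
 [:: (4,9); (2,1); (1,9); (3,1); (4,3)];
 [:: (4,9); (2,2); (3,2); (0,4); (4,0)];
 [:: (4,9); (2,3); (0,0); (3,5); (4,5)];
 [:: (4,9); (2,8); (0,7); (3,7); (4,5)];
 [:: (4,9); (2,9); (1,3); (3,0); (4,6)];
 [:: (4,9); (3,0); (2,2); (0,2); (4,0)];
 [:: (4,9); (3,3); (0,5); (1,4); (4,5)];
 [:: (4,9); (3,4); (1,6); (0,0); (4,6)];
 [:: (4,9); (3,9); (2,8); (0,9); (4,5)]].

Lemma chk_d105 : checker 4 9 d105.
Proof. by vm_compute. Qed.

Theorem lemma3p3 (g n : nat) :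
  (g, n) \in [:: (5, 4); (5, 6); (10, 5)] -> GDD_K4e_exists g n.
Proof.
rewrite !inE => /or3P[] /eqP [-> ->].
- by exists (XT 3 4), (GG 3 4), (map (@mkH 3 4) d54); apply: main; exact: chk_d54.
- by exists (XT 5 4), (GG 5 4), (map (@mkH 5 4) d56); apply: main; exact: chk_d56.
- by exists (XT 4 9), (GG 4 9), (map (@mkH 4 9) d105); apply: main; exact: chk_d105.
Qed.
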